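(* Let $\Phi\in C^1(V,\mathbb{R})$ be twice continuously differentiable on a neighbourhood of $B_{++}$, with $\nabla\Phi(w,u)\in V_{++}$ for all $(w,u)\in S_+\cup B_{++}$, so that $G^\Phi:B_{++}\to B_{++}$ is well defined. Suppose there is a matrix $A\in\mathbb{R}^{(K+1)\times(K+1)}_+$ such that $F=G^\Phi$ and $A$ satisfy, for all $i,k\in[K]$, $j,a\in[n_1]$, $b\in[d]$ and $(w,u)\in B_{++}$, $$\langle|\nabla_{w_k}F_{w_{i,j}}|,w_k\rangle\le A_{i,k}F_{w_{i,j}},\ \ \langle|\nabla_u F_{w_{i,j}}|,u\rangle\le A_{i,K+1}F_{w_{i,j}},\ \ \langle|\nabla_{w_k}F_{u_{ab}}|,w_k\rangle\le A_{K+1,k}F_{u_{ab}},\ \ \langle|\nabla_u F_{u_{ab}}|,u\rangle\le A_{K+1,K+1}F_{u_{ab}}$$ (all evaluated at $(w,u)$), and that $A^T$ has an eigenvector $\gamma\in\mathbb{R}^{K+1}_{++}$. If $\rho(A)<1$, then $\Phi$ has a unique critical point $(w^*,u^* )$ on $S_{++}$ (in the sense of existence of Lagrange multipliers $\lambda_j$ with $\nabla_{w_j}\Phi=\lambda_j\psi_{p_w}(w_j)$, $\nabla_u\Phi=\lambda_{K+1}\psi_{p_u}(u)$), and it is the global maximizer of $\Phi$ on $S_+$. Moreover, for every $(w^0,u^0)\in S_{++}$ the sequence $(w^{k+1},u^{k+1})=G^\Phi(w^k,u^k)$ converges to $(w^*,u^* )$ and $$\|(w^k,u^k)-(w^*,u^*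 )\|_\infty\le\rho(A)^k\,\frac{\mu_\gamma\big((w^1,u^1),(w^0,u^0)\big)}{(1-\rho(A))\min\big\{\frac{\gamma_{K+1}}{\rho_u},\min_{t\in[K]}\frac{\gamma_t}{\rho_w}\big\}}\qquad\forall k\in\mathbb{N}.$$
   Context: $\mathbb{R}_+=[0,\infty)$, $\mathbb{R}_{++}=(0,\infty)$. $V=\mathbb{R}^{K\times n_1}\times\mathbb{R}^{n_1\times d}$, $V_{++}=\mathbb{R}^{K\times n_1}_{++}\times\mathbb{R}^{n_1\times d}_{++}$; $w$ has rows $w_1,\dots,w_K$; $\|\cdot\|_p$ of a matrix is the entrywise $\ell_p$ norm; $\|\cdot\|_\infty$ is the maximum absolute entry. Given $p_w,p_u\in(1,\infty)$ and $\rho_w,\rho_u>0$: $S_+=\{(w,u)\in\mathbb{R}^{K\times n_1}_+\times\mathbb{R}^{n_1\times d}_+ : \|u\|_{p_u}=\rho_u,\ \|w_i\|_{p_w}=\rho_w\ \forall i\}$, $S_{++}=S_+\cap V_{++}$, $B_{++}=\{(w,u)\in V_{++} : \|u\|_{p_u}\le\rho_u,\ \|w_i\|_{p_w}\le\rho_w\ \forall i\}$. For $p\in(1,\infty)$, $p'=p/(p-1)$, $\psi_p(z)=\operatorname{sign}(z)|z|^{p-1}$ componentwise. $$G^{\Phi}(w,u)=\Big(\tfrac{\rho_w\psi_{p_w'}(\nabla_{w_1}\Phi)}{\|\psi_{p_w'}(\nabla_{w_1}\Phi)\|_{p_w}},\dots,\tfrac{\rho_w\psi_{p_w'}(\nabla_{w_K}\Phi)}{\|\psi_{p_w'}(\nabla_{w_K}\Phi)\|_{p_w}},\tfrac{\rho_u\psi_{p_u'}(\nabla_u\Phi)}{\|\psi_{p_u'}(\nabla_u\Phi)\|_{p_u}}\Big)(w,u),$$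 with components $F_{w_{i,j}}$, $F_{u_{ab}}$ of $F=G^\Phi$. $|\cdot|$ is entrywise absolute value, $\langle\cdot,\cdot\rangle$ the Frobenius inner product, $\rho(A)$ the spectral radius. For $\gamma\in\mathbb{R}^{K+1}_{++}$, $\mu_\gamma((w,u),(\tilde w,\tilde u))=\sum_{i=1}^K\gamma_i\|\ln w_i-\ln\tilde w_i\|_\infty+\gamma_{K+1}\|\ln u-\ln\tilde u\|_\infty$ ($\ln$ entrywise). *)

(* Defs.v *)
From Stdlib Require Import Reals Lra Lia Arith Bool ClassicalEpsilon.
Open Scope R_scope.

(* Coordinates of V = R^{K x n1} x R^{n1 x d}:  CW i j = w_{i,j},  CU a b = u_{a,b}
   (0-based indices).  A point of V is a function Co -> R which vanishes
   outside the index range (see [supp]). *)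
Inductive Co : Type := CW (i j : nat) | CU (a b : nat).

Definition Co_eqb (c c' : Co) : bool :=
  match c, c' with
  | CW i j, CW i' j' => Nat.eqb i i' && Nat.eqb j j'
  | CU a b, CU a' b' => Nat.eqb a a' && Nat.eqb b b'
  | _, _ => false
  end.

Definition inR (K n1 d : nat) (c : Co) : bool :=
  match c with
  | CW i j => Nat.ltb i K && Nat.ltb j n1
  | CU a b => Nat.ltb a n1 && Nat.ltb b d
  end.

Definition Pt := Co -> R.

Definition supp (K n1 d : nat) (x : Pt) : Prop :=
  forall c, inR K n1 d c = false -> x c = 0.

Definition padd (x y : Pt) : Pt := fun c => x c + y c.
Definition pscale (t : R) (x : Pt) : Pt := fun c => t * x c.
Definition ebas (c : Co) : Pt := fun c' => if Co_eqb c c' then 1 else 0.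

Fixpoint rsum (m : nat) (f : nat -> R) : R :=
  match m with O => 0 | S m' => rsum m' f + f m' end.
Fixpoint rmaxn (m : nat) (f : nat -> R) : R :=
  match m with O => 0 | S m' => Rmax (rmaxn m' f) (f m') end.
(* minimum of f 0, ..., f (m-1) (only meaningful for m >= 1) *)
Fixpoint rminn (m : nat) (f : nat -> R) : R :=
  match m with O => f O | S O => f O | S m' => Rmin (rminn m' f) (f m') end.

(* x^q for x >= 0 (with 0^q = 0, q > 0) *)
Definition powp (x q : R) : R :=
  match Rle_lt_dec x 0 with left _ => 0 | right _ => Rpower x q end.

Definition psi (p z : R) : R :=
  match Rlt_dec z 0 with left _ => - powp (- z) (p - 1) | right _ => powp z (p - 1) end.

Definition conjexp (p : R) : R := p / (p - 1).

Definition rownorm (n1 : nat) (p : R) (x : Pt) (i : nat) : R :=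
  powp (rsum n1 (fun j => powp (Rabs (x (CW i j))) p)) (1 / p).
Definition unorm (n1 d : nat) (p : R) (x : Pt) : R :=
  powp (rsum n1 (fun a => rsum d (fun b => powp (Rabs (x (CU a b))) p))) (1 / p).

Definition linf (K n1 d : nat) (x : Pt) : R :=
  Rmax (rmaxn K (fun i => rmaxn n1 (fun j => Rabs (x (CW i j)))))
       (rmaxn n1 (fun a => rmaxn d (fun b => Rabs (x (CU a b))))).

Definition S_plus (K n1 d : nat) (pw pu rw ru : R) (x : Pt) : Prop :=
  supp K n1 d x /\ (forall c, inR K n1 d c = true -> 0 <= x c) /\
  unorm n1 d pu x = ru /\ (forall i, (i < K)%nat -> rownorm n1 pw x i = rw).

Definition S_pp (K n1 d : nat) (pw pu rw ru : R) (x : Pt) : Prop :=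
  S_plus K n1 d pw pu rw ru x /\ (forall c, inR K n1 d c = true -> 0 < x c).

Definition B_pp (K n1 d : nat) (pw pu rw ru : R) (x : Pt) : Prop :=
  supp K n1 d x /\ (forall c, inR K n1 d c = true -> 0 < x c) /\
  unorm n1 d pu x <= ru /\ (forall i, (i < K)%nat -> rownorm n1 pw x i <= rw).

(* partial derivative of f at x in the coordinate direction c
   (the value of the derivative when it exists) *)
Definition pd (f : Pt -> R) (x : Pt) (c : Co) : R :=
  epsilon (inhabits 0)
    (fun l => derivable_pt_lim (fun t => f (padd x (pscale t (ebas c)))) 0 l).

Definition has_pd (f : Pt -> R) (x : Pt) (c : Co) : Prop :=
  exists l, derivable_pt_lim (fun t => f (padd x (pscale t (ebas c)))) 0 l.

Definition grad (K n1 d : nat) (Phi : Pt -> R) (x : Pt) : Pt :=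
  fun c => if inR K n1 d c then pd Phi x c else 0.

Definition cont_on (K n1 d : nat) (U : Pt -> Prop) (g : Pt -> R) : Prop :=
  forall x, U x -> forall eps, 0 < eps -> exists delta, 0 < delta /\
    forall y, U y -> (forall c, inR K n1 d c = true -> Rabs (y c - x c) < delta) ->
      Rabs (g y - g x) < eps.

Definition Vopen (K n1 d : nat) (U : Pt -> Prop) : Prop :=
  forall x, U x -> supp K n1 d x -> exists delta, 0 < delta /\
    forall y, supp K n1 d y ->
      (forall c, inR K n1 d c = true -> Rabs (y c - x c) < delta) -> U y.

Definition Phi_C1 (K n1 d : nat) (Phi : Pt -> R) : Prop :=
  forall c, inR K n1 d c = true ->
    (forall x, supp K n1 d x -> has_pd Phi x c) /\
    cont_on K n1 d (supp K n1 d) (fun x => pd Phi x c).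

Definition C2_on (K n1 d : nat) (U : Pt -> Prop) (Phi : Pt -> R) : Prop :=
  forall c, inR K n1 d c = true ->
    (forall x, U x -> has_pd Phi x c) /\
    cont_on K n1 d U (fun x => pd Phi x c) /\
    forall c', inR K n1 d c' = true ->
      (forall x, U x -> has_pd (fun y => pd Phi y c) x c') /\
      cont_on K n1 d U (fun x => pd (fun y => pd Phi y c) x c').

Definition Gmap (K n1 d : nat) (pw pu rw ru : R) (Phi : Pt -> R) (x : Pt) : Pt :=
  let g := grad K n1 d Phi x in
  let gw := fun c => psi (conjexp pw) (g c) in
  let gu := fun c => psi (conjexp pu) (g c) in
  fun c => if inR K n1 d c then
    match c with
    | CW i j => rw * gw c / rownorm n1 pw gw i
    | CU a b => ru * gu c / unorm n1 d pu gu
    end else 0.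

(* block index of a coordinate: w-row i -> i, u -> K  (0-based; the paper's K+1) *)
Definition blk (K : nat) (c : Co) : nat :=
  match c with CW i _ => i | CU _ _ => K end.

(* Complex eigenvalue a + i b of the real m x m matrix A (indices 0..m-1),
   with eigenvector x + i y <> 0 *)
Definition is_ceigenvalue (m : nat) (A : nat -> nat -> R) (a b : R) : Prop :=
  exists x y : nat -> R,
    (exists k, (k < m)%nat /\ (x k <> 0 \/ y k <> 0)) /\
    forall i, (i < m)%nat ->
      rsum m (fun j => A i j * x j) = a * x i - b * y i /\
      rsum m (fun j => A i j * y j) = b * x i + a * y i.

Definition is_spectral_radius (m : nat) (A : nat -> nat -> R) (r : R) : Prop :=
  (exists a b, is_ceigenvalue m A a b /\ sqrt (a * a + b * b) = r) /\
  (forall a b, is_ceigenvalue m A a b -> sqrt (a * a + b * b) <= r).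

Definition mu (K n1 d : nat) (gam : nat -> R) (x y : Pt) : R :=
  rsum K (fun i => gam i * rmaxn n1 (fun j => Rabs (ln (x (CW i j)) - ln (y (CW i j)))))
  + gam K * rmaxn n1 (fun a => rmaxn d (fun b => Rabs (ln (x (CU a b)) - ln (y (CU a b))))).

Definition crit_pt (K n1 d : nat) (pw pu rw ru : R) (Phi : Pt -> R) (x : Pt) : Prop :=
  S_pp K n1 d pw pu rw ru x /\
  exists lam : nat -> R,
    (forall i j, (i < K)%nat -> (j < n1)%nat ->
       pd Phi x (CW i j) = lam i * psi pw (x (CW i j))) /\
    (forall a b, (a < n1)%nat -> (b < d)%nat ->
       pd Phi x (CU a b) = lam K * psi pu (x (CU a b))).

(* Main.v *)
Require Import Defs.
From Stdlib Require Import Reals Lra Lia Arith Bool List ClassicalEpsilon FunctionalExtensionality Classical.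
From Coquelicot Require Coquelicot.
Open Scope R_scope.


Module CQ.
Import Coquelicot.Coquelicot.
Lemma d_gexp a b t0 : derivable_pt_lim (fun t => exp ((1 - t) * a + t * b)) t0 (exp ((1 - t0) * a + t0 * b) * (b - a)).
Proof. apply is_derive_Reals. auto_derive; auto. replace (1 + - t0) with (1 - t0) by ring. ring. Qed.
Lemma d_aff a b t0 : derivable_pt_lim (fun t => a + t * b) t0 b.
Proof. apply is_derive_Reals. auto_derive; auto. ring. Qed.
Lemma d_aff2 s w t0 : derivable_pt_lim (fun t => (1 + t * s) * w) t0 (s * w).
Proof. apply is_derive_Reals. auto_derive; auto. ring. Qed.
End CQ.

Lemma Co_eqb_spec c c' : Co_eqb c c' = true <-> c = c'.
Proof.
destruct c, c'; simpl; split; intro H; try discriminate;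
 try (apply andb_true_iff in H; destruct H as [H1 H2];
      apply Nat.eqb_eq in H1; apply Nat.eqb_eq in H2; subst; reflexivity);
 try (inversion H; subst; rewrite !Nat.eqb_refl; reflexivity).
Qed.

Lemma Co_eqb_refl c : Co_eqb c c = true.
Proof. apply Co_eqb_spec; reflexivity. Qed.

Lemma Co_eqb_neq c c' : c <> c' -> Co_eqb c c' = false.
Proof. intro H. destruct (Co_eqb c c') eqn:E; auto. apply Co_eqb_spec in E. contradiction. Qed.

Lemma Co_dec (c c' : Co) : {c = c'} + {c <> c'}.
Proof. decide equality; apply Nat.eq_dec. Qed.

Lemma rsum_ext m f g : (forall i, (i < m)%nat -> f i = g i) -> rsum m f = rsum m g.
Proof.
induction m; simpl; intros; auto.
rewrite IHm by (intros; apply H; lia). rewrite H by lia. reflexivity.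
Qed.

Lemma rsum_plus m f g : rsum m (fun i => f i + g i) = rsum m f + rsum m g.
Proof. induction m; simpl; [lra|rewrite IHm; lra]. Qed.

Lemma rsum_minus m f g : rsum m (fun i => f i - g i) = rsum m f - rsum m g.
Proof. induction m; simpl; [lra|rewrite IHm; lra]. Qed.

Lemma rsum_scal m a f : rsum m (fun i => a * f i) = a * rsum m f.
Proof. induction m; simpl; [lra|rewrite IHm; lra]. Qed.

Lemma rsum_zero m : rsum m (fun _ => 0) = 0.
Proof. induction m; simpl; [lra|rewrite IHm; lra]. Qed.

Lemma rsum_le m f g : (forall i, (i < m)%nat -> f i <= g i) -> rsum m f <= rsum m g.
Proof.
induction m; simpl; intros; [lra|].
assert (rsum m f <= rsum m g) by (apply IHm; intros; apply H; lia).
assert (f m <= g m) by (apply H; lia). lra.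
Qed.

Lemma rsum_lt m f g : (forall i, (i < m)%nat -> f i <= g i) ->
  (exists i, (i < m)%nat /\ f i < g i) -> rsum m f < rsum m g.
Proof.
induction m; simpl; intros H [i [Hi Hlt]]; [lia|].
destruct (Nat.eq_dec i m).
- subst. assert (rsum m f <= rsum m g) by (apply rsum_le; intros; apply H; lia). lra.
- assert (rsum m f < rsum m g) by (apply IHm; [intros; apply H; lia| exists i; split; [lia|auto]]).
  assert (f m <= g m) by (apply H; lia). lra.
Qed.

Lemma rsum_nonneg m f : (forall i, (i < m)%nat -> 0 <= f i) -> 0 <= rsum m f.
Proof. intros. rewrite <- (rsum_zero m). apply rsum_le. auto. Qed.

Lemma rsum_pos m f : (1 <= m)%nat -> (forall i, (i < m)%nat -> 0 < f i) -> 0 < rsum m f.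
Proof.
intros. rewrite <- (rsum_zero m). apply rsum_lt. intros; left; auto.
exists 0%nat; split; [lia|]. apply H0; lia.
Qed.

Lemma rsum_abs m f : Rabs (rsum m f) <= rsum m (fun i => Rabs (f i)).
Proof.
induction m; simpl.
- rewrite Rabs_R0; lra.
- eapply Rle_trans; [apply Rabs_triang|]. lra.
Qed.

Lemma rsum_swap m n (f : nat -> nat -> R) :
  rsum m (fun i => rsum n (fun j => f i j)) = rsum n (fun j => rsum m (fun i => f i j)).
Proof.
induction m; simpl.
- symmetry. apply rsum_zero.
- rewrite IHm. rewrite <- rsum_plus. reflexivity.
Qed.

Lemma rsum_ge_term m f i : (forall k, (k < m)%nat -> 0 <= f k) -> (i < m)%nat -> f i <= rsum m f.
Proof.
induction m; intros; [lia|]. simpl.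
destruct (Nat.eq_dec i m).
- subst. assert (0 <= rsum m f) by (apply rsum_nonneg; intros; apply H; lia). lra.
- assert (f i <= rsum m f) by (apply IHm; [intros; apply H; lia|lia]).
  assert (0 <= f m) by (apply H; lia). lra.
Qed.

Lemma rmaxn_nonneg m f : 0 <= rmaxn m f.
Proof. induction m; simpl; [lra|]. eapply Rle_trans; [apply IHm|apply Rmax_l]. Qed.

Lemma rmaxn_ge m f i : (i < m)%nat -> f i <= rmaxn m f.
Proof.
induction m; intros; [lia|]. simpl.
destruct (Nat.eq_dec i m).
- subst. apply Rmax_r.
- eapply Rle_trans; [apply IHm; lia|apply Rmax_l].
Qed.

Lemma rmaxn_le m f B : 0 <= B -> (forall i, (i < m)%nat -> f i <= B) -> rmaxn m f <= B.
Proof.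
induction m; simpl; intros; auto.
apply Rmax_lub; [apply IHm; auto|apply H0; lia].
Qed.

Lemma rmaxn_ext m f g : (forall i, (i < m)%nat -> f i = g i) -> rmaxn m f = rmaxn m g.
Proof.
induction m; simpl; intros; auto.
rewrite IHm by (intros; apply H; lia). rewrite H by lia. reflexivity.
Qed.

Lemma rmaxn_mono m f g : (forall i, (i < m)%nat -> f i <= g i) -> rmaxn m f <= rmaxn m g.
Proof.
intros. apply rmaxn_le; [apply rmaxn_nonneg|].
intros. eapply Rle_trans; [apply H; auto|apply rmaxn_ge; auto].
Qed.

Lemma rmaxn_add m f g : (forall i, (i < m)%nat -> 0 <= f i) -> (forall i, (i < m)%nat -> 0 <= g i) ->
  rmaxn m (fun i => f i + g i) <= rmaxn m f + rmaxn m g.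
Proof.
intros. apply rmaxn_le.
- pose proof (rmaxn_nonneg m f); pose proof (rmaxn_nonneg m g); lra.
- intros. pose proof (rmaxn_ge m f i H1); pose proof (rmaxn_ge m g i H1); lra.
Qed.

Lemma rmaxn_zero m f : (forall i, (i < m)%nat -> f i <= 0) -> rmaxn m f = 0.
Proof. intros. apply Rle_antisym; [apply rmaxn_le; auto; lra|apply rmaxn_nonneg]. Qed.

Lemma rminn_le m f i : (i < m)%nat -> rminn m f <= f i.
Proof.
induction m; intros; [lia|].
destruct m.
- simpl. assert (i = 0%nat) by lia. subst. lra.
- change (rminn (S (S m)) f) with (Rmin (rminn (S m) f) (f (S m))).
  destruct (Nat.eq_dec i (S m)).
  + subst. apply Rmin_r.
  + eapply Rle_trans; [apply Rmin_l|apply IHm; lia].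
Qed.

Lemma rminn_pos m f : (forall i, (i <= m)%nat -> 0 < f i) -> 0 < rminn m f.
Proof.
induction m; intros; simpl; [apply H; lia|].
destruct m; [apply H; lia|].
apply Rmin_glb_lt; [apply IHm; intros; apply H; lia|apply H; lia].
Qed.

Definition allsum (K n1 d : nat) (f : Co -> R) : R :=
  rsum K (fun i => rsum n1 (fun j => f (CW i j))) + rsum n1 (fun a => rsum d (fun b => f (CU a b))).

Definition coords (K n1 d : nat) : list Co :=
  flat_map (fun i => map (CW i) (seq 0 n1)) (seq 0 K) ++
  flat_map (fun a => map (CU a) (seq 0 d)) (seq 0 n1).

Fixpoint lsum (L : list Co) (f : Co -> R) : R :=
  match L with nil => 0 | c :: L' => f c + lsum L' f end.

Lemma lsum_app L1 L2 f : lsum (L1 ++ L2) f = lsum L1 f + lsum L2 f.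
Proof. induction L1; simpl; [lra|rewrite IHL1; lra]. Qed.

Lemma lsum_map_seq (g : nat -> Co) m f : lsum (map g (seq 0 m)) f = rsum m (fun i => f (g i)).
Proof.
induction m; auto.
rewrite seq_S, map_app, lsum_app, IHm. simpl. lra.
Qed.

Lemma lsum_flat_map_seq (g : nat -> list Co) m f :
  lsum (flat_map g (seq 0 m)) f = rsum m (fun i => lsum (g i) f).
Proof.
induction m; auto.
rewrite seq_S, flat_map_app, lsum_app, IHm. simpl. rewrite app_nil_r. reflexivity.
Qed.

Lemma lsum_coords K n1 d f : lsum (coords K n1 d) f = allsum K n1 d f.
Proof.
unfold coords, allsum. rewrite lsum_app, !lsum_flat_map_seq.
f_equal; apply rsum_ext; intros; apply lsum_map_seq.
Qed.

Lemma In_coords K n1 d c : In c (coords K n1 d) <-> inR K n1 d c = true.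
Proof.
unfold coords. rewrite in_app_iff, !in_flat_map.
destruct c; simpl; rewrite andb_true_iff, !Nat.ltb_lt; split.
- intros [[x [Hx Hm]]|[x [Hx Hm]]]; apply in_map_iff in Hm; destruct Hm as [y [Hy Hy']];
  try discriminate. inversion Hy; subst. apply in_seq in Hx; apply in_seq in Hy'. lia.
- intros [H1 H2]. left. exists i. split; [apply in_seq; lia|]. apply in_map_iff. exists j. split; auto. apply in_seq; lia.
- intros [[x [Hx Hm]]|[x [Hx Hm]]]; apply in_map_iff in Hm; destruct Hm as [y [Hy Hy']];
  try discriminate. inversion Hy; subst. apply in_seq in Hx; apply in_seq in Hy'. lia.
- intros [H1 H2]. right. exists a. split; [apply in_seq; lia|]. apply in_map_iff. exists b. split; auto. apply in_seq; lia.
Qed.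

Lemma NoDup_flat_map_seq (g : nat -> list Co) m :
  (forall i, NoDup (g i)) -> (forall i j c, i <> j -> In c (g i) -> In c (g j) -> False) ->
  NoDup (flat_map g (seq 0 m)).
Proof.
intros Hg Hd. induction m; [constructor|].
rewrite seq_S, flat_map_app. simpl. rewrite app_nil_r.
apply NoDup_app; auto.
intros c Hc1 Hc2. apply in_flat_map in Hc1. destruct Hc1 as [i [Hi Hc]].
apply in_seq in Hi. apply (Hd i m c); auto. lia.
Qed.

Lemma NoDup_coords K n1 d : NoDup (coords K n1 d).
Proof.
unfold coords. apply NoDup_app.
- apply NoDup_flat_map_seq.
  + intros. apply NoDup_map_inv with (f := fun c => match c with CW _ j => j | CU _ b => b end); rewrite map_map; simpl; rewrite map_id; apply seq_NoDup.
  + intros i j c Hij H1 H2. apply in_map_iff in H1, H2.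
    destruct H1 as [a [Ha _]], H2 as [b [Hb _]]. subst. inversion Hb. auto.
- apply NoDup_flat_map_seq.
  + intros. apply NoDup_map_inv with (f := fun c => match c with CW _ j => j | CU _ b => b end); rewrite map_map; simpl; rewrite map_id; apply seq_NoDup.
  + intros i j c Hij H1 H2. apply in_map_iff in H1, H2.
    destruct H1 as [a [Ha _]], H2 as [b [Hb _]]. subst. inversion Hb. auto.
- intros c H1 H2. apply in_flat_map in H1, H2.
  destruct H1 as [i [_ H1]], H2 as [j [_ H2]].
  apply in_map_iff in H1, H2. destruct H1 as [a [Ha _]], H2 as [b [Hb _]]. subst. discriminate.
Qed.

Lemma lsum_ext L f g : (forall c, In c L -> f c = g c) -> lsum L f = lsum L g.
Proof. induction L; simpl; intros; auto. rewrite H, IHL; auto. Qed.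

Lemma lsum_le L f g : (forall c, In c L -> f c <= g c) -> lsum L f <= lsum L g.
Proof.
induction L; simpl; intros; [lra|].
assert (f a <= g a) by auto. assert (lsum L f <= lsum L g) by auto. lra.
Qed.

Lemma lsum_plus L f g : lsum L (fun c => f c + g c) = lsum L f + lsum L g.
Proof. induction L; simpl; [lra|rewrite IHL; lra]. Qed.

Lemma lsum_scal L a f : lsum L (fun c => a * f c) = a * lsum L f.
Proof. induction L; simpl; [lra|rewrite IHL; lra]. Qed.

Lemma lsum_abs L f : Rabs (lsum L f) <= lsum L (fun c => Rabs (f c)).
Proof.
induction L; simpl; [rewrite Rabs_R0; lra|].
eapply Rle_trans; [apply Rabs_triang|lra].
Qed.

Lemma lsum_nonneg L f : (forall c, In c L -> 0 <= f c) -> 0 <= lsum L f.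
Proof. induction L; simpl; intros; [lra|]. assert (0 <= f a) by auto. assert (0 <= lsum L f) by auto. lra. Qed.

Lemma allsum_ext K n1 d f g : (forall c, inR K n1 d c = true -> f c = g c) -> allsum K n1 d f = allsum K n1 d g.
Proof.
intros. rewrite <- !lsum_coords. apply lsum_ext. intros. apply H, In_coords; auto.
Qed.

Lemma allsum_le K n1 d f g : (forall c, inR K n1 d c = true -> f c <= g c) -> allsum K n1 d f <= allsum K n1 d g.
Proof.
intros. rewrite <- !lsum_coords. apply lsum_le. intros. apply H, In_coords; auto.
Qed.

Lemma allsum_nonneg K n1 d f : (forall c, inR K n1 d c = true -> 0 <= f c) -> 0 <= allsum K n1 d f.
Proof. intros. rewrite <- !lsum_coords. apply lsum_nonneg. intros. apply H, In_coords; auto. Qed.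

Lemma allsum_abs K n1 d f : Rabs (allsum K n1 d f) <= allsum K n1 d (fun c => Rabs (f c)).
Proof. rewrite <- !lsum_coords. apply lsum_abs. Qed.

Lemma allsum_plus K n1 d f g : allsum K n1 d (fun c => f c + g c) = allsum K n1 d f + allsum K n1 d g.
Proof. rewrite <- !lsum_coords. apply lsum_plus. Qed.

Lemma allsum_scal K n1 d a f : allsum K n1 d (fun c => a * f c) = a * allsum K n1 d f.
Proof. rewrite <- !lsum_coords. apply lsum_scal. Qed.

Lemma list_delta (L : list Co) (P : Co -> R -> Prop) :
  (forall c d1 d2, 0 < d1 -> d1 <= d2 -> P c d2 -> P c d1) ->
  (forall c, In c L -> exists d, 0 < d /\ P c d) ->
  exists d, 0 < d /\ forall c, In c L -> P c d.
Proof.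
intros Hm. induction L; intros H.
- exists 1. split; [lra|]. intros c [].
- destruct (H a (or_introl eq_refl)) as [d1 [Hd1 Pd1]].
  destruct IHL as [d2 [Hd2 Pd2]]; [intros; apply H; right; auto|].
  exists (Rmin d1 d2). split; [apply Rmin_pos; auto|].
  intros c [Hc|Hc].
  + subst. apply (Hm c _ d1); auto; [apply Rmin_pos; auto|apply Rmin_l].
  + apply (Hm c _ d2); auto; [apply Rmin_pos; auto|apply Rmin_r].
Qed.

Definition upd (x : Pt) (c : Co) (v : R) : Pt := fun c' => if Co_eqb c c' then v else x c'.

Lemma upd_eq x c v : upd x c v c = v.
Proof. unfold upd. rewrite Co_eqb_refl. auto. Qed.

Lemma upd_neq x c c' v : c <> c' -> upd x c v c' = x c'.
Proof. intros. unfold upd. rewrite Co_eqb_neq; auto. Qed.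

Lemma upd_same x c : upd x c (x c) = x.
Proof.
apply functional_extensionality. intro c'. unfold upd.
destruct (Co_eqb c c') eqn:E; auto. apply Co_eqb_spec in E. subst. auto.
Qed.

Lemma upd_upd x c v w : upd (upd x c v) c w = upd x c w.
Proof.
apply functional_extensionality. intro c'. unfold upd.
destruct (Co_eqb c c'); auto.
Qed.

Lemma line_upd x c t : padd x (pscale t (ebas c)) = upd x c (x c + t).
Proof.
apply functional_extensionality. intro c'. unfold padd, pscale, ebas, upd.
destruct (Co_eqb c c') eqn:E.
- apply Co_eqb_spec in E. subst. ring.
- ring.
Qed.

Lemma supp_upd K n1 d x c v : supp K n1 d x -> inR K n1 d c = true -> supp K n1 d (upd x c v).
Proof.
intros Hs Hc c' Hc'. unfold upd. destruct (Co_eqb c c') eqn:E.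
- apply Co_eqb_spec in E. subst. congruence.
- apply Hs; auto.
Qed.

Lemma pd_spec f x c : has_pd f x c ->
  derivable_pt_lim (fun t => f (padd x (pscale t (ebas c)))) 0 (pd f x c).
Proof.
intros H. unfold pd. apply epsilon_spec. exact H.
Qed.

Lemma pd_unique f x c l :
  derivable_pt_lim (fun t => f (padd x (pscale t (ebas c)))) 0 l -> pd f x c = l.
Proof.
intros H. eapply uniqueness_limite; [apply pd_spec; exists l; exact H|exact H].
Qed.

Lemma deriv_upd f p c s : has_pd f (upd p c s) c ->
  derivable_pt_lim (fun s => f (upd p c s)) s (pd f (upd p c s) c).
Proof.
intros H. apply pd_spec in H.
intros eps Heps. destruct (H eps Heps) as [del Hdel].
exists del. intros h Hh Hhd.
specialize (Hdel h Hh Hhd).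
rewrite !line_upd, !upd_upd, upd_eq in Hdel.
replace (s + (0 + h)) with (s + h) in Hdel by ring. replace (s + 0) with s in Hdel by ring. exact Hdel.
Qed.

Definition nb (K n1 d : nat) (x y : Pt) (del : R) : Prop :=
  forall c, inR K n1 d c = true -> Rabs (y c - x c) < del.

Lemma mvt_bound (g g' : R -> R) a b L eps :
  (forall s, Rmin a b <= s <= Rmax a b -> derivable_pt_lim g s (g' s)) ->
  (forall s, Rmin a b <= s <= Rmax a b -> Rabs (g' s - L) <= eps) ->
  Rabs (g b - g a - L * (b - a)) <= eps * Rabs (b - a).
Proof.
intros Hd Hb.
destruct (Rtotal_order a b) as [Hab|[Hab|Hab]].
- destruct (MVT_cor2 g g' a b Hab) as [xi [Hxi Hr]].
  { intros; apply Hd. rewrite Rmin_left, Rmax_right by lra. lra. }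
  rewrite Hxi. replace (g' xi * (b - a) - L * (b - a)) with ((g' xi - L) * (b - a)) by ring.
  rewrite Rabs_mult. apply Rmult_le_compat_r; [apply Rabs_pos|].
  apply Hb. rewrite Rmin_left, Rmax_right by lra. lra.
- subst. replace (g b - g b - L * (b - b)) with 0 by ring. rewrite Rabs_R0.
  pose proof (Rabs_pos (b - b)). assert (0 <= eps).
  { eapply Rle_trans; [apply Rabs_pos|apply (Hb b)]. unfold Rmin, Rmax; destruct Rle_dec; lra. }
  nra.
- destruct (MVT_cor2 g g' b a Hab) as [xi [Hxi Hr]].
  { intros; apply Hd. rewrite Rmin_right, Rmax_left by lra. lra. }
  replace (g b - g a - L * (b - a)) with (- ((g a - g b) - L * (a - b))) by ring.
  rewrite Rabs_Ropp, Hxi, (Rabs_minus_sym b a).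
  replace (g' xi * (a - b) - L * (a - b)) with ((g' xi - L) * (a - b)) by ring.
  rewrite Rabs_mult. apply Rmult_le_compat_r; [apply Rabs_pos|].
  apply Hb. rewrite Rmin_right, Rmax_left by lra. lra.
Qed.

Definition updl (x y : Pt) (L : list Co) : Pt :=
  fold_right (fun c p => upd p c (y c)) x L.

Lemma updl_in x y L c : In c L -> updl x y L c = y c.
Proof.
induction L; simpl; [tauto|]; intros [H|H].
- subst. apply upd_eq.
- unfold upd. destruct (Co_eqb a c) eqn:E; [apply Co_eqb_spec in E; subst; auto|apply IHL; auto].
Qed.

Lemma updl_notin x y L c : ~ In c L -> updl x y L c = x c.
Proof.
induction L; simpl; intros H; auto.
rewrite upd_neq; [apply IHL; tauto|]. intro; apply H; auto.
Qed.

Lemma updl_coords K n1 d x y : supp K n1 d x -> supp K n1 d y -> updl x y (coords K n1 d) = y.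
Proof.
intros Hx Hy. apply functional_extensionality. intro c.
destruct (inR K n1 d c) eqn:E.
- apply updl_in, In_coords; auto.
- rewrite updl_notin; [rewrite Hx, Hy; auto|]. rewrite In_coords. congruence.
Qed.

Lemma updl_between x y L c : Rabs (updl x y L c - x c) <= Rabs (y c - x c).
Proof.
destruct (in_dec Co_dec c L).
- rewrite updl_in; auto; lra.
- rewrite updl_notin; auto. replace (x c - x c) with 0 by ring. rewrite Rabs_R0. apply Rabs_pos.
Qed.

Lemma supp_updl K n1 d x y L : supp K n1 d x -> supp K n1 d y -> supp K n1 d (updl x y L).
Proof.
intros Hx Hy c Hc. destruct (in_dec Co_dec c L).
- rewrite updl_in; auto.
- rewrite updl_notin; auto.
Qed.

Definition C1on (K n1 d : nat) (O : Pt -> Prop) (f : Pt -> R) : Prop :=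
  cont_on K n1 d O f /\
  forall c, inR K n1 d c = true ->
    (forall x, O x -> has_pd f x c) /\ cont_on K n1 d O (fun x => pd f x c).

Lemma frechet K n1 d O f x :
  Vopen K n1 d O ->
  (forall c, inR K n1 d c = true -> forall y, O y -> has_pd f y c) ->
  (forall c, inR K n1 d c = true -> cont_on K n1 d O (fun y => pd f y c)) ->
  O x -> supp K n1 d x ->
  forall eps, 0 < eps -> exists del, 0 < del /\
    forall y, supp K n1 d y -> nb K n1 d x y del ->
      Rabs (f y - f x - allsum K n1 d (fun c => pd f x c * (y c - x c)))
        <= eps * allsum K n1 d (fun c => Rabs (y c - x c)).
Proof.
intros HO Hpd Hc Ox Sx eps Heps.
destruct (HO x Ox Sx) as [d0 [Hd0 HO']].
destruct (list_delta (coords K n1 d)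
   (fun c del => forall y, O y -> nb K n1 d x y del -> Rabs (pd f y c - pd f x c) < eps))
  as [d1 [Hd1 Hd1']].
{ intros c a b Ha Hab H y Oy Hy. apply H; auto. intros c' Hc'. specialize (Hy c' Hc'). lra. }
{ intros c Hc'. apply In_coords in Hc'.
  destruct (Hc c Hc' x Ox eps Heps) as [del [Hdel H]].
  exists del. split; auto. }
exists (Rmin d0 d1). split; [apply Rmin_pos; auto|].
intros y Sy Hy.
assert (Hy0 : nb K n1 d x y d0) by (intros c Hc'; specialize (Hy c Hc'); pose proof (Rmin_l d0 d1); lra).
assert (Hy1 : nb K n1 d x y d1) by (intros c Hc'; specialize (Hy c Hc'); pose proof (Rmin_r d0 d1); lra).
rewrite <- !lsum_coords.
rewrite <- (updl_coords K n1 d x y) at 1 by auto.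
pose proof (NoDup_coords K n1 d) as ND.
assert (Hin : forall c, In c (coords K n1 d) -> inR K n1 d c = true) by (intros; apply In_coords; auto).
induction (coords K n1 d) as [|c L IH].
- simpl. replace (f x - f x - 0) with 0 by ring. rewrite Rabs_R0. lra.
- inversion ND; subst.
  specialize (IH (fun c' H => Hd1' c' (or_intror H)) H2 (fun c' H => Hin c' (or_intror H))).
  assert (Hc' : inR K n1 d c = true) by (apply Hin; left; auto).
  simpl.
  set (p := updl x y L) in *.
  assert (Hpc : p c = x c) by (apply updl_notin; auto).
  assert (Sp : supp K n1 d p) by (apply supp_updl; auto).
  assert (Hnear : forall s, Rmin (x c) (y c) <= s <= Rmax (x c) (y c) ->
            O (upd p c s) /\ nb K n1 d x (upd p c s) d1).
  { intros s Hs.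
    assert (Hs' : Rabs (s - x c) <= Rabs (y c - x c)).
    { unfold Rmin, Rmax in Hs. destruct (Rle_dec (x c) (y c)).
      - rewrite !Rabs_right by lra. lra.
      - rewrite !Rabs_left1 by lra. lra. }
    assert (Hnb : forall del, nb K n1 d x y del -> nb K n1 d x (upd p c s) del).
    { intros del Hdel c' Hc''. destruct (Co_dec c c').
      - subst. rewrite upd_eq. specialize (Hdel c' Hc''). lra.
      - rewrite upd_neq by auto. unfold p. pose proof (updl_between x y L c'). specialize (Hdel c' Hc''). lra. }
    split; [apply HO'; [apply supp_upd; auto|apply Hnb; auto]|apply Hnb; auto]. }
  assert (Hstep : Rabs (f (upd p c (y c)) - f p - pd f x c * (y c - x c)) <= eps * Rabs (y c - x c)).
  { rewrite <- (upd_same p c) at 2. rewrite Hpc.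
    apply (mvt_bound (fun s => f (upd p c s)) (fun s => pd f (upd p c s) c)).
    - intros s Hs. apply deriv_upd. apply Hpd; auto. apply Hnear; auto.
    - intros s Hs. destruct (Hnear s Hs) as [Os Ns].
      left. apply (Hd1' c (or_introl eq_refl)); auto. }
  replace (f (upd p c (y c)) - f x - (pd f x c * (y c - x c) + lsum L (fun c0 => pd f x c0 * (y c0 - x c0))))
    with ((f (upd p c (y c)) - f p - pd f x c * (y c - x c)) + (f p - f x - lsum L (fun c0 => pd f x c0 * (y c0 - x c0)))) by ring.
  eapply Rle_trans; [apply Rabs_triang|]. fold p in IH. lra.
Qed.

Lemma frechet_cont K n1 d O f x :
  Vopen K n1 d O ->
  (forall c, inR K n1 d c = true -> forall y, O y -> has_pd f y c) ->
  (forall c, inR K n1 d c = true -> cont_on K n1 d O (fun y => pd f y c)) ->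
  O x -> supp K n1 d x ->
  forall eps, 0 < eps -> exists del, 0 < del /\
    forall y, supp K n1 d y -> nb K n1 d x y del -> Rabs (f y - f x) < eps.
Proof.
intros HO Hpd Hc Ox Sx eps Heps.
destruct (frechet K n1 d O f x HO Hpd Hc Ox Sx 1 Rlt_0_1) as [dF [HdF HF]].
set (T := allsum K n1 d (fun c => Rabs (pd f x c) + 1)).
assert (HT : 0 <= T) by (apply allsum_nonneg; intros; pose proof (Rabs_pos (pd f x c)); lra).
exists (Rmin dF (eps / (2 * T + 1))). split.
{ apply Rmin_pos; auto. apply Rdiv_lt_0_compat; lra. }
intros y Sy Hy.
set (del := Rmin dF (eps / (2 * T + 1))) in *.
assert (Hdel : 0 < del) by (apply Rmin_pos; auto; apply Rdiv_lt_0_compat; lra).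
assert (Hdl : del <= dF) by apply Rmin_l.
assert (H1 : nb K n1 d x y dF) by (intros c Hc'; specialize (Hy c Hc'); lra).
specialize (HF y Sy H1).
assert (HA : Rabs (allsum K n1 d (fun c => pd f x c * (y c - x c))) <= del * T).
{ eapply Rle_trans; [apply allsum_abs|]. unfold T. rewrite <- allsum_scal. apply allsum_le.
  intros c Hc'. rewrite Rabs_mult. specialize (Hy c Hc').
  pose proof (Rabs_pos (pd f x c)). pose proof (Rabs_pos (y c - x c)).
  assert (Rabs (pd f x c) * Rabs (y c - x c) <= Rabs (pd f x c) * del) by (apply Rmult_le_compat_l; lra).
  lra. }
assert (HB : allsum K n1 d (fun c => Rabs (y c - x c)) <= del * T).
{ unfold T. rewrite <- allsum_scal. apply allsum_le.
  intros c Hc'. specialize (Hy c Hc'). pose proof (Rabs_pos (pd f x c)).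
  assert (del * 1 <= del * (Rabs (pd f x c) + 1)) by (apply Rmult_le_compat_l; lra). lra. }
assert (Hd2 : del * (2 * T + 1) <= eps).
{ assert (del <= eps / (2 * T + 1)) by apply Rmin_r.
  apply (Rmult_le_compat_r (2 * T + 1)) in H; [|lra].
  unfold Rdiv in H. rewrite Rmult_assoc, Rinv_l in H by lra. lra. }
replace (f y - f x) with ((f y - f x - allsum K n1 d (fun c => pd f x c * (y c - x c))) + allsum K n1 d (fun c => pd f x c * (y c - x c))) by ring.
eapply Rle_lt_trans; [apply Rabs_triang|]. nra.
Qed.

Lemma chain K n1 d O f (z : R -> Pt) (z' : Co -> R) t0 :
  Vopen K n1 d O ->
  (forall c, inR K n1 d c = true -> forall y, O y -> has_pd f y c) ->
  (forall c, inR K n1 d c = true -> cont_on K n1 d O (fun y => pd f y c)) ->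
  O (z t0) -> (forall t, supp K n1 d (z t)) ->
  (forall c, inR K n1 d c = true -> derivable_pt_lim (fun t => z t c) t0 (z' c)) ->
  derivable_pt_lim (fun t => f (z t)) t0 (allsum K n1 d (fun c => pd f (z t0) c * z' c)).
Proof.
intros HO Hpd Hc Ox Sz Hz eps Heps.
set (x := z t0) in *.
set (S1 := allsum K n1 d (fun c => Rabs (z' c) + 1)).
set (S2 := allsum K n1 d (fun c => Rabs (pd f x c))).
assert (HS1 : 0 <= S1) by (apply allsum_nonneg; intros; pose proof (Rabs_pos (z' c)); lra).
assert (HS2 : 0 <= S2) by (apply allsum_nonneg; intros; apply Rabs_pos).
set (e1 := eps / (2 * (S1 + 1))).
set (e2 := Rmin 1 (eps / (2 * (S2 + 1)))).
assert (He1 : 0 < e1) by (apply Rdiv_lt_0_compat; lra).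
assert (He2 : 0 < e2) by (apply Rmin_pos; [lra|apply Rdiv_lt_0_compat; lra]).
destruct (frechet K n1 d O f x HO Hpd Hc Ox (Sz t0) e1 He1) as [dF [HdF HF]].
destruct (list_delta (coords K n1 d)
  (fun c del => forall h, h <> 0 -> Rabs h < del -> Rabs ((z (t0 + h) c - z t0 c) / h - z' c) < e2))
  as [dz [Hdz Hdz']].
{ intros c a b Ha Hab H h Hh Hhb. apply H; auto. lra. }
{ intros c Hc'. apply In_coords in Hc'. destruct (Hz c Hc' e2 He2) as [del Hdel].
  exists del. split; [apply cond_pos|]. intros h Hh Hhd. apply Hdel; auto. }
assert (Hd3 : 0 < dF / (S1 + 1)) by (apply Rdiv_lt_0_compat; lra).
exists (mkposreal _ (Rmin_pos _ _ Hdz Hd3)). simpl. intros h Hh Hhd.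
assert (Hh1 : Rabs h < dz) by (pose proof (Rmin_l dz (dF / (S1 + 1))); lra).
assert (Hh2 : Rabs h < dF / (S1 + 1)) by (pose proof (Rmin_r dz (dF / (S1 + 1))); lra).
assert (Hah : 0 < Rabs h) by (apply Rabs_pos_lt; auto).
set (q := fun c => (z (t0 + h) c - z t0 c) / h).
assert (Hq : forall c, inR K n1 d c = true -> Rabs (q c - z' c) < e2).
{ intros c Hc'. apply Hdz'; auto. apply In_coords; auto. }
assert (HD : forall c, z (t0 + h) c - x c = h * q c).
{ intros c. unfold q, x. field. auto. }
assert (Hq1 : forall c, inR K n1 d c = true -> Rabs (q c) <= Rabs (z' c) + 1).
{ intros c Hc'. specialize (Hq c Hc'). assert (e2 <= 1) by apply Rmin_l.
  pose proof (Rabs_triang_inv (q c) (z' c)). lra. }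
assert (Hnb : nb K n1 d x (z (t0 + h)) dF).
{ intros c Hc'. rewrite HD, Rabs_mult.
  assert (Rabs (z' c) + 1 <= S1 + 1).
  { unfold S1. rewrite <- lsum_coords.
    assert (Hin : In c (coords K n1 d)) by (apply In_coords; auto).
    clear -Hin. assert (forall c', In c' (coords K n1 d) -> 0 <= Rabs (z' c') + 1) by (intros; pose proof (Rabs_pos (z' c')); lra).
    revert H Hin. generalize (coords K n1 d). induction l; simpl; [tauto|]; intros H [Hi|Hi].
    - subst. assert (0 <= lsum l (fun c0 => Rabs (z' c0) + 1)) by (apply lsum_nonneg; auto). lra.
    - assert (0 <= Rabs (z' a) + 1) by auto. specialize (IHl (fun c' H' => H c' (or_intror H')) Hi). lra. }
  specialize (Hq1 c Hc'). pose proof (Rabs_pos (q c)).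
  assert (Rabs h * (S1 + 1) < dF).
  { apply (Rmult_lt_compat_r (S1 + 1)) in Hh2; [|lra]. unfold Rdiv in Hh2.
    rewrite Rmult_assoc, Rinv_l in Hh2 by lra. lra. }
  nra. }
specialize (HF (z (t0 + h)) (Sz _) Hnb).
replace ((f (z (t0 + h)) - f x) / h - allsum K n1 d (fun c => pd f x c * z' c))
  with ((f (z (t0 + h)) - f x - allsum K n1 d (fun c => pd f x c * (z (t0 + h) c - x c))) / h
        + allsum K n1 d (fun c => pd f x c * (q c - z' c))).
2:{ unfold x. rewrite <- (allsum_ext K n1 d (fun c => h * (pd f (z t0) c * q c))).
    2:{ intros. rewrite HD. ring. }
    rewrite allsum_scal.
    replace (allsum K n1 d (fun c => pd f (z t0) c * (q c - z' c))) with
      (allsum K n1 d (fun c => pd f (z t0) c * q c) - allsum K n1 d (fun c => pd f (z t0) c * z' c)).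
    - field. auto.
    - rewrite <- (Rplus_0_r (allsum K n1 d (fun c => pd f (z t0) c * q c))).
      replace (allsum K n1 d (fun c => pd f (z t0) c * q c) + 0 - allsum K n1 d (fun c => pd f (z t0) c * z' c))
        with (allsum K n1 d (fun c => pd f (z t0) c * q c) + (-1) * allsum K n1 d (fun c => pd f (z t0) c * z' c)) by ring.
      rewrite <- allsum_scal, <- allsum_plus. apply allsum_ext. intros. ring. }
eapply Rle_lt_trans; [apply Rabs_triang|].
assert (HA : Rabs ((f (z (t0 + h)) - f x - allsum K n1 d (fun c => pd f x c * (z (t0 + h) c - x c))) / h) <= e1 * S1).
{ unfold Rdiv. rewrite Rabs_mult, Rabs_inv.
  apply (Rmult_le_reg_r (Rabs h)); auto. rewrite Rmult_assoc, Rinv_l by lra.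
  eapply Rle_trans; [rewrite Rmult_1_r; apply HF|].
  rewrite Rmult_assoc. apply Rmult_le_compat_l; [lra|].
  unfold S1. rewrite (Rmult_comm _ (Rabs h)), <- allsum_scal. apply allsum_le.
  intros c Hc'. rewrite HD, Rabs_mult. specialize (Hq1 c Hc'). nra. }
assert (HB : Rabs (allsum K n1 d (fun c => pd f x c * (q c - z' c))) <= S2 * e2).
{ eapply Rle_trans; [apply allsum_abs|]. unfold S2. rewrite Rmult_comm, <- allsum_scal.
  apply allsum_le. intros c Hc'. rewrite Rabs_mult. specialize (Hq c Hc').
  pose proof (Rabs_pos (pd f x c)). nra. }
assert (e1 * S1 < eps / 2).
{ unfold e1. unfold Rdiv. rewrite Rinv_mult. 
  assert (0 < / (S1 + 1)) by (apply Rinv_0_lt_compat; lra).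
  assert (S1 * / (S1 + 1) < 1).
  { apply (Rmult_lt_reg_r (S1 + 1)); [lra|]. rewrite Rmult_assoc, Rinv_l by lra. lra. }
  assert (/ 2 * (S1 * / (S1 + 1)) < / 2) by lra. nra. }
assert (S2 * e2 < eps / 2).
{ assert (e2 <= eps / (2 * (S2 + 1))) by apply Rmin_r.
  assert (S2 * (eps / (2 * (S2 + 1))) < eps / 2).
  { unfold Rdiv. rewrite Rinv_mult.
    assert (S2 * / (S2 + 1) < 1).
    { apply (Rmult_lt_reg_r (S2 + 1)); [lra|]. rewrite Rmult_assoc, Rinv_l by lra. lra. }
    assert (0 < / (S2 + 1)) by (apply Rinv_0_lt_compat; lra). nra. }
  nra. }
lra.
Qed.

Lemma powp_pos_eq x q : 0 < x -> powp x q = Rpower x q.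
Proof. intros. unfold powp. destruct (Rle_lt_dec x 0); [lra|auto]. Qed.

Lemma powp_nonpos x q : x <= 0 -> powp x q = 0.
Proof. intros. unfold powp. destruct (Rle_lt_dec x 0); [auto|lra]. Qed.

Lemma Rpower_pos x q : 0 < Rpower x q.
Proof. unfold Rpower. apply exp_pos. Qed.

Lemma powp_nonneg x q : 0 <= powp x q.
Proof. unfold powp. destruct (Rle_lt_dec x 0); [lra|left; apply Rpower_pos]. Qed.

Lemma powp_pos x q : 0 < x -> 0 < powp x q.
Proof. intros. rewrite powp_pos_eq; auto. apply Rpower_pos. Qed.

Lemma exp_convex th a b : 0 <= th <= 1 ->
  exp (th * a + (1 - th) * b) <= th * exp a + (1 - th) * exp b.
Proof.
intros Hth. set (m := th * a + (1 - th) * b).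
assert (Ha : exp a = exp m * exp (a - m)) by (rewrite <- exp_plus; f_equal; ring).
assert (Hb : exp b = exp m * exp (b - m)) by (rewrite <- exp_plus; f_equal; ring).
pose proof (exp_ineq1_le (a - m)). pose proof (exp_ineq1_le (b - m)). pose proof (exp_pos m).
rewrite Ha, Hb.
assert (th * exp (a - m) + (1 - th) * exp (b - m) >= 1).
{ assert (th * (1 + (a - m)) + (1 - th) * (1 + (b - m)) = 1) by (unfold m; ring). nra. }
nra.
Qed.

Lemma exp_convex_strict th a b : 0 < th < 1 -> a <> b ->
  exp (th * a + (1 - th) * b) < th * exp a + (1 - th) * exp b.
Proof.
intros Hth Hab. set (m := th * a + (1 - th) * b).
assert (Ha : exp a = exp m * exp (a - m)) by (rewrite <- exp_plus; f_equal; ring).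
assert (Hb : exp b = exp m * exp (b - m)) by (rewrite <- exp_plus; f_equal; ring).
assert (a - m <> 0) by (unfold m; intro; apply Hab; nra).
pose proof (exp_ineq1 (a - m) H). pose proof (exp_ineq1_le (b - m)). pose proof (exp_pos m).
rewrite Ha, Hb.
assert (th * exp (a - m) + (1 - th) * exp (b - m) > 1).
{ assert (th * (1 + (a - m)) + (1 - th) * (1 + (b - m)) = 1) by (unfold m; ring). nra. }
nra.
Qed.

Lemma conj_facts p : 1 < p ->
  1 < conjexp p /\ / p + / conjexp p = 1 /\ (conjexp p - 1) * p = conjexp p /\
  conjexp p - 1 = / (p - 1) /\ conjexp p / p = conjexp p - 1.
Proof.
intros Hp. unfold conjexp. repeat split.
- apply (Rmult_lt_reg_r (p - 1)); [lra|]. unfold Rdiv. rewrite Rmult_assoc, Rinv_l by lra. lra.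
- field. lra.
- field. lra.
- field. lra.
- field. lra.
Qed.

Lemma young a b p : 0 <= a -> 0 <= b -> 1 < p ->
  a * b <= powp a p / p + powp b (conjexp p) / conjexp p.
Proof.
intros Ha Hb Hp. destruct (conj_facts p Hp) as [Hq [Hs _]].
set (q := conjexp p) in *.
pose proof (powp_nonneg a p). pose proof (powp_nonneg b q).
assert (0 < / p) by (apply Rinv_0_lt_compat; lra).
assert (0 < / q) by (apply Rinv_0_lt_compat; lra).
destruct Ha as [Ha|Ha]; [|subst; unfold Rdiv; nra].
destruct Hb as [Hb|Hb]; [|subst; unfold Rdiv; nra].
rewrite !powp_pos_eq by auto. unfold Rpower.
replace (a * b) with (exp (/ p * (p * ln a) + (1 - / p) * (q * ln b))).
- replace (1 - / p) with (/ q) by lra. unfold Rdiv. rewrite (Rmult_comm (exp _) (/ p)), (Rmult_comm (exp (q * _)) (/ q)).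
  pose proof (exp_convex (/ p) (p * ln a) (q * ln b)). replace (1 - / p) with (/ q) in H3 by lra.
  apply H3. split; [lra|]. lra.
- replace (/ p * (p * ln a) + (1 - / p) * (q * ln b)) with (ln a + ln b).
  + rewrite exp_plus, !exp_ln; auto.
  + replace (1 - / p) with (/ q) by lra. field. split; lra.
Qed.

Lemma young_strict a b p : 0 <= a -> 0 < b -> 1 < p -> powp a p <> powp b (conjexp p) ->
  a * b < powp a p / p + powp b (conjexp p) / conjexp p.
Proof.
intros Ha Hb Hp Hne. destruct (conj_facts p Hp) as [Hq [Hs _]].
set (q := conjexp p) in *.
pose proof (powp_nonneg a p). pose proof (powp_pos b q Hb).
assert (0 < / p) by (apply Rinv_0_lt_compat; lra).
assert (0 < / q) by (apply Rinv_0_lt_compat; lra).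
destruct Ha as [Ha|Ha]; [|subst; unfold Rdiv; nra].
rewrite !powp_pos_eq in * by auto. unfold Rpower in *.
replace (a * b) with (exp (/ p * (p * ln a) + (1 - / p) * (q * ln b))).
- unfold Rdiv. rewrite (Rmult_comm (exp _) (/ p)), (Rmult_comm (exp (q * _)) (/ q)).
  pose proof (exp_convex_strict (/ p) (p * ln a) (q * ln b)). replace (1 - / p) with (/ q) in * by lra.
  apply H3; [split; [lra|]; lra|]. intro E; apply Hne; rewrite E; auto.
- replace (/ p * (p * ln a) + (1 - / p) * (q * ln b)) with (ln a + ln b).
  + rewrite exp_plus, !exp_ln; auto.
  + replace (1 - / p) with (/ q) by lra. field. split; lra.
Qed.

Lemma powp_convex a b t p : 0 <= a -> 0 <= b -> 0 <= t <= 1 -> 1 < p ->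
  powp ((1 - t) * a + t * b) p <= (1 - t) * powp a p + t * powp b p.
Proof.
intros Ha Hb Ht Hp.
set (c := (1 - t) * a + t * b).
assert (Hc : 0 <= c) by (unfold c; nra).
destruct Hc as [Hc|Hc].
2:{ rewrite <- Hc, powp_nonpos by lra. pose proof (powp_nonneg a p). pose proof (powp_nonneg b p). nra. }
destruct (conj_facts p Hp) as [Hq [Hs [Hqp _]]].
(* a * c^(p-1) <= a^p/p + c^p/q *)
assert (Htan : forall a0, 0 <= a0 -> powp a0 p >= powp c p + p * powp c (p - 1) * (a0 - c)).
{ intros a0 Ha0. pose proof (young a0 (powp c (p - 1)) p Ha0 (powp_nonneg _ _) Hp) as Y.
  assert (E : powp (powp c (p - 1)) (conjexp p) = powp c p).
  { rewrite (powp_pos_eq c (p - 1)) by auto. rewrite powp_pos_eq by apply Rpower_pos.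
    rewrite (powp_pos_eq c p) by auto. rewrite Rpower_mult. f_equal.
    unfold conjexp. field. lra. }
  rewrite E in Y.
  assert (Ec : powp c p = c * powp c (p - 1)).
  { rewrite !powp_pos_eq by auto. replace p with (1 + (p - 1)) at 1 by ring.
    rewrite Rpower_plus, Rpower_1; auto. }
  assert (/ conjexp p = 1 - / p) by lra.
  unfold Rdiv in Y. rewrite H in Y.
  apply (Rmult_le_compat_l p) in Y; [|lra].
  replace (p * (powp a0 p * / p + powp c p * (1 - / p))) with (powp a0 p + (p - 1) * powp c p) in Y by (field; lra).
  rewrite Ec in *. nra. }
pose proof (Htan a Ha) as T1. pose proof (Htan b Hb) as T2.
assert (Z : (1 - t) * (a - c) + t * (b - c) = 0) by (unfold c; ring).
assert (0 <= 1 - t) by lra.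
assert (W : (1 - t) * powp a p + t * powp b p >= powp c p + p * powp c (p - 1) * ((1 - t) * (a - c) + t * (b - c))).
{ nra. }
rewrite Z in W. lra.
Qed.

Definition Sp (p : R) (x : Pt) (L : list Co) : R := lsum L (fun c => powp (Rabs (x c)) p).
Definition bnorm (p : R) (x : Pt) (L : list Co) : R := powp (Sp p x L) (1 / p).
Definition rowL (n1 i : nat) : list Co := map (CW i) (seq 0 n1).
Definition uL (n1 d : nat) : list Co := flat_map (fun a => map (CU a) (seq 0 d)) (seq 0 n1).

Lemma rownorm_bnorm n1 p x i : rownorm n1 p x i = bnorm p x (rowL n1 i).
Proof. unfold rownorm, bnorm, Sp, rowL. rewrite lsum_map_seq. reflexivity. Qed.

Lemma unorm_bnorm n1 d p x : unorm n1 d p x = bnorm p x (uL n1 d).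
Proof.
unfold unorm, bnorm, Sp, uL. rewrite lsum_flat_map_seq. f_equal.
apply rsum_ext. intros. rewrite lsum_map_seq. reflexivity.
Qed.

Lemma Sp_nonneg p x L : 0 <= Sp p x L.
Proof. apply lsum_nonneg. intros. apply powp_nonneg. Qed.

Lemma bnorm_nonneg p x L : 0 <= bnorm p x L.
Proof. apply powp_nonneg. Qed.

Lemma Rpower_inv_le S rho p : 0 < S -> 0 < rho -> 1 < p ->
  (Rpower S (1 / p) <= rho <-> S <= Rpower rho p).
Proof.
intros HS Hr Hp. unfold Rpower.
rewrite <- (exp_ln rho) at 1 by auto. rewrite <- (exp_ln S) at 2 by auto.
split; intro H.
- destruct H as [H|H].
  + apply exp_lt_inv in H. left. apply exp_increasing.
    apply (Rmult_lt_compat_l p) in H; [|lra]. unfold Rdiv in H.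
    replace (p * (1 * / p * ln S)) with (ln S) in H by (field; lra). lra.
  + apply exp_inv in H. right. f_equal. rewrite <- H. field. lra.
- destruct H as [H|H].
  + apply exp_lt_inv in H. left. apply exp_increasing.
    apply (Rmult_lt_compat_l (/ p)) in H; [|apply Rinv_0_lt_compat; lra].
    replace (/ p * (p * ln rho)) with (ln rho) in H by (field; lra). lra.
  + apply exp_inv in H. right. f_equal. rewrite H. field. lra.
Qed.

Lemma Rpower_inv_eq S rho p : 0 < S -> 0 < rho -> 1 < p ->
  (Rpower S (1 / p) = rho <-> S = Rpower rho p).
Proof.
intros HS Hr Hp. split; intro H.
- subst rho. rewrite Rpower_mult. replace (1 / p * p) with 1 by (field; lra). rewrite Rpower_1; auto.
- subst S. unfold Rpower. rewrite ln_exp. unfold Rdiv.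
  replace (1 * / p * (p * ln rho)) with (ln rho) by (field; lra). apply exp_ln; auto.
Qed.

Lemma bnorm_le p x L rho : 1 < p -> 0 < rho -> (bnorm p x L <= rho <-> Sp p x L <= Rpower rho p).
Proof.
intros Hp Hr. unfold bnorm. destruct (Sp_nonneg p x L) as [H|H].
- rewrite powp_pos_eq by auto. apply Rpower_inv_le; auto.
- rewrite <- H, powp_nonpos by lra. pose proof (Rpower_pos rho p). split; intros; lra.
Qed.

Lemma bnorm_eq p x L rho : 1 < p -> 0 < rho -> (bnorm p x L = rho <-> Sp p x L = Rpower rho p).
Proof.
intros Hp Hr. unfold bnorm. destruct (Sp_nonneg p x L) as [H|H].
- rewrite powp_pos_eq by auto. apply Rpower_inv_eq; auto.
- rewrite <- H, powp_nonpos by lra. pose proof (Rpower_pos rho p). split; intros; lra.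
Qed.

Lemma powp_scale a s p : 0 < a -> 0 <= s -> powp (a * s) p = Rpower a p * powp s p.
Proof.
intros Ha [Hs|Hs].
- rewrite !powp_pos_eq by (auto; nra). rewrite Rpower_mult_distr; auto.
- subst. rewrite Rmult_0_r, powp_nonpos by lra. ring.
Qed.

Lemma Sp_scale p x L a : 0 < a -> Sp p (fun c => a * x c) L = Rpower a p * Sp p x L.
Proof.
intros Ha. unfold Sp. rewrite <- lsum_scal. apply lsum_ext. intros.
rewrite Rabs_mult, (Rabs_right a) by lra. apply powp_scale; auto. apply Rabs_pos.
Qed.

Lemma bnorm_scale p x L a : 1 < p -> 0 < a -> bnorm p (fun c => a * x c) L = a * bnorm p x L.
Proof.
intros Hp Ha. unfold bnorm. rewrite Sp_scale by auto.
rewrite powp_scale; [|apply Rpower_pos|apply Sp_nonneg].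
f_equal. rewrite Rpower_mult. replace (p * (1 / p)) with 1 by (field; lra). apply Rpower_1; auto.
Qed.

Lemma lsum_ge_term L f c : (forall c', In c' L -> 0 <= f c') -> In c L -> f c <= lsum L f.
Proof.
induction L; simpl; [tauto|]. intros H [Hc|Hc].
- subst. assert (0 <= lsum L f) by (apply lsum_nonneg; auto). lra.
- assert (f c <= lsum L f) by auto. assert (0 <= f a) by auto. lra.
Qed.

Lemma entry_le_bnorm p x L c : 1 < p -> In c L -> Rabs (x c) <= bnorm p x L.
Proof.
intros Hp Hc.
destruct (Rabs_pos (x c)) as [H|H]; [|rewrite <- H; apply bnorm_nonneg].
assert (Hle : powp (Rabs (x c)) p <= Sp p x L).
{ apply (lsum_ge_term L (fun c => powp (Rabs (x c)) p)); auto. intros; apply powp_nonneg. }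
assert (0 < powp (Rabs (x c)) p) by (apply powp_pos; auto).
unfold bnorm. rewrite powp_pos_eq by lra.
rewrite powp_pos_eq in * by auto.
replace (Rabs (x c)) with (Rpower (Rpower (Rabs (x c)) p) (1 / p)).
- apply Rle_Rpower_l; [apply Rlt_le; apply Rdiv_lt_0_compat; lra|]. split; auto.
- rewrite Rpower_mult. replace (p * (1 / p)) with 1 by (field; lra). apply Rpower_1; auto.
Qed.

Lemma cont_pt_eps h a : continuity_pt h a ->
  forall eps, 0 < eps -> exists del, 0 < del /\ forall y, Rabs (y - a) < del -> Rabs (h y - h a) < eps.
Proof.
intros H eps Heps. destruct (H eps Heps) as [del [Hdel H']].
exists del. split; auto. intros y Hy.
destruct (Req_dec y a).
- subst. replace (h a - h a) with 0 by ring. rewrite Rabs_R0. auto.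
- apply (H' y). split; [split; [exact I|auto]|]. simpl. unfold R_dist. auto.
Qed.


Lemma cont_on_ext K n1 d O f g : (forall x, O x -> f x = g x) -> cont_on K n1 d O f -> cont_on K n1 d O g.
Proof.
intros E H x Ox eps Heps. destruct (H x Ox eps Heps) as [del [Hd H']].
exists del. split; auto. intros y Oy Hy. rewrite <- !E; auto.
Qed.

Lemma cont_on_const K n1 d O a : cont_on K n1 d O (fun _ => a).
Proof.
intros x Ox eps Heps. exists 1. split; [lra|]. intros. replace (a - a) with 0 by ring. rewrite Rabs_R0; auto.
Qed.

Lemma cont_on_comp K n1 d O f h : cont_on K n1 d O f -> (forall x, O x -> continuity_pt h (f x)) ->
  cont_on K n1 d O (fun x => h (f x)).
Proof.
intros Hf Hh x Ox eps Heps.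
destruct (cont_pt_eps h (f x) (Hh x Ox) eps Heps) as [d1 [Hd1 H1]].
destruct (Hf x Ox d1 Hd1) as [d2 [Hd2 H2]].
exists d2. split; [auto|]. intros y Oy Hy. apply H1. apply H2; auto.
Qed.

Lemma cont_on_plus K n1 d O f g : cont_on K n1 d O f -> cont_on K n1 d O g -> cont_on K n1 d O (fun x => f x + g x).
Proof.
intros Hf Hg x Ox eps Heps.
destruct (Hf x Ox (eps/2)) as [d1 [Hd1 H1]]; [lra|].
destruct (Hg x Ox (eps/2)) as [d2 [Hd2 H2]]; [lra|].
exists (Rmin d1 d2). split; [apply Rmin_pos; auto|]. intros y Oy Hy.
assert (nb1 : forall c, inR K n1 d c = true -> Rabs (y c - x c) < d1) by (intros c Hc; specialize (Hy c Hc); pose proof (Rmin_l d1 d2); lra).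
assert (nb2 : forall c, inR K n1 d c = true -> Rabs (y c - x c) < d2) by (intros c Hc; specialize (Hy c Hc); pose proof (Rmin_r d1 d2); lra).
specialize (H1 y Oy nb1). specialize (H2 y Oy nb2).
replace (f y + g y - (f x + g x)) with ((f y - f x) + (g y - g x)) by ring.
eapply Rle_lt_trans; [apply Rabs_triang|]. lra.
Qed.

Lemma cont_on_mult K n1 d O f g : cont_on K n1 d O f -> cont_on K n1 d O g -> cont_on K n1 d O (fun x => f x * g x).
Proof.
intros Hf Hg x Ox eps Heps.
set (M := Rabs (f x) + Rabs (g x) + 1).
assert (HM : 1 <= M) by (unfold M; pose proof (Rabs_pos (f x)); pose proof (Rabs_pos (g x)); lra).
set (e := Rmin 1 (eps / (2 * M))).
assert (He : 0 < e) by (apply Rmin_pos; [lra|apply Rdiv_lt_0_compat; lra]).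
assert (He1 : e <= 1) by apply Rmin_l.
assert (He2 : e * (2 * M) <= eps).
{ assert (e <= eps / (2 * M)) by apply Rmin_r.
  apply (Rmult_le_compat_r (2 * M)) in H; [|lra]. unfold Rdiv in H.
  rewrite Rmult_assoc, Rinv_l in H by lra. lra. }
destruct (Hf x Ox e He) as [d1 [Hd1 H1]].
destruct (Hg x Ox e He) as [d2 [Hd2 H2]].
exists (Rmin d1 d2). split; [apply Rmin_pos; auto|]. intros y Oy Hy.
assert (nb1 : forall c, inR K n1 d c = true -> Rabs (y c - x c) < d1) by (intros c Hc; specialize (Hy c Hc); pose proof (Rmin_l d1 d2); lra).
assert (nb2 : forall c, inR K n1 d c = true -> Rabs (y c - x c) < d2) by (intros c Hc; specialize (Hy c Hc); pose proof (Rmin_r d1 d2); lra).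
specialize (H1 y Oy nb1). specialize (H2 y Oy nb2).
replace (f y * g y - f x * g x) with ((f y - f x) * (g y - g x) + (f y - f x) * g x + f x * (g y - g x)) by ring.
eapply Rle_lt_trans; [apply Rabs_triang|].
eapply Rle_lt_trans; [apply Rplus_le_compat_r; apply Rabs_triang|].
rewrite !Rabs_mult.
pose proof (Rabs_pos (f y - f x)). pose proof (Rabs_pos (g y - g x)).
pose proof (Rabs_pos (f x)). pose proof (Rabs_pos (g x)).
assert (Rabs (f y - f x) * Rabs (g y - g x) <= e * e) by (apply Rmult_le_compat; lra).
assert (Rabs (f y - f x) * Rabs (g x) <= e * Rabs (g x)) by (apply Rmult_le_compat_r; lra).
assert (Rabs (f x) * Rabs (g y - g x) <= Rabs (f x) * e) by (apply Rmult_le_compat_l; lra).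
assert (e * e <= e * 1) by (apply Rmult_le_compat_l; lra).
assert (e * (Rabs (f x) + Rabs (g x) + 1) < e * (2 * M)) by (apply Rmult_lt_compat_l; unfold M in *; lra).
unfold M in *. lra.
Qed.

Lemma line0 (f : Pt -> R) x c : f (padd x (pscale 0 (ebas c))) = f x.
Proof. rewrite line_upd. replace (x c + 0) with (x c) by ring. rewrite upd_same. auto. Qed.

Lemma pd_const a x c : has_pd (fun _ => a) x c /\ pd (fun _ => a) x c = 0.
Proof.
assert (H : derivable_pt_lim (fun t => (fun _ : Pt => a) (padd x (pscale t (ebas c)))) 0 0)
  by apply derivable_pt_lim_const.
split; [exists 0; auto|apply pd_unique; auto].
Qed.

Lemma pd_plus f g x c : has_pd f x c -> has_pd g x c ->
  has_pd (fun y => f y + g y) x c /\ pd (fun y => f y + g y) x c = pd f x c + pd g x c.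
Proof.
intros Hf Hg. apply pd_spec in Hf, Hg.
assert (H : derivable_pt_lim (fun t => (fun y => f y + g y) (padd x (pscale t (ebas c)))) 0 (pd f x c + pd g x c))
  by (apply (derivable_pt_lim_plus (fun t => f (padd x (pscale t (ebas c)))) (fun t => g (padd x (pscale t (ebas c))))); auto).
split; [eexists; eauto|apply pd_unique; auto].
Qed.

Lemma pd_mult f g x c : has_pd f x c -> has_pd g x c ->
  has_pd (fun y => f y * g y) x c /\ pd (fun y => f y * g y) x c = pd f x c * g x + f x * pd g x c.
Proof.
intros Hf Hg. apply pd_spec in Hf, Hg.
pose proof (derivable_pt_lim_mult (fun t => f (padd x (pscale t (ebas c)))) (fun t => g (padd x (pscale t (ebas c)))) 0 _ _ Hf Hg) as H.
simpl in H. rewrite (line0 f), (line0 g) in H.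
split; [eexists; exact H|apply pd_unique; exact H].
Qed.

Lemma pd_comp (h h' : R -> R) f x c : has_pd f x c -> derivable_pt_lim h (f x) (h' (f x)) ->
  has_pd (fun y => h (f y)) x c /\ pd (fun y => h (f y)) x c = h' (f x) * pd f x c.
Proof.
intros Hf Hh. apply pd_spec in Hf.
assert (Hh' : derivable_pt_lim h ((fun t => f (padd x (pscale t (ebas c)))) 0) (h' (f x))) by (simpl; rewrite line0; auto).
pose proof (derivable_pt_lim_comp _ h 0 _ _ Hf Hh') as H.
split; [eexists; exact H|apply pd_unique; exact H].
Qed.

Lemma C1_const K n1 d O a : C1on K n1 d O (fun _ => a).
Proof.
split; [apply cont_on_const|]. intros c Hc. split.
- intros. apply pd_const.
- apply (cont_on_ext _ _ _ _ (fun _ => 0)); [intros; symmetry; apply pd_const|apply cont_on_const].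
Qed.

Lemma C1_plus K n1 d O f g : C1on K n1 d O f -> C1on K n1 d O g -> C1on K n1 d O (fun x => f x + g x).
Proof.
intros [Cf Hf] [Cg Hg]. split; [apply cont_on_plus; auto|]. intros c Hc.
destruct (Hf c Hc) as [Pf Qf]. destruct (Hg c Hc) as [Pg Qg]. split.
- intros. apply pd_plus; auto.
- apply (cont_on_ext _ _ _ _ (fun x => pd f x c + pd g x c)).
  + intros. symmetry. apply pd_plus; auto.
  + apply cont_on_plus; auto.
Qed.

Lemma C1_mult K n1 d O f g : C1on K n1 d O f -> C1on K n1 d O g -> C1on K n1 d O (fun x => f x * g x).
Proof.
intros [Cf Hf] [Cg Hg]. split; [apply cont_on_mult; auto|]. intros c Hc.
destruct (Hf c Hc) as [Pf Qf]. destruct (Hg c Hc) as [Pg Qg]. split.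
- intros. apply pd_mult; auto.
- apply (cont_on_ext _ _ _ _ (fun x => pd f x c * g x + f x * pd g x c)).
  + intros. symmetry. apply pd_mult; auto.
  + apply cont_on_plus; apply cont_on_mult; auto.
Qed.

Lemma C1_comp K n1 d O f (h h' : R -> R) :
  C1on K n1 d O f ->
  (forall x, O x -> derivable_pt_lim h (f x) (h' (f x))) ->
  (forall x, O x -> continuity_pt h (f x)) ->
  (forall x, O x -> continuity_pt h' (f x)) ->
  C1on K n1 d O (fun x => h (f x)).
Proof.
intros [Cf Hf] Hd Hc1 Hc2. split; [apply cont_on_comp; auto|]. intros c Hc.
destruct (Hf c Hc) as [Pf Qf]. split.
- intros. apply (proj1 (pd_comp h h' f x c (Pf x H) (Hd x H))).
- apply (cont_on_ext _ _ _ _ (fun x => h' (f x) * pd f x c)).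
  + intros. symmetry. apply pd_comp; auto.
  + apply cont_on_mult; auto. apply cont_on_comp; auto.
Qed.

Lemma C1_exp K n1 d O f : C1on K n1 d O f -> C1on K n1 d O (fun x => exp (f x)).
Proof.
intros H. apply (C1_comp _ _ _ _ _ exp exp); auto.
- intros. apply derivable_pt_lim_exp.
- intros. apply derivable_continuous_pt. apply derivable_pt_exp.
- intros. apply derivable_continuous_pt. apply derivable_pt_exp.
Qed.

Lemma C1_ln K n1 d O f : C1on K n1 d O f -> (forall x, O x -> 0 < f x) -> C1on K n1 d O (fun x => ln (f x)).
Proof.
intros H Hp. apply (C1_comp _ _ _ _ _ ln Rinv); auto.
- intros. apply derivable_pt_lim_ln. auto.
- intros. apply derivable_continuous_pt. exists (/ f x). apply derivable_pt_lim_ln. auto.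
- intros. apply continuity_pt_inv; [apply derivable_continuous_pt, derivable_pt_id|]. specialize (Hp x H0). unfold id; lra.
Qed.

Lemma C1_ext K n1 d O f g : Vopen K n1 d O -> (forall x, O x -> supp K n1 d x) ->
  (forall x, O x -> f x = g x) -> C1on K n1 d O f -> C1on K n1 d O g.
Proof.
intros HO HS E [Cf Hf]. split; [apply (cont_on_ext _ _ _ _ f); auto|].
assert (Hloc : forall c, inR K n1 d c = true -> forall x, O x -> has_pd g x c /\ pd g x c = pd f x c).
{ intros c Hc x Ox. destruct (Hf c Hc) as [Pf _]. specialize (Pf x Ox).
  apply pd_spec in Pf.
  destruct (HO x Ox (HS x Ox)) as [del [Hdel Hd]].
  assert (Hg : derivable_pt_lim (fun t => g (padd x (pscale t (ebas c)))) 0 (pd f x c)).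
  { intros eps Heps. destruct (Pf eps Heps) as [d1 Hd1].
    assert (0 < Rmin d1 del) by (apply Rmin_pos; [apply cond_pos|auto]).
    exists (mkposreal _ H). simpl. intros h Hh Hhd.
    assert (Hnear : forall t, Rabs t < del -> f (padd x (pscale t (ebas c))) = g (padd x (pscale t (ebas c)))).
    { intros t Ht. apply E. rewrite line_upd. apply Hd.
      - apply supp_upd; auto.
      - intros c' Hc'. destruct (Co_dec c c').
        + subst. rewrite upd_eq. replace (x c' + t - x c') with t by ring. auto.
        + rewrite upd_neq by auto. replace (x c' - x c') with 0 by ring. rewrite Rabs_R0; auto. }
    assert (Hm1 : Rmin d1 del <= d1) by apply Rmin_l.
    assert (Hm2 : Rmin d1 del <= del) by apply Rmin_r.
    rewrite <- (Hnear (0 + h)) by (replace (0 + h) with h by ring; lra).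
    rewrite <- (Hnear 0) by (rewrite Rabs_R0; auto).
    apply Hd1; auto. lra. }
  split; [eexists; eauto|apply pd_unique; auto]. }
intros c Hc. split.
- intros. apply Hloc; auto.
- apply (cont_on_ext _ _ _ _ (fun x => pd f x c)); [intros; symmetry; apply Hloc; auto|apply Hf; auto].
Qed.

Lemma C1_rsum K n1 d O m (F : nat -> Pt -> R) : (forall i, (i < m)%nat -> C1on K n1 d O (F i)) ->
  C1on K n1 d O (fun x => rsum m (fun i => F i x)).
Proof.
induction m; intros H; simpl.
- apply C1_const.
- apply C1_plus; [apply IHm; intros; apply H; lia|apply H; lia].
Qed.

Definition pb (K : nat) (pw pu : R) (b : nat) : R := if Nat.ltb b K then pw else pu.
Definition blkL (K n1 d : nat) (b : nat) : list Co := if Nat.ltb b K then rowL n1 b else uL n1 d.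

Lemma In_rowL n1 i c : In c (rowL n1 i) <-> exists j, c = CW i j /\ (j < n1)%nat.
Proof.
unfold rowL. rewrite in_map_iff. split.
- intros [j [Hj Hin]]. exists j. apply in_seq in Hin. split; auto; lia.
- intros [j [Hj Hlt]]. exists j. split; auto. apply in_seq. lia.
Qed.

Lemma In_uL n1 d c : In c (uL n1 d) <-> exists a b, c = CU a b /\ (a < n1)%nat /\ (b < d)%nat.
Proof.
unfold uL. rewrite in_flat_map. split.
- intros [a [Ha Hin]]. apply in_map_iff in Hin. destruct Hin as [b [Hb Hin]].
  apply in_seq in Ha, Hin. exists a, b. repeat split; auto; lia.
- intros [a [b [Hc [Ha Hb]]]]. exists a. split; [apply in_seq; lia|]. apply in_map_iff. exists b. split; auto. apply in_seq. lia.
Qed.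

Lemma In_blkL K n1 d b c : (b <= K)%nat -> In c (blkL K n1 d b) <-> (inR K n1 d c = true /\ blk K c = b).
Proof.
intros Hb. unfold blkL. destruct (Nat.ltb b K) eqn:E.
- apply Nat.ltb_lt in E. rewrite In_rowL. split.
  + intros [j [Hc Hj]]. subst. simpl. rewrite andb_true_iff, !Nat.ltb_lt. auto.
  + intros [Hc Hbk]. destruct c; simpl in *; [|lia]. rewrite andb_true_iff, !Nat.ltb_lt in Hc. subst.
    exists j. split; auto; lia.
- apply Nat.ltb_ge in E. assert (b = K) by lia. subst. rewrite In_uL. split.
  + intros [a [b0 [Hc [Ha Hb0]]]]. subst. simpl. rewrite andb_true_iff, !Nat.ltb_lt. auto.
  + intros [Hc Hbk]. destruct c; simpl in *.
    * rewrite andb_true_iff, !Nat.ltb_lt in Hc. lia.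
    * rewrite andb_true_iff, !Nat.ltb_lt in Hc. exists a, b. repeat split; lia.
Qed.

Lemma blk_le K n1 d c : inR K n1 d c = true -> (blk K c <= K)%nat.
Proof. destruct c; simpl; rewrite andb_true_iff, !Nat.ltb_lt; lia. Qed.

Lemma In_blkL_self K n1 d c : inR K n1 d c = true -> In c (blkL K n1 d (blk K c)).
Proof. intros H. apply In_blkL; auto. apply blk_le with n1 d; auto. Qed.

Lemma blkL_nonempty K n1 d b : (1 <= n1)%nat -> (1 <= d)%nat -> (b <= K)%nat ->
  exists c, In c (blkL K n1 d b).
Proof.
intros. unfold blkL. destruct (Nat.ltb b K) eqn:E.
- exists (CW b 0). apply In_rowL. exists 0%nat. split; auto; lia.
- exists (CU 0 0). apply In_uL. exists 0%nat, 0%nat. repeat split; lia.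
Qed.

Lemma Gmap_blk K n1 d pw pu rw ru Phi x c : inR K n1 d c = true ->
  Gmap K n1 d pw pu rw ru Phi x c =
  (if Nat.ltb (blk K c) K then rw else ru) *
  psi (conjexp (pb K pw pu (blk K c))) (grad K n1 d Phi x c) /
  bnorm (pb K pw pu (blk K c)) (fun c' => psi (conjexp (pb K pw pu (blk K c))) (grad K n1 d Phi x c')) (blkL K n1 d (blk K c)).
Proof.
intros Hc. unfold Gmap. rewrite Hc. unfold pb, blkL.
destruct c; simpl in *; rewrite andb_true_iff, !Nat.ltb_lt in Hc.
- assert (E : Nat.ltb i K = true) by (apply Nat.ltb_lt; lia). rewrite E. rewrite rownorm_bnorm. auto.
- rewrite Nat.ltb_irrefl. rewrite unorm_bnorm. auto.
Qed.

Lemma psi_pos q g : 0 < g -> psi q g = Rpower g (q - 1).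
Proof. intros. unfold psi. destruct (Rlt_dec g 0); [lra|]. apply powp_pos_eq; auto. Qed.

Definition Ogp (K n1 d : nat) (U : Pt -> Prop) (Phi : Pt -> R) (x : Pt) : Prop :=
  U x /\ supp K n1 d x /\ forall c, inR K n1 d c = true -> 0 < pd Phi x c.

Lemma cont_on_sub K n1 d (U O : Pt -> Prop) f : (forall x, O x -> U x) -> cont_on K n1 d U f -> cont_on K n1 d O f.
Proof.
intros HOU H x Ox eps Heps. destruct (H x (HOU x Ox) eps Heps) as [del [Hd H']].
exists del. split; auto.
Qed.

Lemma Ogp_open K n1 d U Phi : Vopen K n1 d U ->
  (forall c, inR K n1 d c = true -> cont_on K n1 d U (fun x => pd Phi x c)) ->
  Vopen K n1 d (Ogp K n1 d U Phi).
Proof.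
intros HU Hc x [Ux [Sx Px]] _.
destruct (HU x Ux Sx) as [d0 [Hd0 H0]].
destruct (list_delta (coords K n1 d)
  (fun c del => forall y, U y -> nb K n1 d x y del -> Rabs (pd Phi y c - pd Phi x c) < pd Phi x c))
  as [d1 [Hd1 H1]].
{ intros c a b Ha Hab H y Uy Hy. apply H; auto. intros c' Hc'. specialize (Hy c' Hc'). lra. }
{ intros c Hin. apply In_coords in Hin. destruct (Hc c Hin x Ux (pd Phi x c) (Px c Hin)) as [del [Hdel H']].
  exists del. split; auto. }
exists (Rmin d0 d1). split; [apply Rmin_pos; auto|].
intros y Sy Hy.
assert (nb0 : nb K n1 d x y d0) by (intros c Hc'; specialize (Hy c Hc'); pose proof (Rmin_l d0 d1); lra).
assert (nb1 : nb K n1 d x y d1) by (intros c Hc'; specialize (Hy c Hc'); pose proof (Rmin_r d0 d1); lra).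
assert (Uy : U y) by (apply H0; auto).
split; [auto|split; [auto|]].
intros c Hc'. assert (In c (coords K n1 d)) by (apply In_coords; auto).
specialize (H1 c H y Uy nb1). apply Rabs_def2 in H1. lra.
Qed.

Lemma C1_lsum K n1 d O (L : list Co) (F : Co -> Pt -> R) : (forall c, In c L -> C1on K n1 d O (F c)) ->
  C1on K n1 d O (fun x => lsum L (fun c => F c x)).
Proof.
induction L; intros H; simpl.
- apply C1_const.
- apply C1_plus; [apply H; left; auto|apply IHL; intros; apply H; right; auto].
Qed.

Definition C2hyp (K n1 d : nat) (U : Pt -> Prop) (Phi : Pt -> R) : Prop :=
  Vopen K n1 d U /\ C2_on K n1 d U Phi.

Lemma C1_pdPhi K n1 d U Phi c : C2hyp K n1 d U Phi -> inR K n1 d c = true ->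
  C1on K n1 d (Ogp K n1 d U Phi) (fun x => pd Phi x c).
Proof.
intros [HU HC] Hc. destruct (HC c Hc) as [_ [Hcont Hsec]].
split.
- apply (cont_on_sub _ _ _ U); [intros x [Ux _]; auto|auto].
- intros c' Hc'. destruct (Hsec c' Hc') as [P Q]. split.
  + intros x [Ux _]. auto.
  + apply (cont_on_sub _ _ _ U); [intros x [Ux _]; auto|auto].
Qed.

Lemma Gmap_C1 K n1 d pw pu rw ru U Phi c :
  (1 <= n1)%nat -> (1 <= d)%nat -> 1 < pw -> 1 < pu ->
  C2hyp K n1 d U Phi -> inR K n1 d c = true ->
  C1on K n1 d (Ogp K n1 d U Phi) (fun x => Gmap K n1 d pw pu rw ru Phi x c).
Proof.
intros Hn1 Hd Hpw Hpu HC Hc.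
destruct HC as [HU HC2]. assert (HC : C2hyp K n1 d U Phi) by (split; auto).
set (b := blk K c).
set (p := pb K pw pu b). set (q := conjexp p). set (rho := if Nat.ltb b K then rw else ru).
assert (Hp : 1 < p) by (unfold p, pb; destruct (Nat.ltb b K); auto).
set (S := fun x => lsum (blkL K n1 d b) (fun c' => exp (p * ((q - 1) * ln (pd Phi x c'))))).
apply (C1_ext _ _ _ _ (fun x => rho * exp ((q - 1) * ln (pd Phi x c)) * exp (- (1 / p) * ln (S x)))).
- apply Ogp_open; auto. intros c0 Hc0. apply (HC2 c0 Hc0).
- intros x [_ [Sx _]]; auto.
- intros x [Ux [Sx Px]].
  rewrite Gmap_blk by auto. fold b p q rho.
  unfold grad. rewrite Hc. rewrite psi_pos by auto. unfold Rdiv. f_equal.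
  unfold bnorm.
  assert (ES : Sp p (fun c' => psi q (if inR K n1 d c' then pd Phi x c' else 0)) (blkL K n1 d b) = S x).
  { unfold Sp, S. apply lsum_ext. intros c' Hin. apply In_blkL in Hin; [|unfold b; apply blk_le with n1 d; auto].
    destruct Hin as [Hin _]. rewrite Hin. rewrite psi_pos by auto.
    rewrite Rabs_right by (left; apply Rpower_pos). rewrite powp_pos_eq by apply Rpower_pos.
    unfold Rpower. rewrite ln_exp. auto. }
  rewrite ES.
  assert (HSp : 0 < S x).
  { destruct (blkL_nonempty K n1 d b Hn1 Hd) as [c0 Hc0]; [unfold b; apply blk_le with n1 d; auto|].
    unfold S. eapply Rlt_le_trans; [|apply (lsum_ge_term _ _ c0); auto; intros; left; apply exp_pos].
    apply exp_pos. }
  rewrite powp_pos_eq by auto. unfold Rpower. rewrite <- exp_Ropp. f_equal. unfold Rdiv. ring.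
- apply C1_mult; [apply C1_mult|].
  + apply C1_const.
  + apply C1_exp. apply C1_mult; [apply C1_const|]. apply C1_ln; [apply C1_pdPhi; auto|].
    intros x [_ [_ Px]]; auto.
  + apply C1_exp. apply C1_mult; [apply C1_const|]. apply C1_ln.
    * unfold S. apply C1_lsum. intros c' Hin. apply In_blkL in Hin; [|unfold b; apply blk_le with n1 d; auto].
      apply C1_exp. apply C1_mult; [apply C1_const|]. apply C1_mult; [apply C1_const|].
      apply C1_ln; [apply C1_pdPhi; auto; tauto|]. intros x [_ [_ Px]]; apply Px; tauto.
    * intros x _. destruct (blkL_nonempty K n1 d b Hn1 Hd) as [c0 Hc0]; [unfold b; apply blk_le with n1 d; auto|].
      unfold S. eapply Rlt_le_trans; [|apply (lsum_ge_term _ _ c0); auto; intros; left; apply exp_pos].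
      apply exp_pos.
Qed.

Lemma Sp_ext p x y L : (forall c, In c L -> x c = y c) -> Sp p x L = Sp p y L.
Proof. intros. unfold Sp. apply lsum_ext. intros. rewrite H; auto. Qed.

Lemma bnorm_ext p x y L : (forall c, In c L -> x c = y c) -> bnorm p x L = bnorm p y L.
Proof. intros. unfold bnorm. rewrite (Sp_ext p x y L); auto. Qed.

Lemma Sp_pos p x L c : In c L -> 0 < x c -> 0 < Sp p x L.
Proof.
intros Hin Hx. unfold Sp. eapply Rlt_le_trans; [|apply (lsum_ge_term _ _ c); auto; intros; apply powp_nonneg].
apply powp_pos. rewrite Rabs_right; lra.
Qed.

Lemma bnorm_pos p x L c : In c L -> 0 < x c -> 0 < bnorm p x L.
Proof. intros. unfold bnorm. apply powp_pos. eapply Sp_pos; eauto. Qed.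

Definition rbk (K : nat) (rw ru : R) (b : nat) : R := if Nat.ltb b K then rw else ru.

Lemma blocknorm_iff K n1 d pw pu x :
  (forall i, (i < K)%nat -> rownorm n1 pw x i = bnorm pw x (blkL K n1 d i)) /\
  unorm n1 d pu x = bnorm pu x (blkL K n1 d K).
Proof.
split.
- intros i Hi. unfold blkL. replace (Nat.ltb i K) with true by (symmetry; apply Nat.ltb_lt; auto).
  apply rownorm_bnorm.
- unfold blkL. rewrite Nat.ltb_irrefl. apply unorm_bnorm.
Qed.

Lemma Gmap_pos K n1 d pw pu rw ru Phi x c :
  (1 <= n1)%nat -> (1 <= d)%nat -> 0 < rw -> 0 < ru ->
  (forall c, inR K n1 d c = true -> 0 < pd Phi x c) -> inR K n1 d c = true ->
  0 < Gmap K n1 d pw pu rw ru Phi x c.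
Proof.
intros Hn1 Hd Hrw Hru Hg Hc. rewrite Gmap_blk by auto.
unfold grad. rewrite Hc. rewrite psi_pos by auto.
apply Rdiv_lt_0_compat.
- apply Rmult_lt_0_compat; [destruct (Nat.ltb (blk K c) K); auto|apply Rpower_pos].
- apply (bnorm_pos _ _ _ c); [apply In_blkL_self; auto|]. rewrite Hc, psi_pos by auto. apply Rpower_pos.
Qed.

Lemma Gmap_bnorm K n1 d pw pu rw ru Phi x b :
  (1 <= n1)%nat -> (1 <= d)%nat -> 1 < pw -> 1 < pu -> 0 < rw -> 0 < ru -> (b <= K)%nat ->
  (forall c, inR K n1 d c = true -> 0 < pd Phi x c) ->
  bnorm (pb K pw pu b) (Gmap K n1 d pw pu rw ru Phi x) (blkL K n1 d b) = rbk K rw ru b.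
Proof.
intros Hn1 Hd Hpw Hpu Hrw Hru Hb Hg.
set (p := pb K pw pu b). set (q := conjexp p).
assert (Hp : 1 < p) by (unfold p, pb; destruct (Nat.ltb b K); auto).
set (a := fun c' => psi q (grad K n1 d Phi x c')).
set (N := bnorm p a (blkL K n1 d b)).
destruct (blkL_nonempty K n1 d b Hn1 Hd Hb) as [c0 Hc0].
assert (HN : 0 < N).
{ apply (bnorm_pos _ _ _ c0); auto. apply In_blkL in Hc0; auto. destruct Hc0 as [Hc0 _].
  unfold a, grad. rewrite Hc0, psi_pos by auto. apply Rpower_pos. }
assert (Hr : 0 < rbk K rw ru b) by (unfold rbk; destruct (Nat.ltb b K); auto).
rewrite (bnorm_ext _ _ (fun c => (rbk K rw ru b / N) * a c)).
- rewrite bnorm_scale by (auto; apply Rdiv_lt_0_compat; auto). fold N. field. lra.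
- intros c Hin. apply In_blkL in Hin; auto. destruct Hin as [Hin Hbc].
  rewrite Gmap_blk by auto. rewrite Hbc. fold p q. unfold rbk. fold a N. unfold a. unfold Rdiv. ring.
Qed.

Lemma Gmap_Spp K n1 d pw pu rw ru Phi x :
  (1 <= n1)%nat -> (1 <= d)%nat -> 1 < pw -> 1 < pu -> 0 < rw -> 0 < ru ->
  (forall c, inR K n1 d c = true -> 0 < pd Phi x c) ->
  S_pp K n1 d pw pu rw ru (Gmap K n1 d pw pu rw ru Phi x).
Proof.
intros Hn1 Hd Hpw Hpu Hrw Hru Hg.
assert (Hpos : forall c, inR K n1 d c = true -> 0 < Gmap K n1 d pw pu rw ru Phi x c)
  by (intros; apply Gmap_pos; auto).
destruct (blocknorm_iff K n1 d pw pu (Gmap K n1 d pw pu rw ru Phi x)) as [Hrow Hu].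
split; [repeat split|auto].
- intros c Hc. unfold Gmap. rewrite Hc. auto.
- intros c Hc. left. auto.
- rewrite Hu. pose proof (Gmap_bnorm K n1 d pw pu rw ru Phi x K Hn1 Hd Hpw Hpu Hrw Hru (le_n K) Hg) as E.
  unfold pb, rbk in E. rewrite Nat.ltb_irrefl in E. auto.
- intros i Hi. rewrite Hrow by auto.
  pose proof (Gmap_bnorm K n1 d pw pu rw ru Phi x i Hn1 Hd Hpw Hpu Hrw Hru (Nat.lt_le_incl _ _ Hi) Hg) as E.
  unfold pb, rbk in E. replace (Nat.ltb i K) with true in E by (symmetry; apply Nat.ltb_lt; auto). auto.
Qed.

Definition gpath (K n1 d : nat) (x y : Pt) (t : R) : Pt :=
  fun c => if inR K n1 d c then exp ((1 - t) * ln (x c) + t * ln (y c)) else 0.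

Lemma gpath_supp K n1 d x y t : supp K n1 d (gpath K n1 d x y t).
Proof. intros c Hc. unfold gpath. rewrite Hc. auto. Qed.

Lemma gpath_pos K n1 d x y t c : inR K n1 d c = true -> 0 < gpath K n1 d x y t c.
Proof. intros Hc. unfold gpath. rewrite Hc. apply exp_pos. Qed.

Lemma gpath_0 K n1 d x y : supp K n1 d x -> (forall c, inR K n1 d c = true -> 0 < x c) ->
  gpath K n1 d x y 0 = x.
Proof.
intros Sx Px. apply functional_extensionality. intros c. unfold gpath.
destruct (inR K n1 d c) eqn:E.
- replace ((1 - 0) * ln (x c) + 0 * ln (y c)) with (ln (x c)) by ring. apply exp_ln; auto.
- rewrite Sx; auto.
Qed.

Lemma gpath_1 K n1 d x y : supp K n1 d y -> (forall c, inR K n1 d c = true -> 0 < y c) ->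
  gpath K n1 d x y 1 = y.
Proof.
intros Sy Py. apply functional_extensionality. intros c. unfold gpath.
destruct (inR K n1 d c) eqn:E.
- replace ((1 - 1) * ln (x c) + 1 * ln (y c)) with (ln (y c)) by ring. apply exp_ln; auto.
- rewrite Sy; auto.
Qed.

Lemma gpath_deriv K n1 d x y t0 c : inR K n1 d c = true ->
  derivable_pt_lim (fun t => gpath K n1 d x y t c) t0 (gpath K n1 d x y t0 c * (ln (y c) - ln (x c))).
Proof.
intros Hc. unfold gpath. rewrite Hc.
set (a := ln (x c)). set (b := ln (y c)).
apply CQ.d_gexp.
Qed.

Lemma Sp_gpath K n1 d p x y t L : 1 < p -> 0 <= t <= 1 ->
  (forall c, In c L -> inR K n1 d c = true /\ 0 < x c /\ 0 < y c) ->
  Sp p (gpath K n1 d x y t) L <= (1 - t) * Sp p x L + t * Sp p y L.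
Proof.
intros Hp Ht HL. unfold Sp.
replace ((1 - t) * lsum L (fun c => powp (Rabs (x c)) p) + t * lsum L (fun c => powp (Rabs (y c)) p))
  with (lsum L (fun c => (1 - t) * powp (Rabs (x c)) p + t * powp (Rabs (y c)) p))
  by (rewrite lsum_plus, !lsum_scal; ring).
apply lsum_le. intros c Hin. destruct (HL c Hin) as [Hc [Px Py]].
rewrite !Rabs_right by (try (left; apply gpath_pos; auto); lra).
rewrite !powp_pos_eq by (auto; apply gpath_pos; auto).
unfold gpath. rewrite Hc. unfold Rpower. rewrite ln_exp.
replace (p * ((1 - t) * ln (x c) + t * ln (y c))) with ((1 - t) * (p * ln (x c)) + t * (p * ln (y c))) by ring.
pose proof (exp_convex (1 - t) (p * ln (x c)) (p * ln (y c))) as E.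
replace (1 - (1 - t)) with t in E by ring. apply E. lra.
Qed.

Lemma Bpp_blocks K n1 d pw pu rw ru x : 1 < pw -> 1 < pu -> 0 < rw -> 0 < ru ->
  B_pp K n1 d pw pu rw ru x <->
  (supp K n1 d x /\ (forall c, inR K n1 d c = true -> 0 < x c) /\
   forall b, (b <= K)%nat -> Sp (pb K pw pu b) x (blkL K n1 d b) <= Rpower (rbk K rw ru b) (pb K pw pu b)).
Proof.
intros Hpw Hpu Hrw Hru. destruct (blocknorm_iff K n1 d pw pu x) as [Hrow Hu].
unfold B_pp. split.
- intros [Sx [Px [Nu Nw]]]. split; [auto|split; [auto|]].
  intros b Hb. unfold pb, rbk. destruct (Nat.ltb b K) eqn:E.
  + apply Nat.ltb_lt in E. apply bnorm_le; auto. rewrite <- (Hrow b E). apply Nw; auto.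
  + apply Nat.ltb_ge in E. assert (b = K) by lia. subst. apply bnorm_le; auto. rewrite <- Hu. auto.
- intros [Sx [Px Hb]]. split; [auto|split; [auto|split]].
  + rewrite Hu. apply bnorm_le; auto. specialize (Hb K (le_n K)). unfold pb, rbk in Hb. rewrite Nat.ltb_irrefl in Hb. auto.
  + intros i Hi. rewrite Hrow by auto. apply bnorm_le; auto. specialize (Hb i (Nat.lt_le_incl _ _ Hi)).
    unfold pb, rbk in Hb. replace (Nat.ltb i K) with true in Hb by (symmetry; apply Nat.ltb_lt; auto). auto.
Qed.

Lemma gpath_Bpp K n1 d pw pu rw ru x y t : 1 < pw -> 1 < pu -> 0 < rw -> 0 < ru -> 0 <= t <= 1 ->
  B_pp K n1 d pw pu rw ru x -> B_pp K n1 d pw pu rw ru y -> B_pp K n1 d pw pu rw ru (gpath K n1 d x y t).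
Proof.
intros Hpw Hpu Hrw Hru Ht Bx By.
apply Bpp_blocks in Bx, By; auto. apply Bpp_blocks; auto.
destruct Bx as [Sx [Px Nx]], By as [Sy [Py Ny]].
split; [apply gpath_supp|split; [intros; apply gpath_pos; auto|]].
intros b Hb. assert (Hp : 1 < pb K pw pu b) by (unfold pb; destruct (Nat.ltb b K); auto).
eapply Rle_trans; [apply Sp_gpath; auto|].
- intros c Hin. apply In_blkL in Hin; auto. destruct Hin as [Hc _]. auto.
- specialize (Nx b Hb). specialize (Ny b Hb). nra.
Qed.

Definition HAprop (K n1 d : nat) (pw pu rw ru : R) (Phi : Pt -> R) (A : nat -> nat -> R) : Prop :=
  forall x, B_pp K n1 d pw pu rw ru x ->
       forall c, inR K n1 d c = true ->
         (forall k, (k < K)%nat ->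
            rsum n1 (fun l => Rabs (pd (fun y => Gmap K n1 d pw pu rw ru Phi y c) x (CW k l))
                              * x (CW k l))
            <= A (blk K c) k * Gmap K n1 d pw pu rw ru Phi x c) /\
         rsum n1 (fun a => rsum d (fun b =>
              Rabs (pd (fun y => Gmap K n1 d pw pu rw ru Phi y c) x (CU a b)) * x (CU a b)))
            <= A (blk K c) K * Gmap K n1 d pw pu rw ru Phi x c.

Definition Dv (K n1 d : nat) (x y : Pt) (k : nat) : R :=
  if Nat.ltb k K then rmaxn n1 (fun j => Rabs (ln (x (CW k j)) - ln (y (CW k j))))
  else rmaxn n1 (fun a => rmaxn d (fun b => Rabs (ln (x (CU a b)) - ln (y (CU a b))))).

Lemma Dv_nonneg K n1 d x y k : 0 <= Dv K n1 d x y k.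
Proof. unfold Dv. destruct (Nat.ltb k K); apply rmaxn_nonneg. Qed.

Lemma Dv_sym K n1 d x y k : Dv K n1 d x y k = Dv K n1 d y x k.
Proof.
unfold Dv. destruct (Nat.ltb k K).
- apply rmaxn_ext. intros. apply Rabs_minus_sym.
- apply rmaxn_ext. intros. apply rmaxn_ext. intros. apply Rabs_minus_sym.
Qed.

Lemma mu_Dv K n1 d gam x y : mu K n1 d gam x y = rsum (S K) (fun k => gam k * Dv K n1 d x y k).
Proof.
unfold mu. simpl. f_equal.
- apply rsum_ext. intros i Hi. unfold Dv. replace (Nat.ltb i K) with true by (symmetry; apply Nat.ltb_lt; auto). auto.
- unfold Dv. rewrite Nat.ltb_irrefl. auto.
Qed.

Lemma delta_le_Dv K n1 d x y c : inR K n1 d c = true ->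
  Rabs (ln (x c) - ln (y c)) <= Dv K n1 d x y (blk K c).
Proof.
intros Hc. unfold Dv. destruct c; simpl in *; rewrite andb_true_iff, !Nat.ltb_lt in Hc.
- replace (Nat.ltb i K) with true by (symmetry; apply Nat.ltb_lt; lia).
  apply (rmaxn_ge n1 (fun j0 => Rabs (ln (x (CW i j0)) - ln (y (CW i j0)))) j). lia.
- rewrite Nat.ltb_irrefl.
  eapply Rle_trans; [|apply (rmaxn_ge n1 (fun a0 => rmaxn d (fun b0 => Rabs (ln (x (CU a0 b0)) - ln (y (CU a0 b0))))) a); lia].
  apply (rmaxn_ge d (fun b0 => Rabs (ln (x (CU a b0)) - ln (y (CU a b0)))) b). lia.
Qed.

Definition Setting (K n1 d : nat) (pw pu rw ru : R) (U : Pt -> Prop) (Phi : Pt -> R) (A : nat -> nat -> R) : Prop :=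
  (1 <= n1)%nat /\ (1 <= d)%nat /\ 1 < pw /\ 1 < pu /\ 0 < rw /\ 0 < ru /\
  C2hyp K n1 d U Phi /\ (forall x, B_pp K n1 d pw pu rw ru x -> U x) /\
  (forall x, B_pp K n1 d pw pu rw ru x -> forall c, inR K n1 d c = true -> 0 < pd Phi x c) /\
  (forall i k, (i <= K)%nat -> (k <= K)%nat -> 0 <= A i k) /\
  HAprop K n1 d pw pu rw ru Phi A.

Lemma Bpp_Ogp K n1 d pw pu rw ru U Phi A x : Setting K n1 d pw pu rw ru U Phi A ->
  B_pp K n1 d pw pu rw ru x -> Ogp K n1 d U Phi x.
Proof.
intros (Hn1 & Hd & Hpw & Hpu & Hrw & Hru & HC & HBU & Hgp & HAnn & HA) Bx.
split; [auto|split; [apply Bx|apply Hgp; auto]].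
Qed.

Lemma coord_contr K n1 d pw pu rw ru U Phi A x y c :
  Setting K n1 d pw pu rw ru U Phi A ->
  B_pp K n1 d pw pu rw ru x -> B_pp K n1 d pw pu rw ru y -> inR K n1 d c = true ->
  Rabs (ln (Gmap K n1 d pw pu rw ru Phi x c) - ln (Gmap K n1 d pw pu rw ru Phi y c))
    <= rsum (S K) (fun k => A (blk K c) k * Dv K n1 d x y k).
Proof.
intros HS Bx By Hc.
pose proof HS as (Hn1 & Hd & Hpw & Hpu & Hrw & Hru & HC & HBU & Hgp & HAnn & HA).
set (F := fun w => Gmap K n1 d pw pu rw ru Phi w c).
set (O := Ogp K n1 d U Phi).
assert (HO : Vopen K n1 d O) by (apply Ogp_open; [apply HC|intros c0 Hc0; apply (proj2 HC c0 Hc0)]).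
destruct (Gmap_C1 K n1 d pw pu rw ru U Phi c Hn1 Hd Hpw Hpu HC Hc) as [_ HF].
set (z := gpath K n1 d x y).
assert (Bz : forall t, 0 <= t <= 1 -> B_pp K n1 d pw pu rw ru (z t)) by (intros; apply gpath_Bpp; auto).
assert (Fpos : forall t, 0 <= t <= 1 -> 0 < F (z t)).
{ intros t Ht. apply Gmap_pos; auto. }
set (z' := fun t c' => z t c' * (ln (y c') - ln (x c'))).
assert (Hder : forall t, 0 <= t <= 1 ->
   derivable_pt_lim (fun t => ln (F (z t))) t (/ F (z t) * allsum K n1 d (fun c' => pd F (z t) c' * z' t c'))).
{ intros t Ht.
  assert (H1 : derivable_pt_lim (fun t => F (z t)) t (allsum K n1 d (fun c' => pd F (z t) c' * z' t c'))).
  { apply (chain K n1 d O F z (z' t) t HO).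
    - intros c' Hc' w Ow. apply (HF c' Hc'). auto.
    - intros c' Hc'. apply (HF c' Hc').
    - apply (Bpp_Ogp K n1 d pw pu rw ru U Phi A); auto.
    - intros. apply gpath_supp.
    - intros c' Hc'. unfold z', z. apply gpath_deriv; auto. }
  pose proof (derivable_pt_lim_comp (fun t => F (z t)) ln t _ _ H1 (derivable_pt_lim_ln _ (Fpos t Ht))) as H2.
  unfold comp in H2. exact H2. }
destruct (MVT_cor2 (fun t => ln (F (z t))) (fun t => / F (z t) * allsum K n1 d (fun c' => pd F (z t) c' * z' t c')) 0 1 Rlt_0_1)
  as [th [Hth Hthr]].
{ intros t Ht. apply Hder; auto. }
assert (E0 : z 0 = x) by (apply gpath_0; apply Bx).
assert (E1 : z 1 = y) by (apply gpath_1; apply By).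
rewrite E0, E1 in Hth. fold (F x) (F y).
rewrite Rabs_minus_sym, Hth. replace (1 - 0) with 1 by ring. rewrite Rmult_1_r.
set (w := z th) in *.
assert (Bw : B_pp K n1 d pw pu rw ru w) by (apply Bz; lra).
assert (Fw : 0 < F w) by (apply Fpos; lra).
rewrite Rabs_mult, Rabs_inv, Rabs_right by lra.
apply (Rmult_le_reg_l (F w)); auto. rewrite <- Rmult_assoc, Rinv_r, Rmult_1_l by lra.
eapply Rle_trans; [apply allsum_abs|].
destruct (HA w Bw c Hc) as [HAw HAu].
assert (Hterm : forall c', inR K n1 d c' = true ->
   Rabs (pd F w c' * z' th c') <= Dv K n1 d x y (blk K c') * (Rabs (pd F w c') * w c')).
{ intros c' Hc'. unfold z'. fold w. rewrite !Rabs_mult.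
  assert (0 < w c') by (apply gpath_pos; auto).
  rewrite (Rabs_right (w c')) by lra.
  pose proof (delta_le_Dv K n1 d x y c' Hc'). rewrite Rabs_minus_sym in H0.
  pose proof (Rabs_pos (pd F w c')).
  assert (Rabs (pd F w c') * w c' * Rabs (ln (y c') - ln (x c')) <= Rabs (pd F w c') * w c' * Dv K n1 d x y (blk K c'))
    by (apply Rmult_le_compat_l; [apply Rmult_le_pos; lra|auto]).
  lra. }
unfold allsum.
replace (F w * rsum (S K) (fun k => A (blk K c) k * Dv K n1 d x y k))
  with (rsum K (fun k => Dv K n1 d x y k * (A (blk K c) k * F w)) + Dv K n1 d x y K * (A (blk K c) K * F w)).
2:{ simpl. rewrite Rmult_plus_distr_l, <- rsum_scal. f_equal; [apply rsum_ext; intros; ring|ring]. }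
apply Rplus_le_compat.
- apply rsum_le. intros k Hk.
  eapply Rle_trans.
  + apply (rsum_le n1 _ (fun l => Dv K n1 d x y k * (Rabs (pd F w (CW k l)) * w (CW k l)))).
    intros l Hl. apply (Hterm (CW k l)). simpl. rewrite andb_true_iff, !Nat.ltb_lt. auto.
  + rewrite rsum_scal. apply Rmult_le_compat_l; [apply Dv_nonneg|]. apply HAw; auto.
- eapply Rle_trans.
  + apply (rsum_le n1 _ (fun a => Dv K n1 d x y K * rsum d (fun b => Rabs (pd F w (CU a b)) * w (CU a b)))).
    intros a Ha. rewrite <- rsum_scal. apply rsum_le. intros b Hb.
    apply (Hterm (CU a b)). simpl. rewrite andb_true_iff, !Nat.ltb_lt. auto.
  + rewrite rsum_scal. apply Rmult_le_compat_l; [apply Dv_nonneg|]. apply HAu.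
Qed.

Lemma Dv_G_le K n1 d pw pu rw ru U Phi A x y i :
  Setting K n1 d pw pu rw ru U Phi A ->
  B_pp K n1 d pw pu rw ru x -> B_pp K n1 d pw pu rw ru y -> (i <= K)%nat ->
  Dv K n1 d (Gmap K n1 d pw pu rw ru Phi x) (Gmap K n1 d pw pu rw ru Phi y) i
    <= rsum (S K) (fun k => A i k * Dv K n1 d x y k).
Proof.
intros HS Bx By Hi.
pose proof HS as (Hn1 & Hd & Hpw & Hpu & Hrw & Hru & HC & HBU & Hgp & HAnn & HA).
assert (Hnn : 0 <= rsum (S K) (fun k => A i k * Dv K n1 d x y k)).
{ apply rsum_nonneg. intros k Hk. apply Rmult_le_pos; [apply HAnn; lia|apply Dv_nonneg]. }
unfold Dv at 1. destruct (Nat.ltb i K) eqn:E.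
- apply Nat.ltb_lt in E. apply rmaxn_le; auto. intros j Hj.
  assert (Hc : inR K n1 d (CW i j) = true) by (simpl; rewrite andb_true_iff, !Nat.ltb_lt; auto).
  apply (coord_contr K n1 d pw pu rw ru U Phi A x y (CW i j)); auto.
- apply Nat.ltb_ge in E. assert (i = K) by lia. subst.
  apply rmaxn_le; auto. intros a Ha. apply rmaxn_le; auto. intros b Hb.
  assert (Hc : inR K n1 d (CU a b) = true) by (simpl; rewrite andb_true_iff, !Nat.ltb_lt; auto).
  apply (coord_contr K n1 d pw pu rw ru U Phi A x y (CU a b)); auto.
Qed.

Lemma contraction K n1 d pw pu rw ru U Phi A gam lam x y :
  Setting K n1 d pw pu rw ru U Phi A ->
  (forall i, (i <= K)%nat -> 0 < gam i) ->
  (forall k, (k <= K)%nat -> rsum (S K) (fun i => A i k * gam i) = lam * gam k) ->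
  B_pp K n1 d pw pu rw ru x -> B_pp K n1 d pw pu rw ru y ->
  mu K n1 d gam (Gmap K n1 d pw pu rw ru Phi x) (Gmap K n1 d pw pu rw ru Phi y) <= lam * mu K n1 d gam x y.
Proof.
intros HS Hg Heig Bx By.
rewrite !mu_Dv.
eapply Rle_trans.
{ apply rsum_le. intros i Hi. apply Rmult_le_compat_l; [left; apply Hg; lia|].
  apply (Dv_G_le K n1 d pw pu rw ru U Phi A x y i HS Bx By). lia. }
replace (rsum (S K) (fun i => gam i * rsum (S K) (fun k => A i k * Dv K n1 d x y k)))
  with (rsum (S K) (fun i => rsum (S K) (fun k => (A i k * gam i) * Dv K n1 d x y k))).
2:{ apply rsum_ext. intros. rewrite <- rsum_scal. apply rsum_ext. intros. ring. }
rewrite rsum_swap.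
rewrite <- rsum_scal. right. apply rsum_ext. intros k Hk.
replace (rsum (S K) (fun i => A i k * gam i * Dv K n1 d x y k))
  with (rsum (S K) (fun i => A i k * gam i) * Dv K n1 d x y k).
- rewrite Heig by lia. ring.
- rewrite Rmult_comm, <- rsum_scal. apply rsum_ext. intros. ring.
Qed.

Lemma mu_sym K n1 d gam x y : mu K n1 d gam x y = mu K n1 d gam y x.
Proof. rewrite !mu_Dv. apply rsum_ext. intros. rewrite Dv_sym. auto. Qed.

Lemma mu_nonneg K n1 d gam x y : (forall i, (i <= K)%nat -> 0 < gam i) -> 0 <= mu K n1 d gam x y.
Proof.
intros Hg. rewrite mu_Dv. apply rsum_nonneg. intros. apply Rmult_le_pos; [left; apply Hg; lia|apply Dv_nonneg].
Qed.

Lemma Dv_triangle K n1 d x y z k : Dv K n1 d x z k <= Dv K n1 d x y k + Dv K n1 d y z k.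
Proof.
unfold Dv. destruct (Nat.ltb k K).
- eapply Rle_trans; [|apply rmaxn_add; intros; apply Rabs_pos].
  apply rmaxn_mono. intros. replace (ln (x (CW k i)) - ln (z (CW k i))) with
    ((ln (x (CW k i)) - ln (y (CW k i))) + (ln (y (CW k i)) - ln (z (CW k i)))) by ring. apply Rabs_triang.
- eapply Rle_trans; [|apply rmaxn_add; intros; apply rmaxn_nonneg].
  apply rmaxn_mono. intros a Ha.
  eapply Rle_trans; [|apply rmaxn_add; intros; apply Rabs_pos].
  apply rmaxn_mono. intros b Hb. replace (ln (x (CU a b)) - ln (z (CU a b))) with
    ((ln (x (CU a b)) - ln (y (CU a b))) + (ln (y (CU a b)) - ln (z (CU a b)))) by ring. apply Rabs_triang.
Qed.

Lemma mu_triangle K n1 d gam x y z : (forall i, (i <= K)%nat -> 0 < gam i) ->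
  mu K n1 d gam x z <= mu K n1 d gam x y + mu K n1 d gam y z.
Proof.
intros Hg. rewrite !mu_Dv. rewrite <- rsum_plus. apply rsum_le. intros k Hk.
pose proof (Dv_triangle K n1 d x y z k). assert (0 < gam k) by (apply Hg; lia). nra.
Qed.

Lemma gam_Dv_le_mu K n1 d gam x y b : (forall i, (i <= K)%nat -> 0 < gam i) -> (b <= K)%nat ->
  gam b * Dv K n1 d x y b <= mu K n1 d gam x y.
Proof.
intros Hg Hb. rewrite mu_Dv. apply (rsum_ge_term (S K) (fun k => gam k * Dv K n1 d x y k)); [|lia].
intros. apply Rmult_le_pos; [left; apply Hg; lia|apply Dv_nonneg].
Qed.

Lemma mu_zero K n1 d gam x y : (forall i, (i <= K)%nat -> 0 < gam i) ->
  (forall c, inR K n1 d c = true -> 0 < x c) -> (forall c, inR K n1 d c = true -> 0 < y c) ->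
  mu K n1 d gam x y <= 0 -> forall c, inR K n1 d c = true -> x c = y c.
Proof.
intros Hg Px Py H0 c Hc.
pose proof (gam_Dv_le_mu K n1 d gam x y (blk K c) Hg (blk_le K n1 d c Hc)).
pose proof (Dv_nonneg K n1 d x y (blk K c)).
assert (0 < gam (blk K c)) by (apply Hg; apply blk_le with n1 d; auto).
assert (Dv K n1 d x y (blk K c) = 0) by nra.
pose proof (delta_le_Dv K n1 d x y c Hc). rewrite H3 in H4.
pose proof (Rabs_pos (ln (x c) - ln (y c))).
assert (Rabs (ln (x c) - ln (y c)) = 0) by lra.
assert (ln (x c) - ln (y c) = 0) by (destruct (Rcase_abs (ln (x c) - ln (y c))); [rewrite Rabs_left in H6|rewrite Rabs_right in H6]; lra).
apply ln_inv; auto; lra.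
Qed.

Lemma abs_diff_ln a b M : 0 < a <= M -> 0 < b <= M -> Rabs (a - b) <= M * Rabs (ln a - ln b).
Proof.
intros Ha Hb.
assert (key : forall a b, 0 < b <= a -> a <= M -> a - b <= M * (ln a - ln b)).
{ clear. intros a b Hb Ha.
  assert (Hs : ln (b / a) <= b / a - 1).
  { pose proof (exp_ineq1_le (ln (b / a))). rewrite exp_ln in H; [lra|]. apply Rdiv_lt_0_compat; lra. }
  unfold Rdiv in Hs. rewrite ln_mult, ln_Rinv in Hs by (try apply Rinv_0_lt_compat; lra).
  assert (H1 : a * (ln b - ln a) <= a * (b / a - 1)) by (apply Rmult_le_compat_l; lra).
  replace (a * (b / a - 1)) with (b - a) in H1 by (field; lra).
  assert (0 <= ln a - ln b).
  { destruct (Req_dec a b); [subst; lra|]. left. apply Rlt_Rminus. apply ln_increasing; lra. }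
  nra. }
destruct (Rle_dec b a).
- rewrite !Rabs_right; [apply key; lra| |lra].
  destruct (Req_dec a b); [subst; lra|]. left. apply Rlt_Rminus. apply ln_increasing; lra.
- rewrite Rabs_minus_sym, (Rabs_minus_sym (ln a)). rewrite !Rabs_right; [apply key; lra| |lra].
  left. apply Rlt_Rminus. apply ln_increasing; lra.
Qed.

Lemma entry_le_rbk K n1 d pw pu rw ru x c : 1 < pw -> 1 < pu -> 0 < rw -> 0 < ru ->
  B_pp K n1 d pw pu rw ru x -> inR K n1 d c = true -> x c <= rbk K rw ru (blk K c).
Proof.
intros Hpw Hpu Hrw Hru Bx Hc.
apply Bpp_blocks in Bx; auto. destruct Bx as [Sx [Px Nx]].
pose proof (blk_le K n1 d c Hc) as Hb.
specialize (Nx _ Hb).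
assert (Hp : 1 < pb K pw pu (blk K c)) by (unfold pb; destruct (Nat.ltb (blk K c) K); auto).
assert (Hr : 0 < rbk K rw ru (blk K c)) by (unfold rbk; destruct (Nat.ltb (blk K c) K); auto).
apply bnorm_le in Nx; auto.
pose proof (entry_le_bnorm (pb K pw pu (blk K c)) x _ c Hp (In_blkL_self K n1 d c Hc)).
pose proof (Px c Hc). rewrite Rabs_right in H by lra. lra.
Qed.

Lemma linf_le_mu K n1 d pw pu rw ru gam x y :
  1 < pw -> 1 < pu -> 0 < rw -> 0 < ru -> (forall i, (i <= K)%nat -> 0 < gam i) ->
  B_pp K n1 d pw pu rw ru x -> B_pp K n1 d pw pu rw ru y ->
  linf K n1 d (fun c => x c - y c) <= mu K n1 d gam x y / Rmin (gam K / ru) (rminn K gam / rw).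
Proof.
intros Hpw Hpu Hrw Hru Hg Bx By.
set (m := Rmin (gam K / ru) (rminn K gam / rw)).
assert (Hm : 0 < m).
{ assert (0 < gam K) by (apply Hg; lia).
  assert (0 < rminn K gam) by (apply rminn_pos; intros; apply Hg; lia).
  apply Rmin_pos; apply Rdiv_lt_0_compat; auto. }
assert (Hmu : 0 <= mu K n1 d gam x y) by (apply mu_nonneg; auto).
assert (Hmm : 0 <= mu K n1 d gam x y / m) by (unfold Rdiv; apply Rmult_le_pos; [auto|left; apply Rinv_0_lt_compat; auto]).
assert (Hent : forall c, inR K n1 d c = true -> Rabs (x c - y c) <= mu K n1 d gam x y / m).
{ intros c Hc. set (b := blk K c).
  assert (Hb : (b <= K)%nat) by (apply blk_le with n1 d; auto).
  pose proof (entry_le_rbk K n1 d pw pu rw ru x c Hpw Hpu Hrw Hru Bx Hc).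
  pose proof (entry_le_rbk K n1 d pw pu rw ru y c Hpw Hpu Hrw Hru By Hc).
  assert (0 < x c) by (apply Bx; auto). assert (0 < y c) by (apply By; auto).
  apply Rle_trans with (rbk K rw ru b * Rabs (ln (x c) - ln (y c))); [apply abs_diff_ln; split; auto|].
  pose proof (delta_le_Dv K n1 d x y c Hc). fold b in H3.
  pose proof (gam_Dv_le_mu K n1 d gam x y b Hg Hb).
  assert (Hrb : rbk K rw ru b * m <= gam b).
  { unfold rbk, m. destruct (Nat.ltb b K) eqn:E.
    - apply Nat.ltb_lt in E. 
      assert (m <= rminn K gam / rw) by apply Rmin_r.
      assert (rminn K gam <= gam b) by (apply rminn_le; auto).
      assert (rw * (rminn K gam / rw) = rminn K gam) by (field; lra).
      fold m. nra.
    - apply Nat.ltb_ge in E. assert (b = K) by lia. rewrite H5.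
      assert (m <= gam K / ru) by apply Rmin_l.
      assert (ru * (gam K / ru) = gam K) by (field; lra).
      fold m. nra. }
  assert (Hr : 0 < rbk K rw ru b) by (unfold rbk; destruct (Nat.ltb b K); auto).
  apply (Rmult_le_reg_r m); auto. replace (mu K n1 d gam x y / m * m) with (mu K n1 d gam x y) by (field; lra).
  pose proof (Dv_nonneg K n1 d x y b).
  assert (rbk K rw ru b * Rabs (ln (x c) - ln (y c)) <= rbk K rw ru b * Dv K n1 d x y b)
    by (apply Rmult_le_compat_l; lra).
  nra. }
unfold linf. apply Rmax_lub.
- apply rmaxn_le; auto. intros i Hi. apply rmaxn_le; auto. intros j Hj.
  apply Hent. simpl. rewrite andb_true_iff, !Nat.ltb_lt. auto.
- apply rmaxn_le; auto. intros a Ha. apply rmaxn_le; auto. intros b Hb.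
  apply Hent. simpl. rewrite andb_true_iff, !Nat.ltb_lt. auto.
Qed.

Lemma crit_blk K n1 d pw pu (Phi : Pt -> R) (x : Pt) (lam : nat -> R) :
  (forall i j, (i < K)%nat -> (j < n1)%nat -> pd Phi x (CW i j) = lam i * psi pw (x (CW i j))) ->
  (forall a b, (a < n1)%nat -> (b < d)%nat -> pd Phi x (CU a b) = lam K * psi pu (x (CU a b))) ->
  forall c, inR K n1 d c = true -> pd Phi x c = lam (blk K c) * psi (pb K pw pu (blk K c)) (x c).
Proof.
intros Hw Hu c Hc. destruct c; simpl in *; rewrite andb_true_iff, !Nat.ltb_lt in Hc; unfold pb.
- replace (Nat.ltb i K) with true by (symmetry; apply Nat.ltb_lt; lia). apply Hw; lia.
- rewrite Nat.ltb_irrefl. apply Hu; lia.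
Qed.

Lemma Rpower_1_base e : Rpower 1 e = 1.
Proof. unfold Rpower. rewrite ln_1, Rmult_0_r. apply exp_0. Qed.

Lemma pq_one p : 1 < p -> (p - 1) * (conjexp p - 1) = 1.
Proof. intros. unfold conjexp. field. lra. Qed.

Lemma Spp_bnorm K n1 d pw pu rw ru x b : 1 < pw -> 1 < pu -> 0 < rw -> 0 < ru ->
  S_plus K n1 d pw pu rw ru x -> (b <= K)%nat ->
  bnorm (pb K pw pu b) x (blkL K n1 d b) = rbk K rw ru b.
Proof.
intros Hpw Hpu Hrw Hru [Sx [Px [Nu Nw]]] Hb.
destruct (blocknorm_iff K n1 d pw pu x) as [Hrow Hu].
unfold pb, rbk. destruct (Nat.ltb b K) eqn:E.
- apply Nat.ltb_lt in E. rewrite <- Hrow; auto.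
- apply Nat.ltb_ge in E. assert (b = K) by lia. subst. rewrite <- Hu. auto.
Qed.

Lemma fixed_of_crit K n1 d pw pu rw ru Phi x :
  (1 <= n1)%nat -> (1 <= d)%nat -> 1 < pw -> 1 < pu -> 0 < rw -> 0 < ru ->
  crit_pt K n1 d pw pu rw ru Phi x -> (forall c, inR K n1 d c = true -> 0 < pd Phi x c) ->
  Gmap K n1 d pw pu rw ru Phi x = x.
Proof.
intros Hn1 Hd Hpw Hpu Hrw Hru [[Splx Px] [lam [Hw Hu]]] Hg.
pose proof (crit_blk K n1 d pw pu Phi x lam Hw Hu) as Hcb.
apply functional_extensionality. intros c.
destruct (inR K n1 d c) eqn:Hc.
2:{ unfold Gmap. rewrite Hc. symmetry. apply (proj1 Splx). auto. }
set (b := blk K c).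
assert (Hb : (b <= K)%nat) by (apply blk_le with n1 d; auto).
set (p := pb K pw pu b). set (q := conjexp p).
assert (Hp : 1 < p) by (unfold p, pb; destruct (Nat.ltb b K); auto).
assert (Hlam : 0 < lam b).
{ specialize (Hcb c Hc). fold b p in Hcb. specialize (Hg c Hc). rewrite Hcb in Hg.
  rewrite psi_pos in Hg by auto. pose proof (Rpower_pos (x c) (p - 1)).
  destruct (Rlt_le_dec 0 (lam b)); auto. nra. }
set (L := Rpower (lam b) (q - 1)).
assert (HL : 0 < L) by apply Rpower_pos.
assert (Hpsi : forall c', inR K n1 d c' = true -> blk K c' = b ->
   psi q (grad K n1 d Phi x c') = L * x c').
{ intros c' Hc' Hb'. unfold grad. rewrite Hc'. rewrite Hcb by auto. rewrite Hb'. fold p.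
  rewrite (psi_pos p) by auto. rewrite psi_pos by (apply Rmult_lt_0_compat; auto; apply Rpower_pos).
  rewrite <- Rpower_mult_distr by (auto; apply Rpower_pos). rewrite Rpower_mult.
  unfold q. rewrite pq_one by auto. rewrite Rpower_1; auto. }
rewrite Gmap_blk by auto. fold b p q.
rewrite (bnorm_ext _ _ (fun c' => L * x c')).
2:{ intros c' Hin. apply In_blkL in Hin; auto. destruct Hin. apply Hpsi; auto. }
rewrite bnorm_scale by auto.
pose proof (Spp_bnorm K n1 d pw pu rw ru x b Hpw Hpu Hrw Hru Splx Hb) as E. fold p in E. rewrite E. rewrite Hpsi by auto. unfold rbk.
assert (0 < (if Nat.ltb b K then rw else ru)) by (destruct (Nat.ltb b K); auto).
field. split; lra.
Qed.

Lemma crit_of_fixed K n1 d pw pu rw ru Phi x :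
  (1 <= n1)%nat -> (1 <= d)%nat -> 1 < pw -> 1 < pu -> 0 < rw -> 0 < ru ->
  S_pp K n1 d pw pu rw ru x -> (forall c, inR K n1 d c = true -> 0 < pd Phi x c) ->
  Gmap K n1 d pw pu rw ru Phi x = x -> crit_pt K n1 d pw pu rw ru Phi x.
Proof.
intros Hn1 Hd Hpw Hpu Hrw Hru Sx Hg Hfix.
set (N := fun b => bnorm (pb K pw pu b) (fun c' => psi (conjexp (pb K pw pu b)) (grad K n1 d Phi x c')) (blkL K n1 d b)).
set (lam := fun b => Rpower (N b / rbk K rw ru b) (pb K pw pu b - 1)).
assert (Hgen : forall c, inR K n1 d c = true -> pd Phi x c = lam (blk K c) * psi (pb K pw pu (blk K c)) (x c)).
{ intros c Hc. set (b := blk K c).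
  assert (Hb : (b <= K)%nat) by (apply blk_le with n1 d; auto).
  set (p := pb K pw pu b). set (q := conjexp p). set (rho := rbk K rw ru b).
  assert (Hp : 1 < p) by (unfold p, pb; destruct (Nat.ltb b K); auto).
  assert (Hr : 0 < rho) by (unfold rho, rbk; destruct (Nat.ltb b K); auto).
  assert (HN : 0 < N b).
  { unfold N. apply (bnorm_pos _ _ _ c); [apply In_blkL_self; auto|].
    unfold grad. rewrite Hc, psi_pos by auto. apply Rpower_pos. }
  assert (Hxc : x c = rho / N b * Rpower (pd Phi x c) (q - 1)).
  { assert (E : x c = Gmap K n1 d pw pu rw ru Phi x c) by (rewrite Hfix; auto). rewrite E. rewrite Gmap_blk by auto. fold b p q. unfold grad at 1. rewrite Hc.
    rewrite psi_pos by auto. unfold N, rho, rbk. fold p q. unfold Rdiv. ring. }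
  assert (Hx : 0 < x c) by (apply Sx; auto).
  rewrite (psi_pos p) by auto. rewrite Hxc.
  rewrite <- Rpower_mult_distr by (try apply Rpower_pos; apply Rdiv_lt_0_compat; auto).
  rewrite Rpower_mult. rewrite (Rmult_comm (q - 1)). unfold q. rewrite pq_one by auto.
  rewrite Rpower_1 by auto. unfold lam. fold p rho.
  rewrite <- Rmult_assoc, Rpower_mult_distr by (apply Rdiv_lt_0_compat; auto).
  replace (N b / rho * (rho / N b)) with 1 by (field; lra). rewrite Rpower_1_base. ring. }
split; auto. exists lam. split.
- intros i j Hi Hj. assert (Hc : inR K n1 d (CW i j) = true) by (simpl; rewrite andb_true_iff, !Nat.ltb_lt; auto).
  rewrite Hgen by auto. simpl. unfold pb. replace (Nat.ltb i K) with true by (symmetry; apply Nat.ltb_lt; auto). auto.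
- intros a b Ha Hb. assert (Hc : inR K n1 d (CU a b) = true) by (simpl; rewrite andb_true_iff, !Nat.ltb_lt; auto).
  rewrite Hgen by auto. simpl. unfold pb. rewrite Nat.ltb_irrefl. auto.
Qed.

Lemma lsum_lt L f g : (forall c, In c L -> f c <= g c) -> (exists c, In c L /\ f c < g c) -> lsum L f < lsum L g.
Proof.
induction L; simpl; intros H [c [Hc Hlt]]; [tauto|].
destruct Hc as [Hc|Hc].
- subst. assert (lsum L f <= lsum L g) by (apply lsum_le; auto). lra.
- assert (lsum L f < lsum L g) by (apply IHL; auto; exists c; auto).
  assert (f a <= g a) by auto. lra.
Qed.

Lemma Rpower_div a b e : 0 < a -> 0 < b -> Rpower (a / b) e = Rpower a e / Rpower b e.
Proof.
intros. unfold Rdiv. rewrite <- Rpower_mult_distr by (auto; apply Rinv_0_lt_compat; auto).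
f_equal. unfold Rpower. rewrite ln_Rinv by auto. rewrite <- exp_Ropp. f_equal. ring.
Qed.

Lemma holder_block L p rho g x :
  1 < p -> 0 < rho -> (exists c0, In c0 L) ->
  (forall c, In c L -> 0 < g c) -> (forall c, In c L -> 0 <= x c) ->
  Sp p x L = Rpower rho p ->
  let q := conjexp p in
  let a := fun c => Rpower (g c) (q - 1) in
  let N := bnorm p a L in
  let z := fun c => rho * a c / N in
  lsum L (fun c => g c * x c) <= lsum L (fun c => g c * z c) /\
  ((exists c, In c L /\ x c <> z c) -> lsum L (fun c => g c * x c) < lsum L (fun c => g c * z c)).
Proof.
intros Hp Hr [c0 Hc0] Hg Hx HS q a N z.
destruct (conj_facts p Hp) as [Hq [Hs [Hqp [Hq1 Hqp2]]]]. fold q in Hq, Hs, Hqp, Hq1, Hqp2.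
set (T := lsum L (fun c => Rpower (g c) q)).
assert (HT : 0 < T).
{ unfold T. eapply Rlt_le_trans; [|apply (lsum_ge_term _ _ c0); auto; intros; left; apply Rpower_pos]. apply Rpower_pos. }
assert (HN : N = Rpower T (1 / p)).
{ unfold N, bnorm. rewrite powp_pos_eq.
  - f_equal. unfold Sp. apply lsum_ext. intros c Hc. unfold a.
    rewrite Rabs_right by (left; apply Rpower_pos). rewrite powp_pos_eq by apply Rpower_pos.
    rewrite Rpower_mult. f_equal. lra.
  - unfold Sp. eapply Rlt_le_trans; [|apply (lsum_ge_term _ _ c0); auto; intros; apply powp_nonneg].
    apply powp_pos. rewrite Rabs_right; unfold a; [apply Rpower_pos|left; apply Rpower_pos]. }
set (G := Rpower T (1 / q)).
assert (HG : 0 < G) by apply Rpower_pos.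
assert (HGq : Rpower G q = T).
{ unfold G. rewrite Rpower_mult. replace (1 / q * q) with 1 by (field; lra). apply Rpower_1; auto. }
assert (HTN : T / N = G).
{ rewrite HN. unfold G. apply (Rmult_eq_reg_r (Rpower T (1 / p))); [|apply Rgt_not_eq; apply Rpower_pos].
  unfold Rdiv. rewrite Rmult_assoc, Rinv_l by (apply Rgt_not_eq; apply Rpower_pos).
  rewrite <- Rpower_plus. replace (1 * / q + 1 * / p) with 1 by lra. rewrite Rpower_1; auto; ring. }
assert (Hgz : lsum L (fun c => g c * z c) = rho * G).
{ rewrite <- HTN.
  rewrite (lsum_ext L _ (fun c => (rho * / N) * Rpower (g c) q)).
  - rewrite lsum_scal. fold T. unfold Rdiv. ring.
  - intros c Hc. unfold z, a. unfold Rdiv.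
    replace (g c * (rho * Rpower (g c) (q - 1) * / N)) with (rho * / N * (g c * Rpower (g c) (q - 1))) by ring.
    f_equal. rewrite <- (Rpower_1 (g c)) at 1 by auto. rewrite <- Rpower_plus. f_equal. ring. }
assert (Hyoung : forall c, In c L ->
  g c * x c <= rho * G * (powp (x c / rho) p / p + powp (g c / G) q / q) /\
  (powp (x c / rho) p <> powp (g c / G) q -> g c * x c < rho * G * (powp (x c / rho) p / p + powp (g c / G) q / q))).
{ intros c Hc. assert (0 <= x c / rho) by (apply Rmult_le_pos; [auto|left; apply Rinv_0_lt_compat; auto]).
  assert (0 < g c / G) by (apply Rdiv_lt_0_compat; auto).
  replace (g c * x c) with (rho * G * (x c / rho * (g c / G))) by (field; lra).
  assert (0 < rho * G) by nra.
  split.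
  - apply Rmult_le_compat_l; [lra|]. apply young; auto; lra.
  - intros Hne. apply Rmult_lt_compat_l; auto. apply young_strict; auto. }
assert (Hsum : lsum L (fun c => rho * G * (powp (x c / rho) p / p + powp (g c / G) q / q)) = rho * G).
{ rewrite lsum_scal, lsum_plus. unfold Rdiv.
  rewrite (lsum_ext L (fun c => powp (x c * / rho) p * / p) (fun c => (/ p * / Rpower rho p) * powp (Rabs (x c)) p)).
  2:{ intros c Hc. rewrite Rabs_right by (apply Rle_ge; auto). rewrite Rmult_comm, (Rmult_comm (x c)).
      rewrite powp_scale by (auto; apply Rinv_0_lt_compat; auto).
      unfold Rpower at 1. rewrite ln_Rinv by auto. unfold Rpower. rewrite <- exp_Ropp.
      replace (- (p * ln rho)) with (p * - ln rho) by ring. ring. }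
  rewrite (lsum_ext L (fun c => powp (g c * / G) q * / q) (fun c => (/ q * / T) * Rpower (g c) q)).
  2:{ intros c Hc. rewrite powp_pos_eq by (apply Rmult_lt_0_compat; auto; apply Rinv_0_lt_compat; auto).
      rewrite <- Rpower_mult_distr by (auto; apply Rinv_0_lt_compat; auto).
      rewrite <- HGq. unfold Rpower at 2 3. rewrite ln_Rinv by auto. rewrite <- exp_Ropp.
      replace (q * - ln G) with (- (q * ln G)) by ring. rewrite exp_Ropp. field.
      split; [apply Rgt_not_eq; apply exp_pos|lra]. }
  rewrite !lsum_scal. fold T. unfold Sp in HS. rewrite HS.
  replace (/ p * / Rpower rho p * Rpower rho p) with (/ p) by (field; split; [apply Rgt_not_eq, Rpower_pos|lra]). replace (/ q * / T * T) with (/ q) by (field; lra). rewrite Hs. ring. }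
split.
- rewrite Hgz, <- Hsum. apply lsum_le. intros. apply Hyoung; auto.
- intros [c [Hc Hne]]. rewrite Hgz, <- Hsum. apply lsum_lt.
  + intros. apply Hyoung; auto.
  + exists c. split; auto. apply Hyoung; auto. intro Heq. apply Hne.
    assert (Hgp : 0 < powp (g c / G) q) by (apply powp_pos; apply Rdiv_lt_0_compat; auto).
    assert (Hxp : 0 < x c).
    { destruct (Hx c Hc) as [H|H]; auto. rewrite <- H in Heq. unfold Rdiv in Heq. rewrite Rmult_0_l, powp_nonpos in Heq by lra. lra. }
    assert (Hxr : 0 < x c / rho) by (apply Rdiv_lt_0_compat; auto).
    rewrite !powp_pos_eq in Heq by (auto; apply Rdiv_lt_0_compat; auto).
    assert (E1 : x c / rho = Rpower (g c / G) (q - 1)).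
    { rewrite <- (Rpower_1 (x c / rho)) by auto. replace 1 with (p * (1 / p)) by (field; lra).
      rewrite <- Rpower_mult, Heq, Rpower_mult. f_equal. unfold q, conjexp. field. lra. }
    unfold z. rewrite HN.
    assert (E2 : Rpower G (q - 1) = Rpower T (1 / p)).
    { unfold G. rewrite Rpower_mult. f_equal. unfold q, conjexp. field. lra. }
    rewrite Rpower_div in E1 by (auto; apply Rdiv_lt_0_compat; auto).
    rewrite E2 in E1. unfold a.
    apply (Rmult_eq_reg_r (/ rho)); [|apply Rgt_not_eq, Rinv_0_lt_compat; auto].
    replace (x c * / rho) with (x c / rho) by auto. rewrite E1. field. split; [lra|apply Rgt_not_eq, Rpower_pos].
Qed.

Lemma allsum_blocks K n1 d f : allsum K n1 d f = rsum (S K) (fun b => lsum (blkL K n1 d b) f).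
Proof.
unfold allsum. simpl. f_equal.
- apply rsum_ext. intros i Hi. unfold blkL. replace (Nat.ltb i K) with true by (symmetry; apply Nat.ltb_lt; auto).
  unfold rowL. rewrite lsum_map_seq. auto.
- unfold blkL. rewrite Nat.ltb_irrefl. unfold uL. rewrite lsum_flat_map_seq. apply rsum_ext. intros.
  rewrite lsum_map_seq. auto.
Qed.

Lemma Splus_blocks K n1 d pw pu rw ru x : 1 < pw -> 1 < pu -> 0 < rw -> 0 < ru ->
  supp K n1 d x -> (forall c, inR K n1 d c = true -> 0 <= x c) ->
  (forall b, (b <= K)%nat -> bnorm (pb K pw pu b) x (blkL K n1 d b) = rbk K rw ru b) ->
  S_plus K n1 d pw pu rw ru x.
Proof.
intros Hpw Hpu Hrw Hru Sx Px Hb.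
destruct (blocknorm_iff K n1 d pw pu x) as [Hrow Hu].
split; [auto|split; [auto|split]].
- rewrite Hu. specialize (Hb K (le_n K)). unfold pb, rbk in Hb. rewrite Nat.ltb_irrefl in Hb. auto.
- intros i Hi. rewrite Hrow by auto. specialize (Hb i (Nat.lt_le_incl _ _ Hi)). unfold pb, rbk in Hb.
  replace (Nat.ltb i K) with true in Hb by (symmetry; apply Nat.ltb_lt; auto). auto.
Qed.

Lemma supp_Vopen K n1 d : Vopen K n1 d (supp K n1 d).
Proof. intros x _ _. exists 1. split; [lra|]. intros y Sy _. auto. Qed.

Lemma Gmap_on_block K n1 d pw pu rw ru Phi x b c :
  (b <= K)%nat -> In c (blkL K n1 d b) ->
  (forall c, inR K n1 d c = true -> 0 < pd Phi x c) ->
  Gmap K n1 d pw pu rw ru Phi x c =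
  rbk K rw ru b * Rpower (pd Phi x c) (conjexp (pb K pw pu b) - 1) /
  bnorm (pb K pw pu b) (fun c' => Rpower (pd Phi x c') (conjexp (pb K pw pu b) - 1)) (blkL K n1 d b).
Proof.
intros Hb Hin Hg. pose proof Hin as Hin'. apply In_blkL in Hin'; auto. destruct Hin' as [Hc Hbc].
rewrite Gmap_blk by auto. rewrite Hbc. unfold grad at 1. rewrite Hc, psi_pos by auto.
unfold rbk. f_equal. apply bnorm_ext. intros c' Hc'. apply In_blkL in Hc'; auto. destruct Hc' as [Hc' _].
unfold grad. rewrite Hc', psi_pos by auto. auto.
Qed.

Lemma block_gain K n1 d pw pu rw ru Phi xh b :
  (1 <= n1)%nat -> (1 <= d)%nat -> 1 < pw -> 1 < pu -> 0 < rw -> 0 < ru -> (b <= K)%nat ->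
  S_plus K n1 d pw pu rw ru xh -> (forall c, inR K n1 d c = true -> 0 < pd Phi xh c) ->
  let z := Gmap K n1 d pw pu rw ru Phi xh in
  0 <= lsum (blkL K n1 d b) (fun c => pd Phi xh c * (z c - xh c)) /\
  ((exists c, In c (blkL K n1 d b) /\ z c <> xh c) -> 0 < lsum (blkL K n1 d b) (fun c => pd Phi xh c * (z c - xh c))).
Proof.
intros Hn1 Hd Hpw Hpu Hrw Hru Hb Sxh Gp z.
assert (Hp : 1 < pb K pw pu b) by (unfold pb; destruct (Nat.ltb b K); auto).
assert (Hr : 0 < rbk K rw ru b) by (unfold rbk; destruct (Nat.ltb b K); auto).
assert (HS : Sp (pb K pw pu b) xh (blkL K n1 d b) = Rpower (rbk K rw ru b) (pb K pw pu b)).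
{ apply bnorm_eq; auto. apply Spp_bnorm; auto. }
destruct (holder_block (blkL K n1 d b) (pb K pw pu b) (rbk K rw ru b) (fun c => pd Phi xh c) xh Hp Hr) as [H1 H2].
- apply blkL_nonempty; auto.
- intros c Hc. apply In_blkL in Hc; auto. apply Gp. tauto.
- intros c Hc. apply In_blkL in Hc; auto. destruct Sxh as [_ [Px _]]. apply Px. tauto.
- auto.
- assert (Ez : forall c, In c (blkL K n1 d b) -> z c =
     rbk K rw ru b * (fun c0 => Rpower (pd Phi xh c0) (conjexp (pb K pw pu b) - 1)) c /
     bnorm (pb K pw pu b) (fun c0 => Rpower (pd Phi xh c0) (conjexp (pb K pw pu b) - 1)) (blkL K n1 d b)).
  { intros c Hc. unfold z. apply Gmap_on_block; auto. }
  rewrite (lsum_ext _ _ (fun c => pd Phi xh c * z c - pd Phi xh c * xh c)) by (intros; ring).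
  assert (E : forall f g, lsum (blkL K n1 d b) (fun c => f c - g c) = lsum (blkL K n1 d b) f - lsum (blkL K n1 d b) g).
  { intros. replace (fun c => f c - g c) with (fun c => f c + (-1) * g c) by (apply functional_extensionality; intros; ring).
    rewrite lsum_plus, lsum_scal. ring. }
  rewrite E. rewrite (lsum_ext _ (fun c => pd Phi xh c * z c) (fun c => pd Phi xh c *
     (rbk K rw ru b * (fun c0 => Rpower (pd Phi xh c0) (conjexp (pb K pw pu b) - 1)) c /
     bnorm (pb K pw pu b) (fun c0 => Rpower (pd Phi xh c0) (conjexp (pb K pw pu b) - 1)) (blkL K n1 d b))))
     by (intros; rewrite Ez; auto).
  split; [lra|]. intros [c [Hc Hne]].
  assert (H3 : lsum (blkL K n1 d b) (fun c0 => pd Phi xh c0 * xh c0) < lsum (blkL K n1 d b) (fun c0 => pd Phi xh c0 *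
     (rbk K rw ru b * (fun c1 => Rpower (pd Phi xh c1) (conjexp (pb K pw pu b) - 1)) c0 /
     bnorm (pb K pw pu b) (fun c1 => Rpower (pd Phi xh c1) (conjexp (pb K pw pu b) - 1)) (blkL K n1 d b)))).
  { apply H2. exists c. split; auto. intro E'. apply Hne. rewrite (Ez c Hc). rewrite E'. auto. }
  lra.
Qed.

Lemma max_fixed K n1 d pw pu rw ru Phi xh :
  (1 <= n1)%nat -> (1 <= d)%nat -> 1 < pw -> 1 < pu -> 0 < rw -> 0 < ru ->
  Phi_C1 K n1 d Phi ->
  (forall x, S_plus K n1 d pw pu rw ru x -> forall c, inR K n1 d c = true -> 0 < pd Phi x c) ->
  (forall x, B_pp K n1 d pw pu rw ru x -> forall c, inR K n1 d c = true -> 0 < pd Phi x c) ->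
  S_plus K n1 d pw pu rw ru xh ->
  (forall y, S_plus K n1 d pw pu rw ru y -> Phi y <= Phi xh) ->
  Gmap K n1 d pw pu rw ru Phi xh = xh.
Proof.
intros Hn1 Hd Hpw Hpu Hrw Hru HC1 HgS HgB Sxh Hmax.
assert (Hpb : forall b, 1 < pb K pw pu b) by (intros; unfold pb; destruct (Nat.ltb b K); auto).
assert (Hrb : forall b, 0 < rbk K rw ru b) by (intros; unfold rbk; destruct (Nat.ltb b K); auto).
set (z := Gmap K n1 d pw pu rw ru Phi xh).
assert (Gp : forall c, inR K n1 d c = true -> 0 < pd Phi xh c) by (apply HgS; auto).
assert (Sz : S_pp K n1 d pw pu rw ru z) by (apply Gmap_Spp; auto).
destruct Sxh as [Sx [Px [Nu Nw]]] eqn:ESxh. clear ESxh.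
assert (Sxh' : S_plus K n1 d pw pu rw ru xh) by (split; auto).
apply NNPP. intro Hne.
assert (Hex : exists c, inR K n1 d c = true /\ z c <> xh c).
{ apply NNPP. intro H. apply Hne. apply functional_extensionality. intro c.
  destruct (inR K n1 d c) eqn:Hc.
  - apply NNPP. intro H'. apply H. exists c. split; auto.
  - fold z. rewrite (proj1 (proj1 Sz)), Sx; auto. }
destruct Hex as [c1 [Hc1 Hne1]].
set (g := fun c => pd Phi xh c).
set (D := allsum K n1 d (fun c => g c * (z c - xh c))).
assert (HD : 0 < D).
{ unfold D. rewrite allsum_blocks.
  rewrite <- (rsum_zero (S K)). apply rsum_lt.
  - intros b Hb. apply (block_gain K n1 d pw pu rw ru Phi xh b); auto. lia.
  - exists (blk K c1). split; [pose proof (blk_le K n1 d c1 Hc1); lia|].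
    apply (block_gain K n1 d pw pu rw ru Phi xh (blk K c1)); auto; [apply blk_le with n1 d; auto|].
    exists c1. split; [apply In_blkL_self; auto|auto]. }
assert (Hz0 : forall c, inR K n1 d c = true -> 0 < z c) by (apply Sz).
assert (Szs : supp K n1 d z) by apply Sz.
assert (Px0 : forall c, inR K n1 d c = true -> 0 <= xh c) by auto.
assert (HSblk : forall y b, S_plus K n1 d pw pu rw ru y -> (b <= K)%nat ->
   Sp (pb K pw pu b) y (blkL K n1 d b) = Rpower (rbk K rw ru b) (pb K pw pu b)).
{ intros y b Sy Hb. apply bnorm_eq; auto. apply Spp_bnorm; auto. }
set (v := fun t : R => fun c => xh c + t * (z c - xh c)).
assert (Sv : forall t, supp K n1 d (v t)).
{ intros t c Hc. unfold v. rewrite Sx, Szs by auto. ring. }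
assert (Hv0 : v 0 = xh) by (apply functional_extensionality; intros; unfold v; ring).
assert (Hderv : derivable_pt_lim (fun t => Phi (v t)) 0 D).
{ pose proof (chain K n1 d (supp K n1 d) Phi v (fun c => z c - xh c) 0 (supp_Vopen K n1 d)) as Hch.
  rewrite Hv0 in Hch. apply Hch.
  - intros c Hc y Sy. apply (proj1 (HC1 c Hc)). auto.
  - intros c Hc. apply (HC1 c Hc).
  - auto.
  - auto.
  - intros c Hc. unfold v. apply CQ.d_aff. }
destruct (Hderv (D / 2)) as [del Hdel]; [lra|].
set (h := Rmin (del / 2) (1 / 2)).
assert (Hh0 : 0 < h) by (apply Rmin_pos; [pose proof (cond_pos del); lra|lra]).
assert (Hh1 : h <= 1 / 2) by apply Rmin_r.
assert (Hh2 : h <= del / 2) by apply Rmin_l.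
specialize (Hdel h (Rgt_not_eq _ _ Hh0)).
assert (Habs : Rabs h < del) by (rewrite Rabs_right by lra; pose proof (cond_pos del); lra).
specialize (Hdel Habs). rewrite Hv0 in Hdel. replace (0 + h) with h in Hdel by ring.
apply Rabs_def2 in Hdel. destruct Hdel as [Hdl1 Hdl2].
assert (Hincr : Phi xh < Phi (v h)).
{ assert (D / 2 < (Phi (v h) - Phi xh) / h) by lra.
  apply (Rmult_lt_compat_r h) in H; auto. replace ((Phi (v h) - Phi xh) / h * h) with (Phi (v h) - Phi xh) in H by (field; lra).
  assert (0 < D / 2 * h) by (apply Rmult_lt_0_compat; lra). lra. }
set (w := v h).
assert (Hw : forall c, inR K n1 d c = true -> 0 < w c).
{ intros c Hc. unfold w, v. pose proof (Px0 c Hc). pose proof (Hz0 c Hc). nra. }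
assert (Bw : B_pp K n1 d pw pu rw ru w).
{ apply Bpp_blocks; auto. split; [apply Sv|split; [auto|]].
  intros b Hb.
  eapply Rle_trans.
  - unfold Sp. apply (lsum_le _ _ (fun c => (1 - h) * powp (Rabs (xh c)) (pb K pw pu b) + h * powp (Rabs (z c)) (pb K pw pu b))).
    intros c Hc. apply In_blkL in Hc; auto. destruct Hc as [Hc _].
    pose proof (Px0 c Hc). pose proof (Hz0 c Hc). pose proof (Hw c Hc).
    rewrite !Rabs_right by lra. unfold w, v.
    replace (xh c + h * (z c - xh c)) with ((1 - h) * xh c + h * z c) by ring.
    apply powp_convex; auto; lra.
  - rewrite lsum_plus, !lsum_scal. fold (Sp (pb K pw pu b) xh (blkL K n1 d b)) (Sp (pb K pw pu b) z (blkL K n1 d b)).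
    rewrite !HSblk; auto; [lra|]. apply Sz. }
assert (HNw : forall b, (b <= K)%nat -> 0 < bnorm (pb K pw pu b) w (blkL K n1 d b)).
{ intros b Hb. destruct (blkL_nonempty K n1 d b Hn1 Hd Hb) as [c0 Hc0].
  apply (bnorm_pos _ _ _ c0); auto. apply In_blkL in Hc0; auto. apply Hw. tauto. }
assert (HNw2 : forall b, (b <= K)%nat -> bnorm (pb K pw pu b) w (blkL K n1 d b) <= rbk K rw ru b).
{ intros b Hb. apply bnorm_le; auto. apply Bpp_blocks in Bw; auto. apply Bw; auto. }
set (s := fun b => rbk K rw ru b / bnorm (pb K pw pu b) w (blkL K n1 d b)).
assert (Hs1 : forall b, (b <= K)%nat -> 1 <= s b).
{ intros b Hb. unfold s. pose proof (HNw b Hb). pose proof (HNw2 b Hb).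
  apply (Rmult_le_reg_r (bnorm (pb K pw pu b) w (blkL K n1 d b))); auto.
  unfold Rdiv. rewrite Rmult_assoc, Rinv_l by lra. lra. }
set (qq := fun tau : R => fun c => if inR K n1 d c then (1 + tau * (s (blk K c) - 1)) * w c else 0).
assert (Sqq : forall tau, supp K n1 d (qq tau)) by (intros tau c Hc; unfold qq; rewrite Hc; auto).
assert (Nqq : forall tau b, 0 <= tau -> (b <= K)%nat ->
   bnorm (pb K pw pu b) (qq tau) (blkL K n1 d b) = (1 + tau * (s b - 1)) * bnorm (pb K pw pu b) w (blkL K n1 d b)).
{ intros tau b Htau Hb. rewrite (bnorm_ext _ _ (fun c => (1 + tau * (s b - 1)) * w c)).
  - apply bnorm_scale; auto. pose proof (Hs1 b Hb). nra.
  - intros c Hc. apply In_blkL in Hc; auto. destruct Hc as [Hc Hbc]. unfold qq. rewrite Hc, Hbc. auto. }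
assert (Bqq : forall tau, 0 <= tau <= 1 -> B_pp K n1 d pw pu rw ru (qq tau)).
{ intros tau Htau. apply Bpp_blocks; auto. split; [auto|split].
  - intros c Hc. unfold qq. rewrite Hc. pose proof (Hs1 (blk K c) (blk_le K n1 d c Hc)). pose proof (Hw c Hc).
    apply Rmult_lt_0_compat; nra.
  - intros b Hb. apply bnorm_le; auto. rewrite Nqq by (auto; lra).
    pose proof (HNw b Hb). pose proof (Hs1 b Hb).
    assert ((1 + tau * (s b - 1)) * bnorm (pb K pw pu b) w (blkL K n1 d b) <= s b * bnorm (pb K pw pu b) w (blkL K n1 d b)).
    { apply Rmult_le_compat_r; nra. }
    unfold s at 2 in H1. unfold Rdiv in H1. rewrite Rmult_assoc, Rinv_l in H1 by lra. lra. }
assert (Sq1 : S_plus K n1 d pw pu rw ru (qq 1)).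
{ apply Splus_blocks; auto.
  - intros c Hc. left. apply (Bqq 1); auto; lra.
  - intros b Hb. rewrite Nqq by (auto; lra). replace (1 + 1 * (s b - 1)) with (s b) by ring.
    unfold s. pose proof (HNw b Hb). field. lra. }
assert (Hq0 : qq 0 = w).
{ apply functional_extensionality. intros c. unfold qq. destruct (inR K n1 d c) eqn:Hc; [ring|].
  symmetry. apply Sv. auto. }
destruct (MVT_cor2 (fun tau => Phi (qq tau))
   (fun tau => allsum K n1 d (fun c => pd Phi (qq tau) c * ((s (blk K c) - 1) * w c))) 0 1 Rlt_0_1) as [th [Hth Hthr]].
{ intros tau Htau. apply (chain K n1 d (supp K n1 d) Phi qq (fun c => (s (blk K c) - 1) * w c) tau (supp_Vopen K n1 d)).
  - intros c Hc y Sy. apply (proj1 (HC1 c Hc)). auto.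
  - intros c Hc. apply (HC1 c Hc).
  - auto.
  - auto.
  - intros c Hc. unfold qq. rewrite Hc. apply CQ.d_aff2. }
assert (Hder0 : 0 <= allsum K n1 d (fun c => pd Phi (qq th) c * ((s (blk K c) - 1) * w c))).
{ apply allsum_nonneg. intros c Hc. pose proof (HgB (qq th) (Bqq th ltac:(lra)) c Hc).
  pose proof (Hs1 (blk K c) (blk_le K n1 d c Hc)). pose proof (Hw c Hc).
  apply Rmult_le_pos; [lra|]. apply Rmult_le_pos; lra. }
rewrite Hq0 in Hth. replace (1 - 0) with 1 in Hth by ring.
pose proof (Hmax (qq 1) Sq1). fold w in Hincr. nra.
Qed.

Definition sincr (phi : nat -> nat) : Prop := forall n, (phi n < phi (S n))%nat.

Lemma sincr_ge phi : sincr phi -> forall n, (n <= phi n)%nat.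
Proof. intros H n. induction n; [lia|]. specialize (H n). lia. Qed.

Lemma sincr_mono phi : sincr phi -> forall m n, (m <= n)%nat -> (phi m <= phi n)%nat.
Proof.
intros H m n Hmn. induction Hmn; [lia|]. specialize (H m0). lia.
Qed.

Lemma sincr_comp phi psi : sincr phi -> sincr psi -> sincr (fun n => phi (psi n)).
Proof.
intros H1 H2 n. specialize (H2 n).
assert (phi (S (psi n)) <= phi (psi (S n)))%nat by (apply sincr_mono; auto).
specialize (H1 (psi n)). lia.
Qed.

Lemma Un_cv_sub u l psi : sincr psi -> Un_cv u l -> Un_cv (fun n => u (psi n)) l.
Proof.
intros Hp Hu eps Heps. destruct (Hu eps Heps) as [N HN]. exists N. intros n Hn.
apply HN. pose proof (sincr_ge psi Hp n). lia.
Qed.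

Lemma extract1 (u : nat -> R) (M : R) : (forall n, 0 <= u n <= M) ->
  exists psi l, sincr psi /\ Un_cv (fun n => u (psi n)) l.
Proof.
intros Hb.
destruct (Bolzano_Weierstrass u (fun c => 0 <= c <= M) (compact_P3 0 M) Hb) as [l Hl].
assert (Hch : forall N k, exists p, (N <= p)%nat /\ Rabs (u p - l) < / INR (S k)).
{ intros N k. assert (Hpos : 0 < / INR (S k)) by (apply Rinv_0_lt_compat, lt_0_INR; lia).
  destruct (Hl (disc l (mkposreal _ Hpos)) N) as [p [Hp Hv]].
  - exists (mkposreal _ Hpos). intros y Hy. auto.
  - exists p. split; auto. }
assert (Hf : forall Nk : nat * nat, exists p, (fst Nk <= p)%nat /\ Rabs (u p - l) < / INR (S (snd Nk)))
  by (intros [N k]; apply Hch).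
destruct (choice _ Hf) as [ch Hch'].
set (psi := fix psi (n : nat) : nat := match n with O => ch (0%nat, 0%nat) | S k => ch (S (psi k), S k) end).
exists psi, l. split.
- intros n. simpl. destruct (Hch' (S (psi n), S n)) as [H _]. simpl in H. lia.
- intros eps Heps.
  destruct (INR_unbounded (/ eps)) as [N HN].
  exists N. intros n Hn. unfold Rdist.
  assert (Hn' : Rabs (u (psi n) - l) < / INR (S n)).
  { destruct n; simpl; [apply (Hch' (0%nat, 0%nat))|apply (Hch' (S (psi n), S n))]. }
  assert (/ INR (S n) <= eps).
  { assert (0 < INR (S n)) by (apply lt_0_INR; lia).
    assert (INR N <= INR (S n)) by (apply le_INR; lia).
    rewrite <- (Rinv_inv eps). apply Rinv_le_contravar; [apply Rinv_0_lt_compat; auto|lra]. }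
  lra.
Qed.

Lemma extractL (Y : nat -> Pt) (M : R) (L : list Co) :
  (forall n c, In c L -> 0 <= Y n c <= M) ->
  exists phi (l : Co -> R), sincr phi /\ forall c, In c L -> Un_cv (fun n => Y (phi n) c) (l c).
Proof.
induction L as [|c L IH]; intros Hb.
- exists (fun n => n), (fun _ => 0). split; [intros n; lia|]. intros c [].
- destruct IH as [phi [l [Hphi Hl]]]; [intros; apply Hb; right; auto|].
  destruct (extract1 (fun n => Y (phi n) c) M) as [psi [l0 [Hpsi Hl0]]]; [intros; apply Hb; left; auto|].
  exists (fun n => phi (psi n)), (fun c' => if Co_eqb c c' then l0 else l c'). split; [apply sincr_comp; auto|].
  intros c' [Hc'|Hc'].
  + subst. rewrite Co_eqb_refl. auto.
  + destruct (Co_eqb c c') eqn:E.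
    * apply Co_eqb_spec in E. subst. auto.
    * apply (Un_cv_sub (fun n => Y (phi n) c')); auto.
Qed.

Lemma eventually_list (L : list Co) (P : Co -> nat -> Prop) :
  (forall c, In c L -> exists N, forall n, (N <= n)%nat -> P c n) ->
  exists N, forall c n, In c L -> (N <= n)%nat -> P c n.
Proof.
induction L as [|c L IH]; intros H.
- exists 0%nat. intros c n [].
- destruct (H c (or_introl eq_refl)) as [N1 H1].
  destruct IH as [N2 H2]; [intros; apply H; right; auto|].
  exists (Nat.max N1 N2). intros c' n [Hc|Hc] Hn.
  + subst. apply H1. lia.
  + apply H2; auto. lia.
Qed.

Lemma Un_cv_lsum (L : list Co) (F : nat -> Co -> R) (l : Co -> R) :
  (forall c, In c L -> Un_cv (fun n => F n c) (l c)) ->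
  Un_cv (fun n => lsum L (F n)) (lsum L l).
Proof.
induction L as [|c L IH]; intros H; simpl.
- intros eps Heps. exists 0%nat. intros. unfold Rdist. replace (0 - 0) with 0 by ring. rewrite Rabs_R0. auto.
- apply CV_plus; [apply H; left; auto|apply IH; intros; apply H; right; auto].
Qed.

Lemma Un_cv_nonneg u l : (forall n, 0 <= u n) -> Un_cv u l -> 0 <= l.
Proof.
intros H Hu. destruct (Rle_lt_dec 0 l) as [H1|H1]; auto.
destruct (Hu (- l)) as [N HN]; [lra|]. specialize (HN N (le_n N)). unfold Rdist in HN.
specialize (H N). apply Rabs_def2 in HN. lra.
Qed.

Lemma powp_abs_cont p : 1 <= p -> forall s, continuity_pt (fun y => powp (Rabs y) p) s.
Proof.
intros Hp s. unfold continuity_pt, continue_in, limit1_in, limit_in. simpl. unfold R_dist.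
intros eps Heps.
destruct (Req_dec s 0) as [Hs|Hs].
- subst. exists (Rmin 1 eps). split; [apply Rmin_pos; lra|]. intros y [_ Hy].
  rewrite Rabs_R0, (powp_nonpos 0 p) by lra. replace (y - 0) with y in Hy by ring.
  assert (Hy1 : Rabs y < 1) by (pose proof (Rmin_l 1 eps); lra).
  assert (Hy2 : Rabs y < eps) by (pose proof (Rmin_r 1 eps); lra).
  replace (powp (Rabs y) p - 0) with (powp (Rabs y) p) by ring.
  rewrite Rabs_right by (apply Rle_ge, powp_nonneg).
  destruct (Rabs_pos y) as [Hya|Hya].
  + rewrite powp_pos_eq by auto. unfold Rpower.
    assert (ln (Rabs y) < 0) by (rewrite <- ln_1; apply ln_increasing; lra).
    assert (p * ln (Rabs y) <= 1 * ln (Rabs y)) by nra.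
    assert (exp (p * ln (Rabs y)) <= exp (ln (Rabs y))).
    { destruct H0; [left; apply exp_increasing; lra|right; f_equal; lra]. }
    rewrite exp_ln in H1 by auto. lra.
  + rewrite <- Hya, powp_nonpos by lra. auto.
- assert (Hsa : 0 < Rabs s) by (apply Rabs_pos_lt; auto).
  set (f := fun y => exp (p * ln (Rabs y))).
  assert (Hf : continuity_pt f s).
  { unfold f. apply continuity_pt_comp with (f1 := fun y => p * ln (Rabs y)) (f2 := exp).
    - apply continuity_pt_comp with (f1 := Rabs) (f2 := fun z => p * ln z).
      + apply Rcontinuity_abs.
      + apply continuity_pt_mult; [apply continuity_pt_const; intros a b; auto|].
        apply derivable_continuous_pt. exists (/ Rabs s). apply derivable_pt_lim_ln. auto.
    - apply derivable_continuous_pt. apply derivable_pt_exp. }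
  destruct (Hf eps Heps) as [del [Hdel H]].
  exists (Rmin del (Rabs s)). split; [apply Rmin_pos; auto|]. intros y [[_ Hys] Hy].
  assert (Hy1 : Rabs (y - s) < del) by (pose proof (Rmin_l del (Rabs s)); lra).
  assert (Hy2 : Rabs (y - s) < Rabs s) by (pose proof (Rmin_r del (Rabs s)); lra).
  assert (Hya : 0 < Rabs y).
  { pose proof (Rabs_triang_inv s y). rewrite Rabs_minus_sym in Hy2. lra. }
  rewrite !powp_pos_eq by auto. unfold Rpower.
  apply (H y). split; [split; [exact I|auto]|]. simpl. unfold R_dist. auto.
Qed.

Lemma entry_Splus K n1 d pw pu rw ru x c : 1 < pw -> 1 < pu -> 0 < rw -> 0 < ru ->
  S_plus K n1 d pw pu rw ru x -> inR K n1 d c = true -> 0 <= x c <= Rmax rw ru.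
Proof.
intros Hpw Hpu Hrw Hru Sx Hc. pose proof Sx as [_ [Px _]].
split; [auto|].
pose proof (Spp_bnorm K n1 d pw pu rw ru x (blk K c) Hpw Hpu Hrw Hru Sx (blk_le K n1 d c Hc)) as E.
assert (Hp : 1 < pb K pw pu (blk K c)) by (unfold pb; destruct (Nat.ltb (blk K c) K); auto).
pose proof (entry_le_bnorm _ x _ c Hp (In_blkL_self K n1 d c Hc)). rewrite E in H.
rewrite Rabs_right in H by (apply Rle_ge; auto).
unfold rbk in H. destruct (Nat.ltb (blk K c) K); [pose proof (Rmax_l rw ru)|pose proof (Rmax_r rw ru)]; lra.
Qed.

Lemma limit_Splus K n1 d pw pu rw ru Phi (Y : nat -> Pt) phi (l : Co -> R) :
  (1 <= n1)%nat -> (1 <= d)%nat -> 1 < pw -> 1 < pu -> 0 < rw -> 0 < ru -> Phi_C1 K n1 d Phi ->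
  (forall n, S_plus K n1 d pw pu rw ru (Y n)) ->
  (forall c, inR K n1 d c = true -> Un_cv (fun n => Y (phi n) c) (l c)) ->
  let yh := fun c => if inR K n1 d c then l c else 0 in
  S_plus K n1 d pw pu rw ru yh /\ Un_cv (fun n => Phi (Y (phi n))) (Phi yh).
Proof.
intros Hn1 Hd Hpw Hpu Hrw Hru HC1 SY Hl yh.
assert (Syh : supp K n1 d yh) by (intros c Hc; unfold yh; rewrite Hc; auto).
assert (Hl' : forall c, inR K n1 d c = true -> Un_cv (fun n => Y (phi n) c) (yh c)).
{ intros c Hc. unfold yh. rewrite Hc. auto. }
split.
- apply Splus_blocks; auto.
  + intros c Hc. apply (Un_cv_nonneg (fun n => Y (phi n) c)); auto. intros n. apply (SY (phi n)); auto.
  + intros b Hb. assert (Hp : 1 < pb K pw pu b) by (unfold pb; destruct (Nat.ltb b K); auto).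
    assert (Hr : 0 < rbk K rw ru b) by (unfold rbk; destruct (Nat.ltb b K); auto).
    apply bnorm_eq; auto.
    assert (Hcv : Un_cv (fun n => Sp (pb K pw pu b) (Y (phi n)) (blkL K n1 d b)) (Sp (pb K pw pu b) yh (blkL K n1 d b))).
    { unfold Sp. apply (Un_cv_lsum _ (fun n c => powp (Rabs (Y (phi n) c)) (pb K pw pu b))).
      intros c Hc. apply In_blkL in Hc; auto. destruct Hc as [Hc _].
      apply (continuity_seq (fun y => powp (Rabs y) (pb K pw pu b))); [apply powp_abs_cont; lra|]. auto. }
    assert (Hcst : Un_cv (fun n => Sp (pb K pw pu b) (Y (phi n)) (blkL K n1 d b)) (Rpower (rbk K rw ru b) (pb K pw pu b))).
    { intros eps Heps. exists 0%nat. intros n _. unfold Rdist.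
      rewrite (proj1 (bnorm_eq _ _ _ _ Hp Hr)) by (apply Spp_bnorm; auto).
      replace (Rpower (rbk K rw ru b) (pb K pw pu b) - Rpower (rbk K rw ru b) (pb K pw pu b)) with 0 by ring.
      rewrite Rabs_R0. auto. }
    apply (UL_sequence _ _ _ Hcv Hcst).
- intros eps Heps.
  destruct (frechet_cont K n1 d (supp K n1 d) Phi yh (supp_Vopen K n1 d)
     (fun c Hc y Sy => proj1 (HC1 c Hc) y Sy) (fun c Hc => proj2 (HC1 c Hc)) Syh Syh eps Heps) as [del [Hdel H]].
  destruct (eventually_list (coords K n1 d) (fun c n => Rabs (Y (phi n) c - yh c) < del)) as [N HN].
  { intros c Hc. apply In_coords in Hc. destruct (Hl' c Hc del Hdel) as [N HN]. exists N. intros. apply HN; auto. }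
  exists N. intros n Hn. unfold Rdist. apply H.
  + apply (SY (phi n)).
  + intros c Hc. apply HN; auto. apply In_coords; auto.
Qed.

Lemma exists_max K n1 d pw pu rw ru Phi :
  (1 <= n1)%nat -> (1 <= d)%nat -> 1 < pw -> 1 < pu -> 0 < rw -> 0 < ru -> Phi_C1 K n1 d Phi ->
  (exists y0, S_plus K n1 d pw pu rw ru y0) ->
  exists xh, S_plus K n1 d pw pu rw ru xh /\ forall y, S_plus K n1 d pw pu rw ru y -> Phi y <= Phi xh.
Proof.
intros Hn1 Hd Hpw Hpu Hrw Hru HC1 [y0 Sy0].
assert (Extract : forall Y : nat -> Pt, (forall n, S_plus K n1 d pw pu rw ru (Y n)) ->
   exists phi yh, sincr phi /\ S_plus K n1 d pw pu rw ru yh /\ Un_cv (fun n => Phi (Y (phi n))) (Phi yh)).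
{ intros Y SY.
  destruct (extractL Y (Rmax rw ru) (coords K n1 d)) as [phi [l [Hphi Hl]]].
  { intros n c Hc. apply In_coords in Hc. apply (entry_Splus K n1 d pw pu rw ru); auto. }
  destruct (limit_Splus K n1 d pw pu rw ru Phi Y phi l Hn1 Hd Hpw Hpu Hrw Hru HC1 SY) as [H1 H2].
  { intros c Hc. apply Hl. apply In_coords; auto. }
  exists phi. eexists. split; [auto|split; [exact H1|exact H2]]. }
destruct (classic (exists M, forall y, S_plus K n1 d pw pu rw ru y -> Phi y <= M)) as [[M HM]|HU].
- set (E := fun r => exists y, S_plus K n1 d pw pu rw ru y /\ r = Phi y).
  destruct (completeness E) as [m [Hm1 Hm2]].
  { exists M. intros r [y [Sy Hr]]. subst. auto. }
  { exists (Phi y0). exists y0. auto. }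
  assert (HY : forall n : nat, exists y, S_plus K n1 d pw pu rw ru y /\ m - / INR (S n) < Phi y).
  { intros n. apply NNPP. intro H.
    assert (Hpos : 0 < / INR (S n)) by (apply Rinv_0_lt_compat, lt_0_INR; lia).
    assert (m <= m - / INR (S n)).
    { apply Hm2. intros r [y [Sy Hr]]. subst. destruct (Rle_lt_dec (Phi y) (m - / INR (S n))); auto.
      exfalso. apply H. exists y. auto. }
    lra. }
  destruct (choice _ HY) as [Y HY'].
  destruct (Extract Y (fun n => proj1 (HY' n))) as [phi [yh [Hphi [Syh Hcv]]]].
  exists yh. split; auto.
  assert (Hge : m <= Phi yh).
  { destruct (Rle_lt_dec m (Phi yh)) as [H|H]; auto. exfalso.
    set (e := (m - Phi yh) / 2).
    destruct (Hcv e) as [N HN]; [unfold e; lra|].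
    destruct (INR_unbounded (/ e)) as [N2 HN2].
    set (n := Nat.max N N2).
    specialize (HN n ltac:(unfold n; lia)). unfold Rdist in HN. apply Rabs_def2 in HN.
    destruct (HY' (phi n)) as [_ Hlow].
    assert (Hsmall : / INR (S (phi n)) < e).
    { assert (0 < e) by (unfold e; lra).
      assert (INR N2 <= INR (S (phi n))) by (apply le_INR; pose proof (sincr_ge phi Hphi n); unfold n in *; lia).
      assert (/ e < INR (S (phi n))) by lra.
      rewrite <- (Rinv_inv e). apply Rinv_lt_contravar; auto. apply Rmult_lt_0_compat; [apply Rinv_0_lt_compat; auto|apply lt_0_INR; lia]. }
    unfold e in *. lra. }
  intros y Sy. assert (Phi y <= m) by (apply Hm1; exists y; auto). lra.
- assert (HY : forall n : nat, exists y, S_plus K n1 d pw pu rw ru y /\ INR n < Phi y).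
  { intros n. apply NNPP. intro H. apply HU. exists (INR n). intros y Sy.
    destruct (Rle_lt_dec (Phi y) (INR n)); auto. exfalso. apply H. exists y. auto. }
  destruct (choice _ HY) as [Y HY'].
  destruct (Extract Y (fun n => proj1 (HY' n))) as [phi [yh [Hphi [Syh Hcv]]]].
  exfalso. destruct (Hcv 1 Rlt_0_1) as [N HN].
  destruct (INR_unbounded (Phi yh + 1)) as [N2 HN2].
  set (n := Nat.max N N2).
  specialize (HN n ltac:(unfold n; lia)). unfold Rdist in HN. apply Rabs_def2 in HN.
  destruct (HY' (phi n)) as [_ Hlow].
  assert (INR N2 <= INR (phi n)) by (apply le_INR; pose proof (sincr_ge phi Hphi n); unfold n in *; lia).
  lra.
Qed.

Lemma rsum_const m a : rsum m (fun _ => a) = INR m * a.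
Proof. induction m; simpl rsum; [simpl; ring|]. rewrite IHm, S_INR. ring. Qed.

Lemma exists_Bpp K n1 d pw pu rw ru : 1 < pw -> 1 < pu -> 0 < rw -> 0 < ru ->
  exists e, B_pp K n1 d pw pu rw ru e.
Proof.
intros Hpw Hpu Hrw Hru.
set (T := INR n1 * INR d + INR n1 + 1).
assert (HT : 1 <= T) by (unfold T; pose proof (pos_INR n1); pose proof (pos_INR d); nra).
set (m := Rmin (Rpower rw pw) (Rpower ru pu)).
assert (Hm : 0 < m) by (apply Rmin_pos; apply Rpower_pos).
set (eps := Rmin 1 (m / T)).
assert (He : 0 < eps) by (apply Rmin_pos; [lra|apply Rdiv_lt_0_compat; lra]).
assert (He1 : eps <= 1) by apply Rmin_l.
assert (HeT : eps * T <= m).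
{ assert (eps <= m / T) by apply Rmin_r. apply (Rmult_le_compat_r T) in H; [|lra].
  replace (m / T * T) with m in H by (field; lra). lra. }
set (e := fun c => if inR K n1 d c then eps else 0).
exists e. apply Bpp_blocks; auto.
split; [intros c Hc; unfold e; rewrite Hc; auto|split; [intros c Hc; unfold e; rewrite Hc; auto|]].
intros b Hb. assert (Hp : 1 < pb K pw pu b) by (unfold pb; destruct (Nat.ltb b K); auto).
assert (Hpe : powp eps (pb K pw pu b) <= eps).
{ rewrite powp_pos_eq by auto. unfold Rpower.
  destruct He1 as [He1|He1].
  - assert (ln eps < 0) by (rewrite <- ln_1; apply ln_increasing; lra).
    assert (pb K pw pu b * ln eps <= ln eps) by nra.
    rewrite <- (exp_ln eps) at 2 by auto.
    destruct H0; [left; apply exp_increasing; auto|right; f_equal; auto].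
  - rewrite He1, ln_1, Rmult_0_r, exp_0. lra. }
assert (Hpe0 : 0 <= powp eps (pb K pw pu b)) by apply powp_nonneg.
assert (HS : Sp (pb K pw pu b) e (blkL K n1 d b) <= eps * T).
{ unfold Sp, blkL. destruct (Nat.ltb b K) eqn:E.
  - apply Nat.ltb_lt in E. unfold rowL. rewrite lsum_map_seq.
    rewrite (rsum_ext _ _ (fun _ => powp eps (pb K pw pu b))).
    + rewrite rsum_const. unfold T. pose proof (pos_INR n1). pose proof (pos_INR d).
      assert (INR n1 * powp eps (pb K pw pu b) <= INR n1 * eps) by (apply Rmult_le_compat_l; lra).
      assert (0 <= eps * (INR n1 * INR d)) by (apply Rmult_le_pos; [lra|apply Rmult_le_pos; auto]).
      lra.
    + intros j Hj. unfold e. simpl. replace (Nat.ltb b K && Nat.ltb j n1)%bool with true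
        by (symmetry; apply andb_true_iff; rewrite !Nat.ltb_lt; auto).
      rewrite Rabs_right by lra. auto.
  - unfold uL. rewrite lsum_flat_map_seq.
    rewrite (rsum_ext _ _ (fun _ => rsum d (fun _ => powp eps (pb K pw pu b)))).
    + rewrite !rsum_const. unfold T. pose proof (pos_INR n1). pose proof (pos_INR d).
      assert (INR n1 * (INR d * powp eps (pb K pw pu b)) <= INR n1 * (INR d * eps)) by
        (apply Rmult_le_compat_l; auto; apply Rmult_le_compat_l; auto).
      assert (0 <= eps * INR n1) by (apply Rmult_le_pos; lra).
      lra.
    + intros a Ha. rewrite lsum_map_seq. apply rsum_ext. intros b0 Hb0. unfold e. simpl.
      replace (Nat.ltb a n1 && Nat.ltb b0 d)%bool with true
        by (symmetry; apply andb_true_iff; rewrite !Nat.ltb_lt; auto).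
      rewrite Rabs_right by lra. auto. }
assert (m <= Rpower (rbk K rw ru b) (pb K pw pu b)).
{ unfold m, rbk, pb. destruct (Nat.ltb b K); [apply Rmin_l|apply Rmin_r]. }
lra.
Qed.

Lemma Spp_Bpp K n1 d pw pu rw ru x : S_pp K n1 d pw pu rw ru x -> B_pp K n1 d pw pu rw ru x.
Proof.
intros [[Sx [Px [Nu Nw]]] Pp]. split; [auto|split; [auto|split; [lra|]]]. intros. rewrite Nw; auto; lra.
Qed.

Lemma linf_ge K n1 d x c : inR K n1 d c = true -> Rabs (x c) <= linf K n1 d x.
Proof.
intros Hc. unfold linf. destruct c; simpl in Hc; rewrite andb_true_iff, !Nat.ltb_lt in Hc.
- eapply Rle_trans; [|apply Rmax_l].
  eapply Rle_trans; [|apply (rmaxn_ge K (fun i0 => rmaxn n1 (fun j0 => Rabs (x (CW i0 j0)))) i); lia].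
  apply (rmaxn_ge n1 (fun j0 => Rabs (x (CW i j0))) j). lia.
- eapply Rle_trans; [|apply Rmax_r].
  eapply Rle_trans; [|apply (rmaxn_ge n1 (fun a0 => rmaxn d (fun b0 => Rabs (x (CU a0 b0)))) a); lia].
  apply (rmaxn_ge d (fun b0 => Rabs (x (CU a b0))) b). lia.
Qed.

From mathcomp Require all_boot all_algebra Rstruct.
Module LA.
Import all_boot all_algebra Rstruct.
Import GRing.Theory.

Lemma rsum_big m (f : nat -> R) : rsum m f = (\sum_(i < m) f i)%R.
Proof.
elim: m => [|m IH] /=; first by rewrite big_ord0.
by rewrite big_ord_recr /= IH.
Qed.

Lemma left_eig_right (m : nat) (A : nat -> nat -> R) (lam : R) (g : nat -> R) :
  (exists k, Peano.lt k m /\ g k <> 0) ->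
  (forall k, Peano.lt k m -> rsum m (fun i => A i k * g i) = lam * g k) ->
  exists x : nat -> R, (exists k, Peano.lt k m /\ x k <> 0) /\
    forall i, Peano.lt i m -> rsum m (fun j => A i j * x j) = lam * x i.
Proof.
move=> [k0 [/ltP Hk0 Hg0]] Heig.
pose M := (\matrix_(i < m, j < m) (A i j - (if (i == j) then lam else 0)))%R : 'M[R]_m.
pose v := (\row_(i < m) g i)%R : 'rV[R]_m.
have vn0 : v != 0%R.
  apply/eqP => /rowP /(_ (Ordinal Hk0)); rewrite !mxE /= => H; exact: Hg0 H.
have vM : (v *m M = 0)%R.
  apply/rowP => k; rewrite !mxE.
  have := Heig k (ltP (ltn_ord k)); rewrite rsum_big => H.
  rewrite (eq_bigr (fun i : 'I_m => (A i k * g i - (if i == k then lam * g i else 0)))%R); last first.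
    move=> i _; rewrite !mxE; case: eqP => [->|ne]; rewrite /=.
    - by rewrite mulrBr mulrC (mulrC (g k)).
    - by rewrite !subr0 mulrC.
  rewrite sumrB H (bigD1 k) //= eqxx big1 ?addr0 ?subrr //.
  by move=> i /negPf ->.
have : (\det M == 0)%R by apply/det0P; exists v.
rewrite -det_tr => /det0P [w wn0 wM].
exists (fun j => if (j < m)%N =P true is ReflectT Hj then w ord0 (Ordinal Hj) else 0).
split.
  have [j Hj] : exists j, w ord0 j != 0%R.
    apply/existsP; move: wn0; apply: contraR; rewrite negb_exists => /forallP H.
    by apply/eqP/rowP => j; rewrite mxE; move: (H j); rewrite negbK => /eqP.
  exists j; split; first exact/ltP/ltn_ord.
  case: eqP => [Hj'|]; last by rewrite ltn_ord.
  have -> : Ordinal Hj' = j by apply: val_inj.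
  by apply/eqP.
move=> i /ltP Hi.
move/rowP: wM => /(_ (Ordinal Hi)); rewrite !mxE => H.

rewrite rsum_big.
have E : forall j : 'I_m, (fun j : nat => if (j < m)%N =P true is ReflectT Hj then w ord0 (Ordinal Hj) else 0) j = w ord0 j.
  move=> j; case: eqP => [Hj|]; last by rewrite ltn_ord.
  by congr (w _ _); apply: val_inj.
rewrite (eq_bigr (fun j : 'I_m => A i j * w ord0 j)%R); last by move=> j _; rewrite E.
have ->: (fun j : nat => if (j < m)%N =P true is ReflectT Hj then w ord0 (Ordinal Hj) else 0) i = w ord0 (Ordinal Hi).
  by rewrite (E (Ordinal Hi)).
apply/eqP; rewrite -subr_eq0; apply/eqP.
transitivity (\sum_j w 0 j * M^T j (Ordinal Hi))%R; last exact H.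
symmetry.
rewrite (eq_bigr (fun j : 'I_m => A i j * w ord0 j - (if (Ordinal Hi) == j then lam * w ord0 j else 0))%R); last first.
  move=> j _; rewrite mxE /M mxE; case: eqP => [<-|ne]; rewrite /=.
  - by rewrite mulrC mulrBl.
  - by rewrite !subr0 mulrC.
rewrite sumrB; congr (_ - _); rewrite (bigD1 (Ordinal Hi)) //= eqxx big1 ?addr0 //.
by move=> j; rewrite eq_sym => /negPf ->.
Qed.
End LA.

Set Bullet Behavior "Strict Subproofs".

Theorem mainTheorem7
  (K n1 d : nat) (pw pu rw ru : R) (Phi : Pt -> R)
  (A : nat -> nat -> R) (gam : nat -> R) (r : R)
  (HK : (1 <= K)%nat) (Hn1 : (1 <= n1)%nat) (Hd : (1 <= d)%nat)
  (Hpw : 1 < pw) (Hpu : 1 < pu) (Hrw : 0 < rw) (Hru : 0 < ru)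
  (HC1 : Phi_C1 K n1 d Phi)
  (HC2 : exists U : Pt -> Prop, Vopen K n1 d U /\
           (forall x, B_pp K n1 d pw pu rw ru x -> U x) /\ C2_on K n1 d U Phi)
  (Hgradpos : forall x, (S_plus K n1 d pw pu rw ru x \/ B_pp K n1 d pw pu rw ru x) ->
       forall c, inR K n1 d c = true -> 0 < pd Phi x c)
  (HAnn : forall i k, (i <= K)%nat -> (k <= K)%nat -> 0 <= A i k)
  (HA : forall x, B_pp K n1 d pw pu rw ru x ->
       forall c, inR K n1 d c = true ->
         (forall k, (k < K)%nat ->
            rsum n1 (fun l => Rabs (pd (fun y => Gmap K n1 d pw pu rw ru Phi y c) x (CW k l))
                              * x (CW k l))
            <= A (blk K c) k * Gmap K n1 d pw pu rw ru Phi x c) /\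
         rsum n1 (fun a => rsum d (fun b =>
              Rabs (pd (fun y => Gmap K n1 d pw pu rw ru Phi y c) x (CU a b)) * x (CU a b)))
            <= A (blk K c) K * Gmap K n1 d pw pu rw ru Phi x c)
  (Hgam_pos : forall i, (i <= K)%nat -> 0 < gam i)
  (Hgam_eig : exists lam, forall k, (k <= K)%nat ->
       rsum (S K) (fun i => A i k * gam i) = lam * gam k)
  (Hr : is_spectral_radius (S K) A r)
  (Hr1 : r < 1) :
  exists xs : Pt,
    crit_pt K n1 d pw pu rw ru Phi xs /\
    (forall y, crit_pt K n1 d pw pu rw ru Phi y -> forall c, y c = xs c) /\
    (forall y, S_plus K n1 d pw pu rw ru y -> Phi y <= Phi xs) /\
    (forall x0, S_pp K n1 d pw pu rw ru x0 ->
       (forall eps, 0 < eps -> exists N, forall k, (N <= k)%nat ->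
          forall c, inR K n1 d c = true ->
            Rabs (Nat.iter k (Gmap K n1 d pw pu rw ru Phi) x0 c - xs c) < eps) /\
       (forall k : nat,
          linf K n1 d (fun c => Nat.iter k (Gmap K n1 d pw pu rw ru Phi) x0 c - xs c)
          <= r ^ k * mu K n1 d gam (Gmap K n1 d pw pu rw ru Phi x0) x0
             / ((1 - r) * Rmin (gam K / ru) (rminn K gam / rw)))).
Proof.
destruct HC2 as [U [HU [HBU HC2U]]].
destruct Hgam_eig as [lam Heig].
set (G := Gmap K n1 d pw pu rw ru Phi).
assert (HS : Setting K n1 d pw pu rw ru U Phi A).
{ unfold Setting. split; [auto|split; [auto|split; [auto|split; [auto|split; [auto|split; [auto|]]]]]].
  split; [split; auto|]. split; [auto|]. split; [intros x0 Bx0 c0 Hc0; apply Hgradpos; auto|].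
  split; [auto|]. exact HA. }
assert (HgS : forall x, S_plus K n1 d pw pu rw ru x -> forall c, inR K n1 d c = true -> 0 < pd Phi x c)
  by (intros; apply Hgradpos; auto).
assert (HgB : forall x, B_pp K n1 d pw pu rw ru x -> forall c, inR K n1 d c = true -> 0 < pd Phi x c)
  by (intros; apply Hgradpos; auto).
assert (Hlam0 : 0 <= lam).
{ specialize (Heig 0%nat ltac:(lia)).
  assert (0 <= rsum (S K) (fun i => A i 0%nat * gam i)).
  { apply rsum_nonneg. intros i Hi. apply Rmult_le_pos; [apply HAnn; lia|left; apply Hgam_pos; lia]. }
  assert (0 < gam 0%nat) by (apply Hgam_pos; lia). nra. }
assert (Hlamr : lam <= r).
{ destruct (LA.left_eig_right (S K) A lam gam) as [xv [[k [Hk Hxk]] Hxv]].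
  - exists 0%nat. split; [lia|]. apply Rgt_not_eq. apply Hgam_pos. lia.
  - intros k Hk. apply Heig. lia.
  - destruct Hr as [_ Hr2]. specialize (Hr2 lam 0).
    assert (Hce : is_ceigenvalue (S K) A lam 0).
    { exists xv, (fun _ => 0). split; [exists k; auto|].
      intros i Hi. split.
      - rewrite Hxv by auto. ring.
      - rewrite (rsum_ext _ _ (fun _ => 0)) by (intros; ring). rewrite rsum_zero. ring. }
    specialize (Hr2 Hce). replace (lam * lam + 0 * 0) with (Rsqr lam) in Hr2 by (unfold Rsqr; ring).
    rewrite sqrt_Rsqr_abs in Hr2. rewrite Rabs_right in Hr2 by lra. auto. }
assert (Hlam1 : lam < 1) by lra.
assert (Contr : forall x y, B_pp K n1 d pw pu rw ru x -> B_pp K n1 d pw pu rw ru y ->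
   mu K n1 d gam (G x) (G y) <= lam * mu K n1 d gam x y).
{ intros x y Bx By. apply (contraction K n1 d pw pu rw ru U Phi A gam lam); auto. }
destruct (exists_Bpp K n1 d pw pu rw ru Hpw Hpu Hrw Hru) as [e Be].
assert (Se : S_plus K n1 d pw pu rw ru (G e)).
{ apply Gmap_Spp; auto. }
destruct (exists_max K n1 d pw pu rw ru Phi Hn1 Hd Hpw Hpu Hrw Hru HC1 (ex_intro _ _ Se)) as [xh [Sxh Hmax]].
assert (Hfix : G xh = xh) by (apply (max_fixed K n1 d pw pu rw ru Phi xh); auto).
assert (Sppxh : S_pp K n1 d pw pu rw ru xh).
{ rewrite <- Hfix. apply Gmap_Spp; auto. }
assert (Bxh : B_pp K n1 d pw pu rw ru xh) by (apply Spp_Bpp; auto).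
exists xh. split; [|split; [|split]].
- apply crit_of_fixed; auto.
- intros y Cy c.
  assert (Sy : S_pp K n1 d pw pu rw ru y) by apply Cy.
  assert (Fy : G y = y) by (apply fixed_of_crit; auto; apply HgS; apply Sy).
  assert (Hm : mu K n1 d gam y xh <= 0).
  { pose proof (Contr y xh (Spp_Bpp _ _ _ _ _ _ _ _ Sy) Bxh). fold G in H. rewrite Fy, Hfix in H.
    pose proof (mu_nonneg K n1 d gam y xh Hgam_pos). nra. }
  destruct (inR K n1 d c) eqn:Hc.
  + apply (mu_zero K n1 d gam y xh Hgam_pos); auto; [apply Sy|apply Sppxh].
  + rewrite (proj1 (proj1 Sy)), (proj1 (proj1 Sppxh)); auto.
- auto.
- intros x0 Sx0.
  set (xk := fun k => Nat.iter k G x0).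
  assert (Sxk : forall k, S_pp K n1 d pw pu rw ru (xk k)).
  { induction k; [exact Sx0|]. simpl. apply Gmap_Spp; auto. apply HgS. apply IHk. }
  assert (Hmuk : forall k, mu K n1 d gam (xk k) xh <= lam ^ k * mu K n1 d gam x0 xh).
  { induction k; [simpl; lra|].
    change (xk (S k)) with (G (xk k)).
    pose proof (Contr (xk k) xh (Spp_Bpp _ _ _ _ _ _ _ _ (Sxk k)) Bxh). rewrite Hfix in H.
    simpl. nra. }
  set (m := Rmin (gam K / ru) (rminn K gam / rw)).
  assert (Hm : 0 < m).
  { assert (0 < gam K) by (apply Hgam_pos; lia).
    assert (0 < rminn K gam) by (apply rminn_pos; intros; apply Hgam_pos; lia).
    apply Rmin_pos; apply Rdiv_lt_0_compat; auto. }
  set (C := mu K n1 d gam (G x0) x0).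
  assert (HC0 : 0 <= C) by (apply mu_nonneg; auto).
  assert (H0 : mu K n1 d gam x0 xh <= C / (1 - lam)).
  { pose proof (mu_triangle K n1 d gam x0 (G x0) xh Hgam_pos) as T1.
    pose proof (Contr x0 xh (Spp_Bpp _ _ _ _ _ _ _ _ Sx0) Bxh) as T2. rewrite Hfix in T2.
    rewrite (mu_sym K n1 d gam x0 (G x0)) in T1. fold C in T1.
    apply (Rmult_le_reg_r (1 - lam)); [lra|]. replace (C / (1 - lam) * (1 - lam)) with C by (field; lra). nra. }
  assert (Hbound : forall k, linf K n1 d (fun c => xk k c - xh c) <= r ^ k * C / ((1 - r) * m)).
  { intros k.
    eapply Rle_trans; [apply (linf_le_mu K n1 d pw pu rw ru gam); auto; apply Spp_Bpp; auto|].
    fold m.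
    assert (Hpk : lam ^ k <= r ^ k) by (apply pow_incr; lra).
    assert (Hpk0 : 0 <= lam ^ k) by (apply pow_le; auto).
    assert (mu K n1 d gam (xk k) xh <= r ^ k * C / (1 - r)).
    { eapply Rle_trans; [apply Hmuk|].
      assert (lam ^ k * mu K n1 d gam x0 xh <= lam ^ k * (C / (1 - lam))) by (apply Rmult_le_compat_l; auto).
      assert (C / (1 - lam) <= C / (1 - r)).
      { unfold Rdiv. apply Rmult_le_compat_l; auto. apply Rinv_le_contravar; lra. }
      assert (0 <= C / (1 - lam)) by (unfold Rdiv; apply Rmult_le_pos; [auto|left; apply Rinv_0_lt_compat; lra]).
      assert (lam ^ k * (C / (1 - lam)) <= r ^ k * (C / (1 - r))).
      { apply Rmult_le_compat; auto. }
      unfold Rdiv in *. lra. }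
    unfold Rdiv. rewrite Rinv_mult. 
    apply (Rmult_le_compat_r (/ m)) in H; [|left; apply Rinv_0_lt_compat; auto].
    unfold Rdiv in H. lra. }
  split.
  + intros eps Heps.
    set (B := C / ((1 - r) * m)).
    assert (HB : 0 <= B).
    { unfold B, Rdiv. apply Rmult_le_pos; auto. left. apply Rinv_0_lt_compat. apply Rmult_lt_0_compat; lra. }
    assert (Hr0 : 0 <= r).
    { destruct Hr as [[a [b [_ Hab]]] _]. rewrite <- Hab. apply sqrt_pos. }
    destruct (pow_lt_1_zero r ltac:(rewrite Rabs_right; lra) (eps / (B + 1))) as [N HN].
    { apply Rdiv_lt_0_compat; lra. }
    exists N. intros k Hk c Hc.
    specialize (HN k Hk). rewrite Rabs_right in HN by (apply Rle_ge, pow_le; auto).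
    pose proof (linf_ge K n1 d (fun c => xk k c - xh c) c Hc). simpl in H.
    specialize (Hbound k).
    assert (r ^ k * C / ((1 - r) * m) = r ^ k * B) by (unfold B, Rdiv; ring).
    assert (r ^ k * B <= eps / (B + 1) * B) by (apply Rmult_le_compat_r; lra).
    assert (eps / (B + 1) * B < eps).
    { unfold Rdiv. apply (Rmult_lt_reg_r (B + 1)); [lra|].
      replace (eps * / (B + 1) * B * (B + 1)) with (eps * B) by (field; lra). nra. }
    unfold xk in *. lra.
  + intros k. apply Hbound.
Qed.
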